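(* Let $1\le\alpha\le d$, $k\ge1$, $S_\alpha=(\mathrm{Id}_n+W_\alpha V_\alpha)\cdots(\mathrm{Id}_n+W_1V_1)Z$. With the convention $\dot F=\{H,F\}$, the flow of $H=\frac1k\operatorname{tr}S_\alpha^k$ on $\mathcal C^\times_{n,d,q}$ starting at (the class of) $(X,Z,V_\beta,W_\beta)$ is given by $X(t)=Xe^{-tS_\alpha^k}$, $Z(t)=e^{tS_\alpha^k}Ze^{-tS_\alpha^k}$, $V_\beta(t)=V_\beta e^{-tS_\alpha^k}$ and $W_\beta(t)=e^{tS_\alpha^k}W_\beta$ for $\beta\le\alpha$, $V_\beta(t)=V_\beta$ and $W_\beta(t)=W_\beta$ for $\beta>\alpha$, where $S_\alpha$ is evaluated at the initial point. The flow is complete on $\mathcal C^\times_{n,d,q}$.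
   Context: Fix integers $n\ge1$, $d\ge1$ and $q\in\mathbb C^\times$ not a root of unity. Greek indices range over $\{1,\dots,d\}$; set $o(\alpha,\beta)=0$ if $\alpha=\beta$, $o(\alpha,\beta)=1$ if $\alpha<\beta$, $o(\alpha,\beta)=-1$ if $\alpha>\beta$. Let $\mathcal M^\times_{n,d,q}$ be the affine variety of tuples $(X,Z,V_1,\dots,V_d,W_1,\dots,W_d)$ with $X,Z\in\mathrm{GL}_n(\mathbb C)$, $V_\alpha\in\mathrm{Mat}_{1\times n}(\mathbb C)$, $W_\alpha\in\mathrm{Mat}_{n\times 1}(\mathbb C)$, such that every $\mathrm{Id}_n+W_\alpha V_\alpha$ is invertible and $XZX^{-1}Z^{-1}(\mathrm{Id}_n+W_1V_1)^{-1}\cdots(\mathrm{Id}_n+W_dV_d)^{-1}=q\,\mathrm{Id}_n$. $\mathrm{GL}_n$ acts by $g\cdot(X,Z,V_\alpha,W_\alpha)=(gXg^{-1},gZg^{-1},V_\alpha g^{-1},gW_\alpha)$; the action is free and $\mathcal C^\times_{n,d,q}=\mathcal M^\times_{n,d,q}/\!/\mathrm{GL}_n$ is a smooth affine variety of dimension $2nd$ with $\mathbb C[\mathcal C^\times_{n,d,q}]=\mathbb C[\mathcal M^\times_{n,d,q}]^{\mathrm{GL}_n}$. Write $V_{\alpha,j}$, $W_{\alpha,k}$ for the entries. Let $\{-,-\}$ be the antisymmetric biderivation on functions of $(X,Z,V_\alpha,W_\alpha)$ (Van den Bergh's quasi-Poisson bracket) given by $\{X_{ij},X_{kl}\}=\tfrac12(\delta_{il}(X^2)_{kj}-\delta_{kj}(X^2)_{il})$,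 $\{Z_{ij},Z_{kl}\}=\tfrac12(\delta_{kj}(Z^2)_{il}-\delta_{il}(Z^2)_{kj})$, $\{X_{ij},Z_{kl}\}=\tfrac12((ZX)_{kj}\delta_{il}+\delta_{kj}(XZ)_{il}+Z_{kj}X_{il}-X_{kj}Z_{il})$, $\{U_{ij},W_{\alpha,k}\}=\tfrac12(\delta_{kj}(UW_\alpha)_i-U_{kj}W_{\alpha,i})$, $\{U_{ij},V_{\alpha,l}\}=\tfrac12((V_\alpha U)_j\delta_{il}-V_{\alpha,j}U_{il})$ for $U\in\{X,Z\}$, $\{V_{\alpha,j},V_{\beta,l}\}=\tfrac12 o(\beta,\alpha)(V_{\beta,j}V_{\alpha,l}+V_{\alpha,j}V_{\beta,l})$, $\{W_{\alpha,i},W_{\beta,k}\}=\tfrac12 o(\beta,\alpha)(W_{\beta,k}W_{\alpha,i}+W_{\alpha,k}W_{\beta,i})$, $\{V_{\alpha,j},W_{\beta,k}\}=\delta_{\alpha\beta}(\delta_{kj}+\tfrac12W_{\alpha,k}V_{\alpha,j}+\tfrac12\delta_{kj}V_\alpha W_\alpha)+\tfrac12 o(\alpha,\beta)(\delta_{kj}V_\alpha W_\beta+W_{\beta,k}V_{\alpha,j})$. Restricted to $\mathrm{GL}_n$-invariant functions this bracket induces a non-degenerate Poisson bracket on $\mathcal C^\times_{n,d,q}$ (quasi-Hamiltonian reduction); this is the Poisson bracket $\{-,-\}$ on $\mathcal C^\times_{n,d,q}$. Flows of invariant $H$ are computed on representatives by $\dot M_{ij}=\{H,M_{ij}\}$.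 *)

(* Defs.v *)
(* complex numbers built on Stdlib reals, matrices as
   functions on indices (only indices < n are meaningful). *)
From Stdlib Require Import Reals List Arith ClassicalEpsilon.
Import ListNotations.
Open Scope R_scope.

Record Cx := mkC { Re : R; Im : R }.
Definition C0 : Cx := mkC 0 0.
Definition C1 : Cx := mkC 1 0.
Definition RtoC (r : R) : Cx := mkC r 0.
Definition Cadd (a b : Cx) : Cx := mkC (Re a + Re b) (Im a + Im b).
Definition Copp (a : Cx) : Cx := mkC (- Re a) (- Im a).
Definition Csub (a b : Cx) : Cx := Cadd a (Copp b).
Definition Cmul (a b : Cx) : Cx :=
  mkC (Re a * Re b - Im a * Im b) (Re a * Im b + Im a * Re b).
Definition Cnorm2 (a : Cx) : R := Re a * Re a + Im a * Im a.
Definition Cinv (a : Cx) : Cx := mkC (Re a / Cnorm2 a) (- Im a / Cnorm2 a).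
Definition Cdiv (a b : Cx) : Cx := Cmul a (Cinv b).
Definition Cmod (a : Cx) : R := sqrt (Cnorm2 a).
Fixpoint Cpow (a : Cx) (m : nat) : Cx :=
  match m with O => C1 | S m' => Cmul a (Cpow a m') end.

Definition has_cderiv (f : Cx -> Cx) (z0 L : Cx) : Prop :=
  forall eps : R, eps > 0 -> exists delta : R, delta > 0 /\
    forall h : Cx, h <> C0 -> Cmod h < delta ->
      Cmod (Csub (Cdiv (Csub (f (Cadd z0 h)) (f z0)) h) L) < eps.

Fixpoint csum (m : nat) (f : nat -> Cx) : Cx :=
  match m with O => C0 | S m' => Cadd (csum m' f) (f m') end.
Definition clsum {A : Type} (l : list A) (f : A -> Cx) : Cx :=
  fold_right (fun x acc => Cadd (f x) acc) C0 l.

Definition mat := nat -> nat -> Cx.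
Definition mId : mat := fun i j => if Nat.eqb i j then C1 else C0.
Definition madd (A B : mat) : mat := fun i j => Cadd (A i j) (B i j).
Definition mscale (c : Cx) (A : mat) : mat := fun i j => Cmul c (A i j).
Definition mmul (n : nat) (A B : mat) : mat :=
  fun i j => csum n (fun l => Cmul (A i l) (B l j)).
Fixpoint mpow (n : nat) (A : mat) (m : nat) : mat :=
  match m with O => mId | S m' => mmul n A (mpow n A m') end.
Definition mtr (n : nat) (A : mat) : Cx := csum n (fun i => A i i).
Definition meq (n : nat) (A B : mat) : Prop :=
  forall i j, (i < n)%nat -> (j < n)%nat -> A i j = B i j.
Definition is_inverse (n : nat) (A B : mat) : Prop :=
  meq n (mmul n A B) mId /\ meq n (mmul n B A) mId.
Definition invertible (n : nat) (A : mat) : Prop := exists B, is_inverse n A B.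
(* the inverse matrix (unique up to meq when A is invertible) *)
Definition minv (n : nat) (A : mat) : mat :=
  epsilon (inhabits mId) (fun B => is_inverse n A B).
Fixpoint mprod_up (n : nat) (A : nat -> mat) (m : nat) : mat :=
  match m with O => mId | S m' => mmul n (mprod_up n A m') (A m') end.
Fixpoint mprod_down (n : nat) (A : nat -> mat) (m : nat) : mat :=
  match m with O => mId | S m' => mmul n (A m') (mprod_down n A m') end.

Definition exp_partial (n : nat) (A : mat) (N : nat) : mat :=
  fun i j => csum (S N) (fun m => Cmul (RtoC (/ INR (fact m))) (mpow n A m i j)).
Definition is_mexp (n : nat) (A E : mat) : Prop :=
  forall i j, (i < n)%nat -> (j < n)%nat ->
    Un_cv (fun N => Re (exp_partial n A N i j)) (Re (E i j)) /\
    Un_cv (fun N => Im (exp_partial n A N i j)) (Im (E i j)).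
Definition mexp (n : nat) (A : mat) : mat :=
  epsilon (inhabits mId) (fun E => is_mexp n A E).

(* Multiplicity index alpha is 0-based: alpha = 0..d-1 stands for 1..d. *)
Record point := mkPt {
  pX : mat; pZ : mat;
  pV : nat -> nat -> Cx;   (* pV a j = V_{a,j}  (row vector V_a) *)
  pW : nat -> nat -> Cx    (* pW a i = W_{a,i}  (column vector W_a) *)
}.
Definition IWV (p : point) (a : nat) : mat :=
  madd mId (fun i j => Cmul (pW p a i) (pV p a j)).

Definition root_of_unity (q : Cx) : Prop := exists m : nat, (m >= 1)%nat /\ Cpow q m = C1.

Definition in_M (n d : nat) (q : Cx) (p : point) : Prop :=
  invertible n (pX p) /\ invertible n (pZ p) /\
  (forall a, (a < d)%nat -> invertible n (IWV p a)) /\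
  meq n (mmul n (mmul n (mmul n (mmul n (pX p) (pZ p)) (minv n (pX p))) (minv n (pZ p)))
            (mprod_up n (fun a => minv n (IWV p a)) d))
        (mscale q mId).

Inductive coord := cX (i j : nat) | cZ (i j : nat) | cV (a j : nat) | cW (a i : nat).

Definition coords (n d : nat) : list coord :=
  map (fun ij => cX (fst ij) (snd ij)) (list_prod (seq 0 n) (seq 0 n)) ++
  map (fun ij => cZ (fst ij) (snd ij)) (list_prod (seq 0 n) (seq 0 n)) ++
  map (fun aj => cV (fst aj) (snd aj)) (list_prod (seq 0 d) (seq 0 n)) ++
  map (fun aj => cW (fst aj) (snd aj)) (list_prod (seq 0 d) (seq 0 n)).

Definition coord_val (p : point) (c : coord) : Cx :=
  match c with
  | cX i j => pX p i j | cZ i j => pZ p i j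
  | cV a j => pV p a j | cW a i => pW p a i end.

Definition addat (F : nat -> nat -> Cx) (a b : nat) (z : Cx) : nat -> nat -> Cx :=
  fun x y => if andb (Nat.eqb x a) (Nat.eqb y b) then Cadd (F x y) z else F x y.
Definition upd (p : point) (c : coord) (z : Cx) : point :=
  match c with
  | cX i j => mkPt (addat (pX p) i j z) (pZ p) (pV p) (pW p)
  | cZ i j => mkPt (pX p) (addat (pZ p) i j z) (pV p) (pW p)
  | cV a j => mkPt (pX p) (pZ p) (addat (pV p) a j z) (pW p)
  | cW a i => mkPt (pX p) (pZ p) (pV p) (addat (pW p) a i z)
  end.

Definition dlt (i j : nat) : Cx := if Nat.eqb i j then C1 else C0.
Definition o (a b : nat) : Cx :=
  if Nat.eqb a b then C0 else if Nat.ltb a b then C1 else Copp C1.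
Definition half : Cx := RtoC (/ 2).
Definition rowmul (n : nat) (v : nat -> Cx) (U : mat) : nat -> Cx :=
  fun j => csum n (fun m => Cmul (v m) (U m j)).
Definition mulcol (n : nat) (U : mat) (w : nat -> Cx) : nat -> Cx :=
  fun i => csum n (fun m => Cmul (U i m) (w m)).
Definition dot (n : nat) (v w : nat -> Cx) : Cx := csum n (fun m => Cmul (v m) (w m)).

(* {U_ij, W_{a,k}} and {U_ij, V_{a,l}} for U in {X, Z} *)
Definition brUW (n : nat) (U : mat) (w : nat -> Cx) (i j k : nat) : Cx :=
  Cmul half (Csub (Cmul (dlt k j) (mulcol n U w i)) (Cmul (U k j) (w i))).
Definition brUV (n : nat) (U : mat) (v : nat -> Cx) (i j l : nat) : Cx :=
  Cmul half (Csub (Cmul (rowmul n v U j) (dlt i l)) (Cmul (v j) (U i l))).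
Definition brXZ (n : nat) (p : point) (i j k l : nat) : Cx :=
  let X := pX p in let Z := pZ p in
  Cmul half (Csub (Cadd (Cadd (Cmul (mmul n Z X k j) (dlt i l))
                               (Cmul (dlt k j) (mmul n X Z i l)))
                        (Cmul (Z k j) (X i l)))
                  (Cmul (X k j) (Z i l))).
Definition brVW (n : nat) (p : point) (a j b k : nat) : Cx :=
  let V := pV p in let W := pW p in
  Cadd (Cmul (dlt a b) (Cadd (Cadd (dlt k j) (Cmul half (Cmul (W a k) (V a j))))
                             (Cmul half (Cmul (dlt k j) (dot n (V a) (W a))))))
       (Cmul half (Cmul (o a b) (Cadd (Cmul (dlt k j) (dot n (V a) (W b)))
                                      (Cmul (W b k) (V a j))))).

(* value at p of {c1, c2} for coordinate functions c1, c2 *)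
Definition br (n : nat) (p : point) (c1 c2 : coord) : Cx :=
  let X := pX p in let Z := pZ p in let V := pV p in let W := pW p in
  match c1, c2 with
  | cX i j, cX k l =>
      Cmul half (Csub (Cmul (dlt i l) (mmul n X X k j)) (Cmul (dlt k j) (mmul n X X i l)))
  | cZ i j, cZ k l =>
      Cmul half (Csub (Cmul (dlt k j) (mmul n Z Z i l)) (Cmul (dlt i l) (mmul n Z Z k j)))
  | cX i j, cZ k l => brXZ n p i j k l
  | cZ k l, cX i j => Copp (brXZ n p i j k l)
  | cX i j, cW a k => brUW n X (W a) i j k
  | cZ i j, cW a k => brUW n Z (W a) i j k
  | cW a k, cX i j => Copp (brUW n X (W a) i j k)
  | cW a k, cZ i j => Copp (brUW n Z (W a) i j k)
  | cX i j, cV a l => brUV n X (V a) i j l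
  | cZ i j, cV a l => brUV n Z (V a) i j l
  | cV a l, cX i j => Copp (brUV n X (V a) i j l)
  | cV a l, cZ i j => Copp (brUV n Z (V a) i j l)
  | cV a j, cV b l =>
      Cmul half (Cmul (o b a) (Cadd (Cmul (V b j) (V a l)) (Cmul (V a j) (V b l))))
  | cW a i, cW b k =>
      Cmul half (Cmul (o b a) (Cadd (Cmul (W b k) (W a i)) (Cmul (W a k) (W b i))))
  | cV a j, cW b k => brVW n p a j b k
  | cW b k, cV a j => Copp (brVW n p a j b k)
  end.

Definition S_mat (n : nat) (alpha : nat) (p : point) : mat :=
  mmul n (mprod_down n (IWV p) (S alpha)) (pZ p).
Definition Ham (n alpha k : nat) (p : point) : Cx :=
  Cmul (RtoC (/ INR k)) (mtr n (mpow n (S_mat n alpha p) k)).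

Definition flow (n alpha k : nat) (p : point) (t : Cx) : point :=
  let Sk := mpow n (S_mat n alpha p) k in
  let Ep := mexp n (mscale t Sk) in
  let Em := mexp n (mscale (Copp t) Sk) in
  mkPt (mmul n (pX p) Em)
       (mmul n (mmul n Ep (pZ p)) Em)
       (fun b => if Nat.leb b alpha then rowmul n (pV p b) Em else pV p b)
       (fun b => if Nat.leb b alpha then mulcol n Ep (pW p b) else pW p b).

(* Main.v *)
From Stdlib Require Import Reals List Arith Lra Lia Ring Field Setoid Morphisms FunctionalExtensionality ClassicalEpsilon.
Require Import Defs.
Import ListNotations.
Open Scope R_scope.


Lemma Cx_ext : forall a b : Cx, Re a = Re b -> Im a = Im b -> a = b.
Proof. intros [a1 a2] [b1 b2]; simpl; intros; subst; reflexivity. Qed.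

Ltac cxe := apply Cx_ext; simpl.

Lemma Cring : ring_theory C0 C1 Cadd Cmul Csub Copp (@eq Cx).
Proof.
  constructor; intros; unfold Csub; cxe; ring.
Qed.
Add Ring Cring : Cring.

Lemma C1_neq_C0 : C1 <> C0.
Proof. intro H. injection H. lra. Qed.

Lemma Cnorm2_pos : forall a, a <> C0 -> Cnorm2 a > 0.
Proof.
  intros [x y] H. unfold Cnorm2; simpl.
  destruct (Req_dec x 0); destruct (Req_dec y 0); subst.
  - exfalso; apply H; reflexivity.
  - nra. - nra. - nra.
Qed.

Lemma Cfield : field_theory C0 C1 Cadd Cmul Csub Copp Cdiv Cinv (@eq Cx).
Proof.
  constructor.
  - exact Cring.
  - exact C1_neq_C0.
  - reflexivity.
  - intros p Hp. pose proof (Cnorm2_pos p Hp). destruct p as [x y].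
    unfold Cnorm2 in *; simpl in *. unfold Cinv, Cnorm2; simpl.
    cxe; field; lra.
Qed.
Add Field Cfield : Cfield.

Lemma half_eq : half = Cinv (Cadd C1 C1).
Proof. unfold half, RtoC. cxe; unfold Cnorm2; simpl; field. Qed.

Lemma two_neq0 : Cadd C1 C1 <> C0.
Proof. intro H; injection H; lra. Qed.

Lemma half_half : Cadd half half = C1.
Proof. rewrite half_eq. field. exact two_neq0. Qed.

Lemma Cmul_half2 : forall x, Cmul half (Cadd x x) = x.
Proof. intros. rewrite half_eq. field. exact two_neq0. Qed.

Lemma csum_ext : forall m f g, (forall i, (i < m)%nat -> f i = g i) -> csum m f = csum m g.
Proof.
  induction m; intros f g H; simpl; [reflexivity|].
  rewrite (IHm f g) by (intros; apply H; lia). rewrite (H m) by lia. reflexivity.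
Qed.

Lemma csum_add : forall m f g, csum m (fun i => Cadd (f i) (g i)) = Cadd (csum m f) (csum m g).
Proof. induction m; intros; simpl; [ring| rewrite IHm; ring]. Qed.

Lemma csum_sub : forall m f g, csum m (fun i => Csub (f i) (g i)) = Csub (csum m f) (csum m g).
Proof. induction m; intros; simpl; [ring| rewrite IHm; ring]. Qed.

Lemma csum_opp : forall m f, csum m (fun i => Copp (f i)) = Copp (csum m f).
Proof. induction m; intros; simpl; [ring| rewrite IHm; ring]. Qed.

Lemma csum_scal_l : forall m c f, csum m (fun i => Cmul c (f i)) = Cmul c (csum m f).
Proof. induction m; intros; simpl; [ring| rewrite IHm; ring]. Qed.

Lemma csum_scal_r : forall m c f, csum m (fun i => Cmul (f i) c) = Cmul (csum m f) c.
Proof. induction m; intros; simpl; [ring| rewrite IHm; ring]. Qed.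

Lemma csum_zero : forall m, csum m (fun _ => C0) = C0.
Proof. induction m; simpl; [|rewrite IHm]; ring. Qed.

Lemma csum_zero' : forall m f, (forall i, (i < m)%nat -> f i = C0) -> csum m f = C0.
Proof. intros. rewrite (csum_ext m f (fun _ => C0)) by auto. apply csum_zero. Qed.

Lemma csum_swap : forall m p f,
  csum m (fun i => csum p (fun j => f i j)) = csum p (fun j => csum m (fun i => f i j)).
Proof.
  induction m; intros; simpl.
  - symmetry; apply csum_zero.
  - rewrite IHm. rewrite <- csum_add. reflexivity.
Qed.

Lemma csum_S_l : forall m f, csum (S m) f = Cadd (f O) (csum m (fun i => f (S i))).
Proof. induction m; intros; simpl in *; [ring|]. rewrite IHm. simpl. ring. Qed.

Lemma csum_plus : forall m p f, csum (m + p) f = Cadd (csum m f) (csum p (fun i => f (m + i)%nat)).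
Proof.
  intros m p; revert m; induction p; intros; simpl.
  - rewrite Nat.add_0_r; ring.
  - rewrite Nat.add_succ_r; simpl. rewrite IHp. ring.
Qed.

Lemma dlt_eq : forall i, dlt i i = C1.
Proof. intros; unfold dlt; rewrite Nat.eqb_refl; auto. Qed.
Lemma dlt_neq : forall i j, i <> j -> dlt i j = C0.
Proof. intros; unfold dlt; destruct (Nat.eqb_spec i j); [contradiction|auto]. Qed.
Lemma dlt_sym : forall i j, dlt i j = dlt j i.
Proof. intros; unfold dlt; rewrite Nat.eqb_sym; auto. Qed.

Lemma csum_delta : forall m i f, (i < m)%nat -> csum m (fun l => Cmul (dlt i l) (f l)) = f i.
Proof.
  induction m; intros; [lia|]. simpl.
  destruct (Nat.eq_dec i m).
  - subst. rewrite csum_zero'. rewrite dlt_eq; ring.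
    intros; rewrite dlt_neq by lia; ring.
  - rewrite IHm by lia. rewrite dlt_neq by lia; ring.
Qed.

Lemma csum_delta_r : forall m i f, (i < m)%nat -> csum m (fun l => Cmul (f l) (dlt l i)) = f i.
Proof.
  intros. rewrite <- (csum_delta m i f) by auto. apply csum_ext; intros.
  rewrite dlt_sym; ring.
Qed.

Lemma csum_delta_out : forall m i f, (m <= i)%nat -> csum m (fun l => Cmul (dlt i l) (f l)) = C0.
Proof. intros; apply csum_zero'; intros; rewrite dlt_neq by lia; ring. Qed.

Lemma csum_telescope : forall m f, csum m (fun a => Csub (f a) (f (S a))) = Csub (f O) (f m).
Proof. induction m; intros; simpl; [ring| rewrite IHm; ring]. Qed.

Lemma meq_refl n : Reflexive (meq n).
Proof. intros A i j _ _; reflexivity. Qed.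
Lemma meq_sym n : Symmetric (meq n).
Proof. intros A B H i j Hi Hj; symmetry; auto. Qed.
Lemma meq_trans n : Transitive (meq n).
Proof. intros A B C H1 H2 i j Hi Hj; rewrite H1; auto. Qed.
Add Parametric Relation (n : nat) : mat (meq n)
  reflexivity proved by (meq_refl n) symmetry proved by (meq_sym n)
  transitivity proved by (meq_trans n) as meq_rel.

Add Parametric Morphism n : (mmul n) with signature meq n ==> meq n ==> meq n as mmul_mor.
Proof.
  intros A A' HA B B' HB i j Hi Hj. unfold mmul. apply csum_ext; intros.
  rewrite HA, HB; auto.
Qed.
Add Parametric Morphism n : (madd) with signature meq n ==> meq n ==> meq n as madd_mor.
Proof. intros A A' HA B B' HB i j Hi Hj. unfold madd. rewrite HA, HB; auto. Qed.
Add Parametric Morphism n c : (mscale c) with signature meq n ==> meq n as mscale_mor.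
Proof. intros A A' HA i j Hi Hj. unfold mscale. rewrite HA; auto. Qed.

Definition mzero : mat := fun _ _ => C0.
Definition mneg (A : mat) : mat := fun i j => Copp (A i j).
Definition msub (A B : mat) : mat := fun i j => Csub (A i j) (B i j).
Add Parametric Morphism n : (mneg) with signature meq n ==> meq n as mneg_mor.
Proof. intros A A' HA i j Hi Hj. unfold mneg. rewrite HA; auto. Qed.
Add Parametric Morphism n : (msub) with signature meq n ==> meq n ==> meq n as msub_mor.
Proof. intros A A' HA B B' HB i j Hi Hj. unfold msub. rewrite HA, HB; auto. Qed.

Lemma mmul_assoc : forall n A B C, mmul n (mmul n A B) C = mmul n A (mmul n B C).
Proof.
  intros. extensionality i; extensionality j. unfold mmul.
  transitivity (csum n (fun l => csum n (fun m => Cmul (Cmul (A i m) (B m l)) (C l j)))).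
  { apply csum_ext; intros. rewrite csum_scal_r. reflexivity. }
  rewrite csum_swap. apply csum_ext; intros. rewrite <- csum_scal_l.
  apply csum_ext; intros. ring.
Qed.

Lemma mmul_id_l : forall n A, meq n (mmul n mId A) A.
Proof. intros n A i j Hi Hj. unfold mmul. apply (csum_delta n i (fun l => A l j) Hi). Qed.
Lemma mmul_id_r : forall n A, meq n (mmul n A mId) A.
Proof.
  intros n A i j Hi Hj. unfold mmul.
  exact (csum_delta_r n j (fun l => A i l) Hj).
Qed.

Lemma mmul_madd_l : forall n A B C, mmul n (madd A B) C = madd (mmul n A C) (mmul n B C).
Proof. intros; extensionality i; extensionality j; unfold mmul, madd. rewrite <- csum_add. apply csum_ext; intros; ring. Qed.
Lemma mmul_madd_r : forall n A B C, mmul n A (madd B C) = madd (mmul n A B) (mmul n A C).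
Proof. intros; extensionality i; extensionality j; unfold mmul, madd. rewrite <- csum_add. apply csum_ext; intros; ring. Qed.
Lemma mmul_msub_l : forall n A B C, mmul n (msub A B) C = msub (mmul n A C) (mmul n B C).
Proof. intros; extensionality i; extensionality j; unfold mmul, msub. rewrite <- csum_sub. apply csum_ext; intros; ring. Qed.
Lemma mmul_msub_r : forall n A B C, mmul n A (msub B C) = msub (mmul n A B) (mmul n A C).
Proof. intros; extensionality i; extensionality j; unfold mmul, msub. rewrite <- csum_sub. apply csum_ext; intros; ring. Qed.
Lemma mmul_mscale_l : forall n c A B, mmul n (mscale c A) B = mscale c (mmul n A B).
Proof. intros; extensionality i; extensionality j; unfold mmul, mscale. rewrite <- csum_scal_l. apply csum_ext; intros; ring. Qed.
Lemma mmul_mscale_r : forall n c A B, mmul n A (mscale c B) = mscale c (mmul n A B).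
Proof. intros; extensionality i; extensionality j; unfold mmul, mscale. rewrite <- csum_scal_l. apply csum_ext; intros; ring. Qed.
Lemma mmul_mneg_l : forall n A B, mmul n (mneg A) B = mneg (mmul n A B).
Proof. intros; extensionality i; extensionality j; unfold mmul, mneg. rewrite <- csum_opp. apply csum_ext; intros; ring. Qed.
Lemma mmul_mneg_r : forall n A B, mmul n A (mneg B) = mneg (mmul n A B).
Proof. intros; extensionality i; extensionality j; unfold mmul, mneg. rewrite <- csum_opp. apply csum_ext; intros; ring. Qed.
Lemma mmul_zero_l : forall n A, mmul n mzero A = mzero.
Proof. intros; extensionality i; extensionality j; unfold mmul, mzero. apply csum_zero'; intros; ring. Qed.
Lemma mmul_zero_r : forall n A, mmul n A mzero = mzero.
Proof. intros; extensionality i; extensionality j; unfold mmul, mzero. apply csum_zero'; intros; ring. Qed.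

Lemma mpow_comm : forall n A m, meq n (mmul n A (mpow n A m)) (mmul n (mpow n A m) A).
Proof.
  intros n A m. induction m; simpl.
  - rewrite mmul_id_l, mmul_id_r. reflexivity.
  - rewrite mmul_assoc. rewrite IHm at 1. reflexivity.
Qed.

Lemma Cnorm2_ge0 : forall a, 0 <= Cnorm2 a.
Proof. intros [x y]; unfold Cnorm2; simpl; nra. Qed.

Lemma Cmod_ge0 : forall a, 0 <= Cmod a.
Proof. intros; unfold Cmod; apply sqrt_pos. Qed.

Lemma Cmod_sq : forall a, Cmod a * Cmod a = Cnorm2 a.
Proof. intros; unfold Cmod; apply sqrt_sqrt, Cnorm2_ge0. Qed.

Lemma Cmod_mul : forall a b, Cmod (Cmul a b) = Cmod a * Cmod b.
Proof.
  intros. unfold Cmod. rewrite <- sqrt_mult by apply Cnorm2_ge0. f_equal.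
  destruct a, b; unfold Cnorm2; simpl; ring.
Qed.

Lemma Re_le_Cmod : forall a, Rabs (Re a) <= Cmod a.
Proof.
  intros [x y]; unfold Cmod, Cnorm2; simpl.
  rewrite <- sqrt_Rsqr_abs. apply sqrt_le_1_alt. unfold Rsqr; nra.
Qed.
Lemma Im_le_Cmod : forall a, Rabs (Im a) <= Cmod a.
Proof.
  intros [x y]; unfold Cmod, Cnorm2; simpl.
  rewrite <- sqrt_Rsqr_abs. apply sqrt_le_1_alt. unfold Rsqr; nra.
Qed.

Lemma Cmod_le_sum : forall a, Cmod a <= Rabs (Re a) + Rabs (Im a).
Proof.
  intros [x y]; unfold Cmod, Cnorm2; simpl.
  apply Rsqr_incr_0_var; [|pose proof (Rabs_pos x); pose proof (Rabs_pos y); lra].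
  rewrite Rsqr_sqrt by nra.
  pose proof (Rabs_pos x); pose proof (Rabs_pos y).
  pose proof (Rsqr_abs x); pose proof (Rsqr_abs y). unfold Rsqr in *. nra.
Qed.

Lemma CS_ineq : forall x y u v, x * u + y * v <= sqrt ((x*x+y*y)*(u*u+v*v)).
Proof.
  intros. destruct (Rle_dec (x*u+y*v) 0).
  - pose proof (sqrt_pos ((x*x+y*y)*(u*u+v*v))); lra.
  - rewrite <- (sqrt_square (x*u+y*v)) by lra. apply sqrt_le_1_alt.
    pose proof (Rle_0_sqr (x*v-y*u)); unfold Rsqr in *; nra.
Qed.

Lemma Cmod_triangle : forall a b, Cmod (Cadd a b) <= Cmod a + Cmod b.
Proof.
  intros. apply Rsqr_incr_0_var; [| pose proof (Cmod_ge0 a); pose proof (Cmod_ge0 b); lra].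
  unfold Rsqr. rewrite Cmod_sq.
  replace ((Cmod a + Cmod b) * (Cmod a + Cmod b)) with
    (Cmod a * Cmod a + Cmod b * Cmod b + 2 * (Cmod a * Cmod b)) by ring.
  rewrite !Cmod_sq.
  assert (Re a * Re b + Im a * Im b <= Cmod a * Cmod b).
  { unfold Cmod. rewrite <- sqrt_mult by apply Cnorm2_ge0. unfold Cnorm2. apply CS_ineq. }
  destruct a as [x y], b as [u v]; unfold Cnorm2 in *; simpl in *. nra.
Qed.

Lemma Cmod_opp : forall a, Cmod (Copp a) = Cmod a.
Proof. intros [x y]; unfold Cmod, Cnorm2; simpl; f_equal; ring. Qed.

Lemma Cmod_sub_sym : forall a b, Cmod (Csub a b) = Cmod (Csub b a).
Proof. intros. replace (Csub a b) with (Copp (Csub b a)) by ring. apply Cmod_opp. Qed.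

Lemma Cmod_C0 : Cmod C0 = 0.
Proof. unfold Cmod, Cnorm2; simpl. replace (0*0+0*0) with 0 by ring. apply sqrt_0. Qed.

Lemma Cmod_C1 : Cmod C1 = 1.
Proof. unfold Cmod, Cnorm2; simpl. replace (1*1+0*0) with 1 by ring. apply sqrt_1. Qed.

Lemma Cmod_RtoC : forall r, Cmod (RtoC r) = Rabs r.
Proof. intros; unfold Cmod, Cnorm2, RtoC; simpl. rewrite <- sqrt_Rsqr_abs. f_equal. unfold Rsqr; ring. Qed.

Lemma Cmod_eq0 : forall a, Cmod a = 0 -> a = C0.
Proof.
  intros [x y] H. unfold Cmod, Cnorm2 in H; simpl in H.
  apply sqrt_eq_0 in H; [|nra]. cxe; nra.
Qed.

Lemma Cmod_pos : forall a, a <> C0 -> 0 < Cmod a.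
Proof. intros. pose proof (Cmod_ge0 a). destruct (Req_dec (Cmod a) 0); [apply Cmod_eq0 in H1; contradiction| lra]. Qed.

Lemma Cmod_sub_tri : forall a b c, Cmod (Csub a c) <= Cmod (Csub a b) + Cmod (Csub b c).
Proof. intros. replace (Csub a c) with (Cadd (Csub a b) (Csub b c)) by ring. apply Cmod_triangle. Qed.

Lemma Cmod_inv : forall a, a <> C0 -> Cmod (Cinv a) = / Cmod a.
Proof.
  intros. pose proof (Cmod_pos a H).
  apply (Rmult_eq_reg_l (Cmod a)); [| lra]. rewrite <- Cmod_mul.
  replace (Cmul a (Cinv a)) with C1 by (field; auto). rewrite Cmod_C1. field; lra.
Qed.

Lemma Cmod_div : forall a b, b <> C0 -> Cmod (Cdiv a b) = Cmod a / Cmod b.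
Proof. intros. unfold Cdiv. rewrite Cmod_mul, Cmod_inv by auto. reflexivity. Qed.


Fixpoint rsum (m : nat) (f : nat -> R) : R :=
  match m with O => 0 | S m' => rsum m' f + f m' end.

Lemma Cmod_csum : forall m f, Cmod (csum m f) <= rsum m (fun i => Cmod (f i)).
Proof.
  induction m; intros; simpl. rewrite Cmod_C0; lra.
  eapply Rle_trans; [apply Cmod_triangle|]. specialize (IHm f). lra.
Qed.

Lemma rsum_le : forall m f g, (forall i, (i < m)%nat -> f i <= g i) -> rsum m f <= rsum m g.
Proof. induction m; intros; simpl; [lra|]. pose proof (H m ltac:(lia)). pose proof (IHm f g ltac:(intros; apply H; lia)). lra. Qed.

Lemma rsum_const : forall m c, rsum m (fun _ => c) = INR m * c.
Proof. induction m; intros; simpl; [ring|]. rewrite IHm. destruct m; simpl; ring. Qed.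

Lemma rsum_ge0 : forall m f, (forall i, 0 <= f i) -> 0 <= rsum m f.
Proof. induction m; intros; simpl; [lra|]. pose proof (IHm f H); pose proof (H m); lra. Qed.

Definition ccv (u : nat -> Cx) (l : Cx) : Prop :=
  Un_cv (fun N => Re (u N)) (Re l) /\ Un_cv (fun N => Im (u N)) (Im l).

Definition cvm (u : nat -> Cx) (l : Cx) : Prop :=
  forall eps, eps > 0 -> exists N, forall m, (m >= N)%nat -> Cmod (Csub (u m) l) < eps.

Lemma ccv_cvm : forall u l, ccv u l <-> cvm u l.
Proof.
  intros u l; split.
  - intros [H1 H2] eps Heps.
    destruct (H1 (eps/2) ltac:(lra)) as [N1 HN1].
    destruct (H2 (eps/2) ltac:(lra)) as [N2 HN2].
    exists (max N1 N2). intros m Hm.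
    eapply Rle_lt_trans; [apply Cmod_le_sum|]. simpl.
    specialize (HN1 m ltac:(lia)); specialize (HN2 m ltac:(lia)). unfold Rdist, Rminus in *.
    lra.
  - intros H; split; intros eps Heps; destruct (H eps Heps) as [N HN]; exists N; intros m Hm;
      specialize (HN m ltac:(lia)); unfold Rdist.
    + eapply Rle_lt_trans; [|apply HN]. pose proof (Re_le_Cmod (Csub (u m) l)). simpl in H0. exact H0.
    + eapply Rle_lt_trans; [|apply HN]. pose proof (Im_le_Cmod (Csub (u m) l)). simpl in H0. exact H0.
Qed.

Lemma cvm_unique : forall u l1 l2, cvm u l1 -> cvm u l2 -> l1 = l2.
Proof.
  intros u l1 l2 H1 H2.
  enough (Hz : Csub l1 l2 = C0) by (replace l1 with (Cadd (Csub l1 l2) l2) by ring; rewrite Hz; ring).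
  apply Cmod_eq0.
  pose proof (Cmod_ge0 (Csub l1 l2)).
  destruct (Req_dec (Cmod (Csub l1 l2)) 0); auto. exfalso.
  set (e := Cmod (Csub l1 l2)).
  destruct (H1 (e/2) ltac:(unfold e in *; lra)) as [N1 HN1].
  destruct (H2 (e/2) ltac:(unfold e in *; lra)) as [N2 HN2].
  specialize (HN1 (max N1 N2) ltac:(lia)); specialize (HN2 (max N1 N2) ltac:(lia)).
  pose proof (Cmod_sub_tri l1 (u (max N1 N2)) l2).
  rewrite (Cmod_sub_sym l1 (u (max N1 N2))) in H3. unfold e in *. lra.
Qed.

Lemma cvm_ext : forall u v l, (forall m, u m = v m) -> cvm u l -> cvm v l.
Proof. intros u v l He H eps Heps. destruct (H eps Heps) as [N HN]; exists N; intros; rewrite <- He; auto. Qed.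

Lemma cvm_const : forall c, cvm (fun _ => c) c.
Proof. intros c eps Heps; exists O; intros. replace (Csub c c) with C0 by ring. rewrite Cmod_C0; lra. Qed.

Lemma cvm_add : forall u v a b, cvm u a -> cvm v b -> cvm (fun m => Cadd (u m) (v m)) (Cadd a b).
Proof.
  intros u v a b Hu Hv eps Heps.
  destruct (Hu (eps/2) ltac:(lra)) as [N1 HN1]. destruct (Hv (eps/2) ltac:(lra)) as [N2 HN2].
  exists (max N1 N2); intros m Hm.
  replace (Csub (Cadd (u m) (v m)) (Cadd a b)) with (Cadd (Csub (u m) a) (Csub (v m) b)) by ring.
  eapply Rle_lt_trans; [apply Cmod_triangle|].
  specialize (HN1 m ltac:(lia)); specialize (HN2 m ltac:(lia)); lra.
Qed.

Lemma cvm_scal : forall u a c, cvm u a -> cvm (fun m => Cmul c (u m)) (Cmul c a).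
Proof.
  intros u a c Hu eps Heps.
  destruct (Hu (eps / (Cmod c + 1))) as [N HN].
  { pose proof (Cmod_ge0 c). apply Rdiv_lt_0_compat; lra. }
  exists N; intros m Hm.
  replace (Csub (Cmul c (u m)) (Cmul c a)) with (Cmul c (Csub (u m) a)) by ring.
  rewrite Cmod_mul. specialize (HN m Hm). pose proof (Cmod_ge0 c).
  pose proof (Cmod_ge0 (Csub (u m) a)).
  apply Rle_lt_trans with ((Cmod c + 1) * Cmod (Csub (u m) a)); [nra|].
  apply (Rmult_lt_compat_l (Cmod c + 1)) in HN; [|lra].
  replace ((Cmod c + 1) * (eps / (Cmod c + 1))) with eps in HN by (field; lra). lra.
Qed.

Lemma cvm_opp : forall u a, cvm u a -> cvm (fun m => Copp (u m)) (Copp a).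
Proof.
  intros. apply (cvm_ext (fun m => Cmul (Copp C1) (u m))); [intros; ring|].
  replace (Copp a) with (Cmul (Copp C1) a) by ring. apply cvm_scal; auto.
Qed.

Lemma cvm_sub : forall u v a b, cvm u a -> cvm v b -> cvm (fun m => Csub (u m) (v m)) (Csub a b).
Proof. intros. unfold Csub. apply cvm_add; auto. apply cvm_opp; auto. Qed.

Lemma cvm_csum : forall p (u : nat -> nat -> Cx) (a : nat -> Cx),
  (forall i, (i < p)%nat -> cvm (u i) (a i)) ->
  cvm (fun m => csum p (fun i => u i m)) (csum p a).
Proof.
  induction p; intros; simpl.
  - apply cvm_const.
  - apply cvm_add; auto.
Qed.

Lemma cvm_le : forall u l M, cvm u l -> (forall m, Cmod (u m) <= M) -> Cmod l <= M.
Proof.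
  intros u l M H HM. apply Rnot_lt_le; intro Hlt.
  destruct (H (Cmod l - M) ltac:(lra)) as [N HN].
  specialize (HN N (le_n _)). specialize (HM N).
  pose proof (Cmod_triangle (u N) (Csub l (u N))).
  replace (Cadd (u N) (Csub l (u N))) with l in H0 by ring.
  rewrite Cmod_sub_sym in HN. lra.
Qed.

Lemma cvm_shift : forall u l, cvm u l -> cvm (fun m => u (S m)) l.
Proof. intros u l H eps He; destruct (H eps He) as [N HN]; exists N; intros; apply HN; lia. Qed.

Lemma cvm_unshift : forall u l, cvm (fun m => u (S m)) l -> cvm u l.
Proof. intros u l H eps He; destruct (H eps He) as [N HN]; exists (S N); intros.
  destruct m; [lia|]. apply HN; lia. Qed.

Lemma Re_csum : forall m f, Re (csum m f) = rsum m (fun i => Re (f i)).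
Proof. induction m; intros; simpl; [auto| rewrite IHm; auto]. Qed.
Lemma Im_csum : forall m f, Im (csum m f) = rsum m (fun i => Im (f i)).
Proof. induction m; intros; simpl; [auto| rewrite IHm; auto]. Qed.

Lemma rsum_plus : forall m p f, rsum (m + p) f = rsum m f + rsum p (fun i => f (m + i)%nat).
Proof.
  intros m p; revert m; induction p; intros; simpl.
  - rewrite Nat.add_0_r; ring.
  - rewrite Nat.add_succ_r; simpl. rewrite IHp. ring.
Qed.

Lemma real_dom_cauchy : forall (u b : nat -> R),
  (forall m, Rabs (u m) <= b m) -> (exists L, Un_cv (fun N => rsum N b) L) ->
  exists l, Un_cv (fun N => rsum N u) l.
Proof.
  intros u b Hub [L HL].
  assert (Hc : Cauchy_crit (fun N => rsum N b)) by (apply CV_Cauchy; exists L; exact HL).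
  assert (Hcu : Cauchy_crit (fun N => rsum N u)).
  { intros eps Heps. destruct (Hc eps Heps) as [N HN]. exists N. intros m p Hm Hp.
    unfold Rdist in *.
    assert (key : forall a c, (a >= N)%nat -> (c >= N)%nat -> (a <= c)%nat ->
               Rabs (rsum c u - rsum a u) < eps).
    { intros a c Ha Hc' Hac. replace c with (a + (c - a))%nat by lia.
      rewrite rsum_plus. replace (rsum a u + rsum (c - a) (fun i => u (a + i)%nat) - rsum a u)
        with (rsum (c - a) (fun i => u (a + i)%nat)) by ring.
      specialize (HN (a + (c - a))%nat a ltac:(lia) Ha). rewrite rsum_plus in HN.
      replace (rsum a b + rsum (c - a) (fun i => b (a + i)%nat) - rsum a b)
        with (rsum (c - a) (fun i => b (a + i)%nat)) in HN by ring.
      eapply Rle_lt_trans; [|apply HN].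
      clear HN. generalize (c - a)%nat as k. induction k; simpl.
      - rewrite !Rabs_R0; lra.
      - eapply Rle_trans; [apply Rabs_triang|].
        pose proof (Hub (a + k)%nat).
        assert (0 <= rsum k (fun i => b (a + i)%nat)).
        { apply rsum_ge0. intros; eapply Rle_trans; [apply Rabs_pos|apply Hub]. }
        pose proof (Rabs_pos (b (a+k)%nat)).
        assert (Rabs (b (a + k)%nat) = b (a+k)%nat) by (apply Rabs_right; eapply Rle_ge, Rle_trans; [apply Rabs_pos| apply Hub]).
        rewrite (Rabs_right (rsum k (fun i => b (a + i)%nat) + b (a + k)%nat)) by (pose proof (Rabs_pos (u (a+k)%nat)); lra).
        rewrite (Rabs_right (rsum k (fun i => b (a + i)%nat))) in IHk by lra. lra. }
    destruct (le_lt_dec m p).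
    - rewrite Rabs_minus_sym. apply key; lia.
    - apply key; lia. }
  destruct (R_complete _ Hcu) as [l Hl]. exists l; exact Hl.
Qed.

Lemma dom_cv : forall (u : nat -> Cx) (b : nat -> R),
  (forall m, Cmod (u m) <= b m) -> (exists L, Un_cv (fun N => rsum N b) L) ->
  exists l, cvm (fun N => csum N u) l.
Proof.
  intros u b Hub HL.
  destruct (real_dom_cauchy (fun m => Re (u m)) b) as [lr Hr]; auto.
  { intros; eapply Rle_trans; [apply Re_le_Cmod|auto]. }
  destruct (real_dom_cauchy (fun m => Im (u m)) b) as [li Hi]; auto.
  { intros; eapply Rle_trans; [apply Im_le_Cmod|auto]. }
  exists (mkC lr li). apply ccv_cvm. split; simpl.
  - intros e He; destruct (Hr e He) as [N HN]; exists N; intros; rewrite Re_csum; auto.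
  - intros e He; destruct (Hi e He) as [N HN]; exists N; intros; rewrite Im_csum; auto.
Qed.

Lemma exp_series_cv : forall x, exists L, Un_cv (fun N => rsum N (fun m => x ^ m / INR (fact m))) L.
Proof.
  intros x. destruct (exist_exp x) as [l Hl]. exists l. unfold exp_in, infinite_sum in Hl.
  intros eps He. destruct (Hl eps He) as [N HN]. exists (S N). intros m Hm.
  destruct m; [lia|].
  assert (rsum (S m) (fun m0 => x ^ m0 / INR (fact m0)) = sum_f_R0 (fun i => / INR (fact i) * x ^ i) m).
  { clear. induction m; [simpl; unfold Rdiv; ring|].
    change (rsum (S (S m)) (fun m0 => x ^ m0 / INR (fact m0))) with
      (rsum (S m) (fun m0 => x ^ m0 / INR (fact m0)) + x ^ (S m) / INR (fact (S m))).
    rewrite IHm. change (sum_f_R0 (fun i => / INR (fact i) * x ^ i) (S m)) with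
      (sum_f_R0 (fun i => / INR (fact i) * x ^ i) m + / INR (fact (S m)) * x ^ (S m)).
    unfold Rdiv; ring. }
  rewrite H. apply HN. lia.
Qed.

Lemma rsum_growing_le : forall (f : nat -> R) L, (forall i, 0 <= f i) ->
  Un_cv (fun N => rsum N f) L -> forall N, rsum N f <= L.
Proof.
  intros. apply (growing_ineq (fun N => rsum N f)); auto.
  intro m; simpl. specialize (H m); lra.
Qed.

Lemma Un_cv_scal : forall u l K, Un_cv u l -> Un_cv (fun N => K * u N) (K * l).
Proof.
  intros. apply (CV_mult (fun _ => K) u K l); auto.
  intros e He; exists O; intros; unfold Rdist; rewrite Rminus_diag, Rabs_R0; lra.
Qed.

Lemma rsum_scal : forall m K f, rsum m (fun i => K * f i) = K * rsum m f.
Proof. induction m; intros; simpl; [ring| rewrite IHm; ring]. Qed.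

Definition pser (c : nat -> Cx) (s : Cx) (N : nat) : Cx := csum N (fun m => Cmul (c m) (Cpow s m)).
Definition ps_bound (c : nat -> Cx) (K B : R) : Prop :=
  0 <= B /\ forall m, Cmod (c m) <= K * B ^ m / INR (fact m).
Definition psum (c : nat -> Cx) (s : Cx) : Cx := epsilon (inhabits C0) (fun l => cvm (pser c s) l).

Lemma Cmod_pow : forall s m, Cmod (Cpow s m) = Cmod s ^ m.
Proof. induction m; simpl; [apply Cmod_C1| rewrite Cmod_mul, IHm; auto]. Qed.

Lemma ps_K_ge0 : forall c K B, ps_bound c K B -> 0 <= K.
Proof. intros c K B [_ H]. specialize (H O). simpl in H. pose proof (Cmod_ge0 (c O)). lra. Qed.

Lemma ps_cv : forall c K B s, ps_bound c K B -> cvm (pser c s) (psum c s).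
Proof.
  intros c K B s Hb.
  assert (Hex : exists l, cvm (pser c s) l).
  { apply (dom_cv _ (fun m => K * ((B * Cmod s) ^ m / INR (fact m)))).
    - intros m. rewrite Cmod_mul, Cmod_pow. destruct Hb as [HB Hc]. specialize (Hc m).
      rewrite Rpow_mult_distr. pose proof (pow_le (Cmod s) m (Cmod_ge0 s)).
      pose proof (INR_fact_lt_0 m).
      apply Rle_trans with (K * B ^ m / INR (fact m) * Cmod s ^ m).
      + apply Rmult_le_compat_r; auto.
      + right; field; lra.
    - destruct (exp_series_cv (B * Cmod s)) as [L HL]. exists (K * L).
      eapply (Un_cv_ext).
      2: apply Un_cv_scal, HL.
      intros N; simpl. rewrite rsum_scal. reflexivity. }
  unfold psum. apply epsilon_spec. exact Hex.
Qed.

Fixpoint dpow (t : Cx) (m : nat) : Cx :=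
  match m with O => C0 | S m' => Cadd (Cpow t m') (Cmul t (dpow t m')) end.

Lemma RtoC_add : forall a b, RtoC (a + b) = Cadd (RtoC a) (RtoC b).
Proof. intros; unfold RtoC; cxe; ring. Qed.
Lemma RtoC_mul : forall a b, RtoC (a * b) = Cmul (RtoC a) (RtoC b).
Proof. intros; unfold RtoC; cxe; ring. Qed.
Lemma RtoC_1 : RtoC 1 = C1.
Proof. reflexivity. Qed.
Lemma RtoC_0 : RtoC 0 = C0.
Proof. reflexivity. Qed.

Lemma dpow_S : forall t m, dpow t (S m) = Cmul (RtoC (INR (S m))) (Cpow t m).
Proof.
  intros t m; induction m.
  - simpl. unfold RtoC; cxe; ring.
  - change (dpow t (S (S m))) with (Cadd (Cpow t (S m)) (Cmul t (dpow t (S m)))).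
    rewrite IHm. rewrite (S_INR (S m)). rewrite RtoC_add, RtoC_1. simpl Cpow. ring.
Qed.

Definition dc (c : nat -> Cx) (m : nat) : Cx := Cmul (RtoC (INR (S m))) (c (S m)).

Lemma ps_bound_dc : forall c K B, ps_bound c K B -> ps_bound (dc c) (K * B) B.
Proof.
  intros c K B [HB Hc]. split; auto. intros m. unfold dc.
  rewrite Cmod_mul, Cmod_RtoC. rewrite Rabs_right by (apply Rle_ge, pos_INR).
  specialize (Hc (S m)). rewrite fact_simpl, mult_INR in Hc. simpl pow in Hc.
  pose proof (INR_fact_lt_0 m). pose proof (lt_0_INR (S m) ltac:(lia)).
  apply Rle_trans with (INR (S m) * (K * (B * B ^ m) / (INR (S m) * INR (fact m)))).
  - apply Rmult_le_compat_l; auto. apply pos_INR.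
  - right. field. lra.
Qed.

Lemma INR_le_pow2 : forall m, INR m <= 2 ^ m.
Proof.
  induction m; [simpl; lra|]. rewrite S_INR. simpl pow.
  assert (1 <= 2 ^ m) by (apply pow_R1_Rle; lra). lra.
Qed.

Lemma INR_sq_le_pow4 : forall m, INR m * INR m <= 4 ^ m.
Proof.
  intros. replace 4 with (2 * 2) by ring. rewrite Rpow_mult_distr.
  pose proof (INR_le_pow2 m). pose proof (pos_INR m). nra.
Qed.

Lemma dpow_bound : forall t rho m, 1 <= rho -> Cmod t <= rho -> Cmod (dpow t m) <= INR m * rho ^ m.
Proof.
  intros t rho m H1 Ht. destruct m.
  - simpl. rewrite Cmod_C0; lra.
  - rewrite dpow_S, Cmod_mul, Cmod_RtoC, Cmod_pow. rewrite Rabs_right by (apply Rle_ge, pos_INR).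
    apply Rmult_le_compat_l; [apply pos_INR|]. simpl.
    assert (Cmod t ^ m <= rho ^ m) by (apply pow_incr; split; [apply Cmod_ge0|auto]).
    assert (0 <= rho ^ m) by (apply pow_le; lra). nra.
Qed.

Definition Dterm (t h : Cx) (m : nat) : Cx :=
  Csub (Csub (Cpow (Cadd t h) m) (Cpow t m)) (Cmul h (dpow t m)).

Lemma Dterm_S : forall t h m, Dterm t h (S m) = Cadd (Cmul (Cadd t h) (Dterm t h m)) (Cmul (Cmul h h) (dpow t m)).
Proof. intros; unfold Dterm; simpl; ring. Qed.

Lemma Dterm_bound : forall t h m, Cmod h <= 1 ->
  Cmod (Dterm t h m) <= Cmod h * Cmod h * (INR m * INR m) * (Cmod t + 1) ^ m.
Proof.
  intros t h m Hh. set (rho := Cmod t + 1).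
  assert (Hr1 : 1 <= rho) by (unfold rho; pose proof (Cmod_ge0 t); lra).
  induction m.
  - unfold Dterm; simpl. replace (Csub (Csub C1 C1) (Cmul h C0)) with C0 by ring. rewrite Cmod_C0.
    simpl; lra.
  - rewrite Dterm_S. eapply Rle_trans; [apply Cmod_triangle|]. rewrite !Cmod_mul.
    assert (Ht : Cmod (Cadd t h) <= rho) by (unfold rho; eapply Rle_trans; [apply Cmod_triangle|lra]).
    pose proof (dpow_bound t rho m Hr1 ltac:(unfold rho; lra)).
    pose proof (Cmod_ge0 h). pose proof (Cmod_ge0 (Dterm t h m)).
    pose proof (Cmod_ge0 (dpow t m)). pose proof (Cmod_ge0 (Cadd t h)).
    assert (Hp : 0 <= rho ^ m) by (apply pow_le; lra).
    pose proof (pos_INR m). rewrite S_INR. simpl pow.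
    apply Rle_trans with (rho * (Cmod h * Cmod h * (INR m * INR m) * rho ^ m) + Cmod h * Cmod h * (INR m * rho ^ m)).
    + apply Rplus_le_compat.
      * apply Rmult_le_compat; auto.
      * apply Rmult_le_compat_l; auto. nra.
    + assert (0 <= Cmod h * Cmod h) by nra.
      assert (0 <= Cmod h * Cmod h * rho ^ m) by nra.
      assert (INR m * rho ^ m <= INR m * (rho * rho ^ m)) by nra.
      nra.
Qed.


Lemma pser_dc : forall c t N, csum (S N) (fun m => Cmul (c m) (dpow t m)) = pser (dc c) t N.
Proof.
  intros. rewrite csum_S_l. unfold pser.
  replace (Cmul (c O) (dpow t O)) with C0 by (simpl; ring).
  transitivity (csum N (fun i => Cmul (c (S i)) (dpow t (S i)))); [ring|].
  apply csum_ext; intros. rewrite dpow_S. unfold dc. ring.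
Qed.

Lemma Dsum_eq : forall c t h N,
  csum (S N) (fun m => Cmul (c m) (Dterm t h m)) =
  Csub (Csub (pser c (Cadd t h) (S N)) (pser c t (S N))) (Cmul h (pser (dc c) t N)).
Proof.
  intros. rewrite <- pser_dc. unfold pser, Dterm.
  rewrite <- csum_scal_l, <- !csum_sub. apply csum_ext; intros. ring.
Qed.

Lemma ps_deriv : forall c K B t, ps_bound c K B -> has_cderiv (psum c) t (psum (dc c) t).
Proof.
  intros c K B t Hb.
  pose proof (ps_K_ge0 c K B Hb) as HK.
  destruct Hb as [HB Hc] eqn:Hbeq.
  set (rho := Cmod t + 1).
  assert (Hrho : 1 <= rho) by (unfold rho; pose proof (Cmod_ge0 t); lra).
  destruct (exp_series_cv (4 * B * rho)) as [L HL].
  assert (Hnn : forall i, 0 <= (4 * B * rho) ^ i / INR (fact i)).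
  { intros; apply Rmult_le_pos; [apply pow_le; nra| left; apply Rinv_0_lt_compat, INR_fact_lt_0]. }
  assert (HLpos : 0 <= L).
  { eapply Rle_trans; [|apply (rsum_growing_le _ L Hnn HL O)]. simpl; lra. }
  assert (Hbd : forall h, Cmod h <= 1 ->
     Cmod (Csub (Csub (psum c (Cadd t h)) (psum c t)) (Cmul h (psum (dc c) t))) <= Cmod h * Cmod h * (K * L)).
  { intros h Hh.
    eapply (cvm_le (fun N => csum (S N) (fun m => Cmul (c m) (Dterm t h m)))).
    - eapply cvm_ext. intros m; symmetry; apply Dsum_eq.
      apply cvm_sub; [apply cvm_sub|].
      + apply (cvm_shift (pser c (Cadd t h))). eapply ps_cv; eauto.
      + apply (cvm_shift (pser c t)). eapply ps_cv; eauto.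
      + apply cvm_scal. eapply ps_cv. apply ps_bound_dc. exact Hb.
    - intros N. eapply Rle_trans; [apply Cmod_csum|].
      apply Rle_trans with (rsum (S N) (fun m => Cmod h * Cmod h * K * ((4 * B * rho) ^ m / INR (fact m)))).
      + apply rsum_le. intros m _. rewrite Cmod_mul.
        pose proof (Hc m). pose proof (Dterm_bound t h m Hh). fold rho in H0.
        pose proof (INR_sq_le_pow4 m). pose proof (Cmod_ge0 (c m)). pose proof (Cmod_ge0 (Dterm t h m)).
        pose proof (Cmod_ge0 h).
        assert (Hrm : 0 <= rho ^ m) by (apply pow_le; lra).
        assert (HBm : 0 <= B ^ m) by (apply pow_le; lra).
        pose proof (INR_fact_lt_0 m).
        apply Rle_trans with ((K * B ^ m / INR (fact m)) * (Cmod h * Cmod h * 4 ^ m * rho ^ m)).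
        * apply Rmult_le_compat; auto. eapply Rle_trans; [apply H0|].
          apply Rmult_le_compat_r; auto. apply Rmult_le_compat_l; auto. nra.
        * right. rewrite !Rpow_mult_distr. field. lra.
      + rewrite rsum_scal. pose proof (rsum_growing_le _ L Hnn HL (S N)).
        pose proof (Cmod_ge0 h). assert (0 <= Cmod h * Cmod h * K) by (apply Rmult_le_pos; nra).
        replace (Cmod h * Cmod h * (K * L)) with (Cmod h * Cmod h * K * L) by ring.
        apply Rmult_le_compat_l; auto. }
  intros eps Heps.
  exists (Rmin 1 (eps / (K * L + 1))). split.
  { apply Rmin_pos; [lra| apply Rdiv_lt_0_compat; nra]. }
  intros h Hh0 Hhd.
  assert (Hh1 : Cmod h <= 1) by (pose proof (Rmin_l 1 (eps / (K * L + 1))); lra).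
  assert (Hh2 : Cmod h < eps / (K * L + 1)) by (pose proof (Rmin_r 1 (eps / (K * L + 1))); lra).
  pose proof (Cmod_pos h Hh0) as Hhp.
  replace (Csub (Cdiv (Csub (psum c (Cadd t h)) (psum c t)) h) (psum (dc c) t)) with
    (Cdiv (Csub (Csub (psum c (Cadd t h)) (psum c t)) (Cmul h (psum (dc c) t))) h) by (field; auto).
  rewrite Cmod_div by auto.
  specialize (Hbd h Hh1).
  apply Rle_lt_trans with (Cmod h * (K * L)).
  - apply (Rmult_le_reg_r (Cmod h)); auto. unfold Rdiv. rewrite Rmult_assoc, Rinv_l by lra. nra.
  - assert (0 <= K * L) by nra.
    apply Rle_lt_trans with (eps / (K * L + 1) * (K * L)); [apply Rmult_le_compat_r; lra|].
    apply (Rmult_lt_reg_r (K * L + 1)); [lra|]. field_simplify; [|lra]. nra.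
Qed.

Definition dlin (f : Cx -> Cx) (t L : Cx) : Prop :=
  forall eps, eps > 0 -> exists delta, delta > 0 /\
    forall h, h <> C0 -> Cmod h < delta ->
      Cmod (Csub (Csub (f (Cadd t h)) (f t)) (Cmul h L)) <= eps * Cmod h.

Lemma dlin_cderiv : forall f t L, has_cderiv f t L <-> dlin f t L.
Proof.
  intros f t L; split.
  - intros H eps He. destruct (H eps He) as [d [Hd Hh]]. exists d; split; auto.
    intros h Hh0 Hhd. specialize (Hh h Hh0 Hhd). pose proof (Cmod_pos h Hh0).
    replace (Csub (Csub (f (Cadd t h)) (f t)) (Cmul h L)) with
      (Cmul h (Csub (Cdiv (Csub (f (Cadd t h)) (f t)) h) L)) by (field; auto).
    rewrite Cmod_mul. nra.
  - intros H eps He. destruct (H (eps/2) ltac:(lra)) as [d [Hd Hh]]. exists d; split; auto.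
    intros h Hh0 Hhd. specialize (Hh h Hh0 Hhd). pose proof (Cmod_pos h Hh0).
    replace (Csub (Cdiv (Csub (f (Cadd t h)) (f t)) h) L) with
      (Cdiv (Csub (Csub (f (Cadd t h)) (f t)) (Cmul h L)) h) by (field; auto).
    rewrite Cmod_div by auto. apply (Rmult_lt_reg_r (Cmod h)); auto.
    unfold Rdiv; rewrite Rmult_assoc, Rinv_l by lra. nra.
Qed.

Lemma cderiv_ext : forall f g t L, (forall z, f z = g z) -> has_cderiv f t L -> has_cderiv g t L.
Proof. intros. replace g with f; auto. extensionality z; auto. Qed.

Lemma cderiv_const : forall c t, has_cderiv (fun _ => c) t C0.
Proof.
  intros. apply dlin_cderiv. intros eps He. exists 1; split; [lra|]. intros.
  replace (Csub (Csub c c) (Cmul h C0)) with C0 by ring. rewrite Cmod_C0.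
  pose proof (Cmod_ge0 h); nra.
Qed.

Lemma cderiv_id : forall t, has_cderiv (fun z => z) t C1.
Proof.
  intros. apply dlin_cderiv. intros eps He. exists 1; split; [lra|]. intros.
  replace (Csub (Csub (Cadd t h) t) (Cmul h C1)) with C0 by ring. rewrite Cmod_C0.
  pose proof (Cmod_ge0 h); nra.
Qed.

Lemma cderiv_add : forall f g t L M, has_cderiv f t L -> has_cderiv g t M ->
  has_cderiv (fun z => Cadd (f z) (g z)) t (Cadd L M).
Proof.
  intros f g t L M Hf Hg. apply dlin_cderiv in Hf, Hg. apply dlin_cderiv.
  intros eps He. destruct (Hf (eps/2) ltac:(lra)) as [d1 [Hd1 H1]].
  destruct (Hg (eps/2) ltac:(lra)) as [d2 [Hd2 H2]].
  exists (Rmin d1 d2); split; [apply Rmin_pos; auto|]. intros h Hh0 Hhd.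
  specialize (H1 h Hh0 ltac:(pose proof (Rmin_l d1 d2); lra)).
  specialize (H2 h Hh0 ltac:(pose proof (Rmin_r d1 d2); lra)).
  replace (Csub (Csub (Cadd (f (Cadd t h)) (g (Cadd t h))) (Cadd (f t) (g t))) (Cmul h (Cadd L M)))
    with (Cadd (Csub (Csub (f (Cadd t h)) (f t)) (Cmul h L)) (Csub (Csub (g (Cadd t h)) (g t)) (Cmul h M))) by ring.
  eapply Rle_trans; [apply Cmod_triangle|]. lra.
Qed.

Lemma cderiv_scal : forall f c t L, has_cderiv f t L -> has_cderiv (fun z => Cmul c (f z)) t (Cmul c L).
Proof.
  intros f c t L Hf. apply dlin_cderiv in Hf. apply dlin_cderiv.
  intros eps He. destruct (Hf (eps/(Cmod c + 1))) as [d [Hd H1]].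
  { pose proof (Cmod_ge0 c); apply Rdiv_lt_0_compat; lra. }
  exists d; split; auto. intros h Hh0 Hhd. specialize (H1 h Hh0 Hhd).
  replace (Csub (Csub (Cmul c (f (Cadd t h))) (Cmul c (f t))) (Cmul h (Cmul c L)))
    with (Cmul c (Csub (Csub (f (Cadd t h)) (f t)) (Cmul h L))) by ring.
  rewrite Cmod_mul. pose proof (Cmod_ge0 c). pose proof (Cmod_ge0 h).
  apply Rle_trans with (Cmod c * (eps / (Cmod c + 1) * Cmod h)); [apply Rmult_le_compat_l; auto|].
  apply Rle_trans with ((Cmod c + 1) * (eps / (Cmod c + 1) * Cmod h)).
  - apply Rmult_le_compat_r; [|lra]. apply Rmult_le_pos; [|auto]. left; apply Rdiv_lt_0_compat; lra.
  - right; field; lra.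
Qed.

Lemma cderiv_opp : forall f t L, has_cderiv f t L -> has_cderiv (fun z => Copp (f z)) t (Copp L).
Proof.
  intros. eapply cderiv_ext; [|replace (Copp L) with (Cmul (Copp C1) L) by ring; apply cderiv_scal; eauto].
  intros; simpl; ring.
Qed.

Lemma cderiv_sub : forall f g t L M, has_cderiv f t L -> has_cderiv g t M ->
  has_cderiv (fun z => Csub (f z) (g z)) t (Csub L M).
Proof. intros. unfold Csub. apply cderiv_add; auto. apply cderiv_opp; auto. Qed.

Lemma cderiv_csum : forall m (f : nat -> Cx -> Cx) (L : nat -> Cx) t,
  (forall i, (i < m)%nat -> has_cderiv (f i) t (L i)) ->
  has_cderiv (fun z => csum m (fun i => f i z)) t (csum m L).
Proof.
  induction m; intros; simpl.
  - apply cderiv_const.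
  - apply cderiv_add; auto.
Qed.

Lemma cderiv_cont : forall f t L, has_cderiv f t L ->
  exists d, d > 0 /\ forall h, Cmod h < d -> Cmod (Csub (f (Cadd t h)) (f t)) <= (Cmod L + 1) * Cmod h.
Proof.
  intros f t L Hf. apply dlin_cderiv in Hf. destruct (Hf 1 ltac:(lra)) as [d [Hd H]].
  exists d; split; auto. intros h Hhd.
  destruct (Req_dec (Cmod h) 0) as [H0|H0].
  - apply Cmod_eq0 in H0. subst. replace (Csub (f (Cadd t C0)) (f t)) with C0
      by (replace (Cadd t C0) with t by ring; ring). rewrite !Cmod_C0; lra.
  - assert (h <> C0) by (intro; subst; apply H0, Cmod_C0).
    specialize (H h H1 Hhd).
    replace (Csub (f (Cadd t h)) (f t)) with (Cadd (Csub (Csub (f (Cadd t h)) (f t)) (Cmul h L)) (Cmul h L)) by ring.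
    eapply Rle_trans; [apply Cmod_triangle|]. rewrite Cmod_mul. nra.
Qed.

Lemma cderiv_mul : forall f g t L M, has_cderiv f t L -> has_cderiv g t M ->
  has_cderiv (fun z => Cmul (f z) (g z)) t (Cadd (Cmul L (g t)) (Cmul (f t) M)).
Proof.
  intros f g t L M Hf Hg.
  destruct (cderiv_cont g t M Hg) as [d0 [Hd0 Hc]].
  apply dlin_cderiv in Hf, Hg. apply dlin_cderiv.
  intros eps He.
  set (G := Cmod (g t) + (Cmod M + 1) * 1).
  assert (HG : 0 <= G) by (unfold G; pose proof (Cmod_ge0 (g t)); pose proof (Cmod_ge0 M); nra).
  set (e1 := eps / 3 / (G + 1)).
  set (e2 := eps / 3 / (Cmod (f t) + 1)).
  assert (He1 : e1 > 0) by (unfold e1; apply Rdiv_lt_0_compat; lra).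
  assert (He2 : e2 > 0) by (unfold e2; pose proof (Cmod_ge0 (f t)); apply Rdiv_lt_0_compat; lra).
  destruct (Hf e1 He1) as [d1 [Hd1 H1]]. destruct (Hg e2 He2) as [d2 [Hd2 H2]].
  set (d3 := eps / 3 / ((Cmod L + 1) * (Cmod M + 1))).
  assert (Hd3 : d3 > 0) by (unfold d3; pose proof (Cmod_ge0 L); pose proof (Cmod_ge0 M);
     apply Rdiv_lt_0_compat; [lra| nra]).
  exists (Rmin (Rmin d1 d2) (Rmin (Rmin d0 1) d3)). split.
  { repeat apply Rmin_pos; lra. }
  intros h Hh0 Hhd.
  pose proof (Rmin_l (Rmin d1 d2) (Rmin (Rmin d0 1) d3)). pose proof (Rmin_r (Rmin d1 d2) (Rmin (Rmin d0 1) d3)).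
  pose proof (Rmin_l d1 d2). pose proof (Rmin_r d1 d2). pose proof (Rmin_l (Rmin d0 1) d3).
  pose proof (Rmin_r (Rmin d0 1) d3). pose proof (Rmin_l d0 1). pose proof (Rmin_r d0 1).
  specialize (H1 h Hh0 ltac:(lra)). specialize (H2 h Hh0 ltac:(lra)). specialize (Hc h ltac:(lra)).
  set (a := Csub (Csub (f (Cadd t h)) (f t)) (Cmul h L)) in *.
  set (b := Csub (Csub (g (Cadd t h)) (g t)) (Cmul h M)) in *.
  set (dg := Csub (g (Cadd t h)) (g t)) in *.
  replace (Csub (Csub (Cmul (f (Cadd t h)) (g (Cadd t h))) (Cmul (f t) (g t))) (Cmul h (Cadd (Cmul L (g t)) (Cmul (f t) M))))
    with (Cadd (Cadd (Cmul a (g (Cadd t h))) (Cmul (f t) b)) (Cmul (Cmul h L) dg))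
    by (unfold a, b, dg; ring).
  pose proof (Cmod_ge0 h). pose proof (Cmod_ge0 a). pose proof (Cmod_ge0 b). pose proof (Cmod_ge0 dg).
  pose proof (Cmod_ge0 L). pose proof (Cmod_ge0 M). pose proof (Cmod_ge0 (f t)).
  assert (Hgh : Cmod (g (Cadd t h)) <= G).
  { replace (g (Cadd t h)) with (Cadd (g t) dg) by (unfold dg; ring).
    eapply Rle_trans; [apply Cmod_triangle|]. unfold G.
    assert (Cmod dg <= (Cmod M + 1) * 1) by (eapply Rle_trans; [apply Hc| apply Rmult_le_compat_l; lra]).
    lra. }
  eapply Rle_trans; [apply Cmod_triangle|]. eapply Rle_trans; [apply Rplus_le_compat_r, Cmod_triangle|].
  rewrite !Cmod_mul.
  assert (T1 : Cmod a * Cmod (g (Cadd t h)) <= eps / 3 * Cmod h).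
  { apply Rle_trans with (e1 * Cmod h * G); [apply Rmult_le_compat; auto; apply Cmod_ge0|].
    unfold e1. apply Rle_trans with (eps / 3 / (G + 1) * (G + 1) * Cmod h).
    - assert (0 <= eps / 3 / (G + 1)) by (left; apply Rdiv_lt_0_compat; lra). nra.
    - right; field; lra. }
  assert (T2 : Cmod (f t) * Cmod b <= eps / 3 * Cmod h).
  { apply Rle_trans with (Cmod (f t) * (e2 * Cmod h)); [apply Rmult_le_compat_l; auto|].
    unfold e2. apply Rle_trans with (eps / 3 / (Cmod (f t) + 1) * (Cmod (f t) + 1) * Cmod h).
    - assert (0 <= eps / 3 / (Cmod (f t) + 1)) by (left; apply Rdiv_lt_0_compat; lra). nra.
    - right; field; lra. }
  assert (T3 : Cmod h * Cmod L * Cmod dg <= eps / 3 * Cmod h).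
  { apply Rle_trans with (Cmod h * Cmod L * ((Cmod M + 1) * Cmod h)); [apply Rmult_le_compat_l; auto; nra|].
    assert (Cmod h <= d3) by lra.
    apply Rle_trans with (Cmod h * ((Cmod L + 1) * (Cmod M + 1) * d3)).
    { replace (Cmod h * Cmod L * ((Cmod M + 1) * Cmod h)) with (Cmod h * (Cmod L * (Cmod M + 1) * Cmod h)) by ring.
      apply Rmult_le_compat_l; [lra|]. apply Rmult_le_compat; try nra. }
    unfold d3. right. field. nra. }
  lra.
Qed.

Lemma cderiv_neg_arg : forall f t L, has_cderiv f (Copp t) L -> has_cderiv (fun s => f (Copp s)) t (Copp L).
Proof.
  intros f t L Hf. apply dlin_cderiv in Hf. apply dlin_cderiv.
  intros eps He. destruct (Hf eps He) as [d [Hd H]]. exists d; split; auto.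
  intros h Hh0 Hhd. specialize (H (Copp h)).
  rewrite Cmod_opp in H. replace (Copp (Cadd t h)) with (Cadd (Copp t) (Copp h)) by ring.
  replace (Csub (Csub (f (Cadd (Copp t) (Copp h))) (f (Copp t))) (Cmul h (Copp L)))
    with (Csub (Csub (f (Cadd (Copp t) (Copp h))) (f (Copp t))) (Cmul (Copp h) L)) by ring.
  apply H; auto. intro Hc. apply Hh0. replace h with (Copp (Copp h)) by ring. rewrite Hc. ring.
Qed.

Lemma cderiv_zero_const : forall g t, (forall s, has_cderiv g s C0) -> g t = g C0.
Proof.
  intros g t Hg.
  assert (Hre : forall (proj : Cx -> R), (forall a b, proj (Cadd a b) = proj a + proj b) ->
             (forall a, proj (Copp a) = - proj a) -> (forall a, Rabs (proj a) <= Cmod a) ->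
             proj (g t) = proj (g C0)).
  { intros proj Padd Popp Pmod.
    set (phi := fun r => proj (g (Cmul (RtoC r) t))).
    assert (Hd : forall r, derivable_pt_lim phi r 0).
    { intros r eps He.
      pose proof (Hg (Cmul (RtoC r) t)) as H. apply dlin_cderiv in H.
      destruct (H (eps / 2 / (Cmod t + 1))) as [d [Hd Hh]].
      { pose proof (Cmod_ge0 t). apply Rdiv_lt_0_compat; lra. }
      exists (mkposreal (d / (Cmod t + 1)) ltac:(pose proof (Cmod_ge0 t); apply Rdiv_lt_0_compat; lra)).
      intros h Hh0 Hhd. simpl in Hhd. unfold phi.
      pose proof (Cmod_ge0 t).
      replace (Cmul (RtoC (r + h)) t) with (Cadd (Cmul (RtoC r) t) (Cmul (RtoC h) t))
        by (unfold RtoC; cxe; ring).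
      destruct (Req_dec (Cmod t) 0) as [Ht0|Ht0].
      - apply Cmod_eq0 in Ht0. rewrite Ht0.
        replace (Cadd (Cmul (RtoC r) C0) (Cmul (RtoC h) C0)) with (Cmul (RtoC r) C0) by ring.
        replace ((proj (g (Cmul (RtoC r) C0)) - proj (g (Cmul (RtoC r) C0))) / h - 0) with 0 by (field; auto).
        rewrite Rabs_R0; lra.
      - assert (Hht : Cmul (RtoC h) t <> C0).
        { intro Hc. apply (f_equal Cmod) in Hc. rewrite Cmod_mul, Cmod_RtoC, Cmod_C0 in Hc.
          pose proof (Cmod_ge0 t). apply Rmult_integral in Hc. destruct Hc as [Hc|Hc]; [apply (Rabs_no_R0 h Hh0) in Hc|]; lra. }
        assert (Hhtd : Cmod (Cmul (RtoC h) t) < d).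
        { rewrite Cmod_mul, Cmod_RtoC.
          apply Rle_lt_trans with (Rabs h * (Cmod t + 1)); [apply Rmult_le_compat_l; [apply Rabs_pos|lra]|].
          apply (Rmult_lt_compat_r (Cmod t + 1)) in Hhd; [|lra].
          replace (d / (Cmod t + 1) * (Cmod t + 1)) with d in Hhd by (field; lra). lra. }
        specialize (Hh _ Hht Hhtd).
        replace (Cmul (Cmul (RtoC h) t) C0) with C0 in Hh by ring.
        set (D := Csub (Csub (g (Cadd (Cmul (RtoC r) t) (Cmul (RtoC h) t))) (g (Cmul (RtoC r) t))) C0) in Hh.
        assert (HD : proj D = proj (g (Cadd (Cmul (RtoC r) t) (Cmul (RtoC h) t))) - proj (g (Cmul (RtoC r) t))).
        { unfold D, Csub. rewrite !Padd, !Popp. replace (Copp C0) with C0 by ring.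
          assert (proj C0 = 0).
          { pose proof (Pmod C0). rewrite Cmod_C0 in H1. pose proof (Rabs_pos (proj C0)).
            destruct (Req_dec (proj C0) 0); auto. apply Rabs_pos_lt in H3. lra. }
          rewrite H1; ring. }
        rewrite <- HD. rewrite Rminus_0_r.
        unfold Rdiv. rewrite Rabs_mult, Rabs_inv.
        pose proof (Pmod D). rewrite Cmod_mul, Cmod_RtoC in Hh.
        assert (Rabs h > 0) by (apply Rabs_pos_lt; auto).
        apply (Rmult_lt_reg_r (Rabs h)); [lra|]. rewrite Rmult_assoc, Rinv_l by lra.
        apply Rle_lt_trans with (eps / 2 / (Cmod t + 1) * (Rabs h * Cmod t)); [lra|].
        apply Rle_lt_trans with (eps / 2 * Rabs h).
        + replace (eps / 2 / (Cmod t + 1) * (Rabs h * Cmod t)) with (eps / 2 * Rabs h * (Cmod t / (Cmod t + 1))) by (field; lra).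
          assert (Cmod t / (Cmod t + 1) <= 1).
          { apply (Rmult_le_reg_r (Cmod t + 1)); [lra|]. unfold Rdiv. rewrite Rmult_assoc, Rinv_l by lra. lra. }
          assert (0 <= eps / 2 * Rabs h) by nra. nra.
        + nra. }
    assert (pr : derivable phi) by (intro x; exists 0; apply Hd).
    assert (Hc : constant phi).
    { apply (null_derivative_1 phi (fun x => exist _ 0 (Hd x))). intros; reflexivity. }
    specialize (Hc 1 0). unfold phi in Hc.
    replace (Cmul (RtoC 1) t) with t in Hc by (unfold RtoC; cxe; ring).
    replace (Cmul (RtoC 0) t) with C0 in Hc by (unfold RtoC; cxe; ring). exact Hc. }
  apply Cx_ext.
  - apply Hre; intros; simpl; auto. apply Re_le_Cmod.
  - apply Hre; intros; simpl; auto. apply Im_le_Cmod.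
Qed.

Definition ecoef (n : nat) (A : mat) (i j m : nat) : Cx := Cmul (RtoC (/ INR (fact m))) (mpow n A m i j).
Definition Ec (n : nat) (A : mat) (s : Cx) : mat := fun i j => psum (ecoef n A i j) s.
Definition Mbound (n : nat) (A : mat) : R := rsum n (fun i => rsum n (fun j => Cmod (A i j))).

Lemma rsum_term_le : forall m f i, (forall k, 0 <= f k) -> (i < m)%nat -> f i <= rsum m f.
Proof.
  induction m; intros; [lia|]. simpl. destruct (Nat.eq_dec i m).
  - subst. pose proof (rsum_ge0 m f H). lra.
  - pose proof (IHm f i H ltac:(lia)). pose proof (H m). lra.
Qed.

Lemma Mbound_ge0 : forall n A, 0 <= Mbound n A.
Proof. intros; apply rsum_ge0; intros; apply rsum_ge0; intros; apply Cmod_ge0. Qed.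

Lemma entry_le_Mbound : forall n A i j, (i < n)%nat -> (j < n)%nat -> Cmod (A i j) <= Mbound n A.
Proof.
  intros. unfold Mbound.
  eapply Rle_trans; [| apply (rsum_term_le n (fun i => rsum n (fun j => Cmod (A i j))) i); auto].
  - apply (rsum_term_le n (fun j => Cmod (A i j)) j); auto. intros; apply Cmod_ge0.
  - intros; apply rsum_ge0; intros; apply Cmod_ge0.
Qed.

Lemma mpow_bound : forall n A m i j, (i < n)%nat -> (j < n)%nat ->
  Cmod (mpow n A m i j) <= (INR n * Mbound n A) ^ m.
Proof.
  intros n A m. induction m; intros i j Hi Hj; simpl.
  - unfold mId. destruct (Nat.eqb i j); [rewrite Cmod_C1| rewrite Cmod_C0]; lra.
  - unfold mmul. eapply Rle_trans; [apply Cmod_csum|].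
    apply Rle_trans with (rsum n (fun _ => Mbound n A * (INR n * Mbound n A) ^ m)).
    + apply rsum_le. intros l Hl. rewrite Cmod_mul. apply Rmult_le_compat; try apply Cmod_ge0.
      * apply entry_le_Mbound; auto.
      * apply IHm; auto.
    + rewrite rsum_const. right; ring.
Qed.

Lemma ecoef_bound : forall n A i j, (i < n)%nat -> (j < n)%nat -> ps_bound (ecoef n A i j) 1 (INR n * Mbound n A).
Proof.
  intros. split.
  - apply Rmult_le_pos; [apply pos_INR| apply Mbound_ge0].
  - intros m. unfold ecoef. rewrite Cmod_mul, Cmod_RtoC.
    pose proof (INR_fact_lt_0 m). rewrite Rabs_right by (left; apply Rinv_0_lt_compat; lra).
    pose proof (mpow_bound n A m i j H H0).
    unfold Rdiv. rewrite Rmult_1_l. rewrite Rmult_comm. apply Rmult_le_compat_r; auto.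
    left; apply Rinv_0_lt_compat; lra.
Qed.

Lemma mpow_mscale : forall n s A m, mpow n (mscale s A) m = mscale (Cpow s m) (mpow n A m).
Proof.
  intros n s A m. induction m; simpl.
  - extensionality i; extensionality j; unfold mscale; simpl; ring.
  - rewrite IHm. rewrite mmul_mscale_l, mmul_mscale_r.
    extensionality i; extensionality j; unfold mscale; ring.
Qed.

Lemma exp_partial_pser : forall n A s N i j,
  exp_partial n (mscale s A) N i j = pser (ecoef n A i j) s (S N).
Proof.
  intros. unfold exp_partial, pser. apply csum_ext; intros. rewrite mpow_mscale.
  unfold mscale, ecoef. ring.
Qed.

Lemma Ec_cvm : forall n A s i j, (i < n)%nat -> (j < n)%nat ->
  cvm (fun N => exp_partial n (mscale s A) N i j) (Ec n A s i j).
Proof.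
  intros. eapply cvm_ext. intros; symmetry; apply exp_partial_pser.
  apply (cvm_shift (pser (ecoef n A i j) s)). eapply ps_cv. apply ecoef_bound; auto.
Qed.

Lemma Ec_is_mexp : forall n A s, is_mexp n (mscale s A) (Ec n A s).
Proof.
  intros n A s i j Hi Hj. apply ccv_cvm. apply Ec_cvm; auto.
Qed.

Lemma mexp_Ec : forall n A s, meq n (mexp n (mscale s A)) (Ec n A s).
Proof.
  intros n A s.
  assert (H : is_mexp n (mscale s A) (mexp n (mscale s A))).
  { unfold mexp. apply epsilon_spec. exists (Ec n A s). apply Ec_is_mexp. }
  intros i j Hi Hj. apply (cvm_unique (fun N => exp_partial n (mscale s A) N i j)).
  - apply ccv_cvm. apply H; auto.
  - apply Ec_cvm; auto.
Qed.

Lemma dc_ecoef : forall n A i j m,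
  dc (ecoef n A i j) m = csum n (fun l => Cmul (A i l) (ecoef n A l j m)).
Proof.
  intros. unfold dc, ecoef. simpl mpow. unfold mmul.
  rewrite <- csum_scal_l. rewrite <- csum_scal_l. apply csum_ext; intros.
  rewrite fact_simpl, mult_INR.
  pose proof (INR_fact_lt_0 m). pose proof (lt_0_INR (S m) ltac:(lia)).
  assert (Hc : Cmul (RtoC (INR (S m))) (RtoC (/ (INR (S m) * INR (fact m)))) = RtoC (/ INR (fact m))).
  { set (r := INR (S m)) in *. set (r2 := INR (fact m)) in *. unfold RtoC; cxe; field; lra. }
  rewrite <- Hc. ring.
Qed.

Lemma Ec_deriv : forall n A t i j, (i < n)%nat -> (j < n)%nat ->
  has_cderiv (fun s => Ec n A s i j) t (mmul n A (Ec n A t) i j).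
Proof.
  intros. unfold Ec at 1.
  replace (mmul n A (Ec n A t) i j) with (psum (dc (ecoef n A i j)) t).
  - eapply ps_deriv. apply ecoef_bound; auto.
  - apply (cvm_unique (pser (dc (ecoef n A i j)) t)).
    + eapply ps_cv. apply ps_bound_dc. apply ecoef_bound; auto.
    + unfold mmul, Ec. eapply cvm_ext.
      2:{ apply (cvm_csum n (fun l N => Cmul (A i l) (pser (ecoef n A l j) t N))).
          intros l Hl. apply cvm_scal. eapply ps_cv. apply ecoef_bound; auto. }
      intros N. unfold pser. simpl. rewrite <- (csum_ext n (fun l => csum N (fun m => Cmul (A i l) (Cmul (ecoef n A l j m) (Cpow t m))))).
      * rewrite csum_swap. apply csum_ext; intros m Hm. rewrite dc_ecoef.
        rewrite <- csum_scal_r. apply csum_ext; intros; ring.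
      * intros; rewrite <- csum_scal_l; reflexivity.
Qed.

Lemma mpow_comm_gen : forall n A B m, meq n (mmul n B A) (mmul n A B) ->
  meq n (mmul n B (mpow n A m)) (mmul n (mpow n A m) B).
Proof.
  intros n A B m H. induction m; simpl.
  - rewrite mmul_id_l, mmul_id_r. reflexivity.
  - rewrite <- mmul_assoc. rewrite H. rewrite mmul_assoc. rewrite IHm. rewrite mmul_assoc. reflexivity.
Qed.

Lemma Ec_comm : forall n A B s, meq n (mmul n B A) (mmul n A B) ->
  meq n (mmul n B (Ec n A s)) (mmul n (Ec n A s) B).
Proof.
  intros n A B s H i j Hi Hj.
  pose proof (mpow_comm_gen n A B) as HP.
  set (u := fun N => csum N (fun m => Cmul (RtoC (/ INR (fact m))) (Cmul (Cpow s m) (mmul n B (mpow n A m) i j)))).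
  apply (cvm_unique u).
  - unfold mmul at 1, Ec. eapply cvm_ext.
    2:{ apply (cvm_csum n (fun l N => Cmul (B i l) (pser (ecoef n A l j) s N))).
        intros l Hl. apply cvm_scal. eapply ps_cv. apply ecoef_bound; auto. }
    intros N. unfold u, pser, ecoef. simpl.
    rewrite <- (csum_ext n (fun l => csum N (fun m => Cmul (B i l) (Cmul (Cmul (RtoC (/ INR (fact m))) (mpow n A m l j)) (Cpow s m))))).
    + rewrite csum_swap. apply csum_ext; intros m Hm. unfold mmul.
      rewrite <- csum_scal_l, <- csum_scal_l. apply csum_ext; intros; ring.
    + intros; rewrite <- csum_scal_l; reflexivity.
  - unfold u. eapply cvm_ext.
    { intros N. apply csum_ext. intros m Hm. rewrite (HP m H i j Hi Hj). reflexivity. }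
    replace (mmul n (Ec n A s) B i j) with (csum n (fun l => Cmul (B l j) (psum (ecoef n A i l) s)))
      by (unfold mmul, Ec; apply csum_ext; intros; ring).
    eapply cvm_ext.
    2:{ apply (cvm_csum n (fun l N => Cmul (B l j) (pser (ecoef n A i l) s N))).
        intros l Hl. apply cvm_scal. eapply ps_cv. apply ecoef_bound; auto. }
    intros N. unfold pser, ecoef. simpl.
    rewrite <- (csum_ext n (fun l => csum N (fun m => Cmul (B l j) (Cmul (Cmul (RtoC (/ INR (fact m))) (mpow n A m i l)) (Cpow s m))))).
    + rewrite csum_swap. apply csum_ext; intros m Hm. unfold mmul.
      rewrite <- csum_scal_l, <- csum_scal_l. apply csum_ext; intros; ring.
    + intros; rewrite <- csum_scal_l; reflexivity.
Qed.

Lemma psum_at0 : forall c K B, ps_bound c K B -> psum c C0 = c O.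
Proof.
  intros. apply (cvm_unique (pser c C0)).
  - eapply ps_cv; eauto.
  - apply cvm_unshift. eapply cvm_ext; [|apply cvm_const].
    intros N. unfold pser. rewrite csum_S_l. rewrite csum_zero'.
    + simpl; ring.
    + intros; simpl; ring.
Qed.

Lemma Ec_0 : forall n A, meq n (Ec n A C0) mId.
Proof.
  intros n A i j Hi Hj. unfold Ec. erewrite psum_at0 by (apply ecoef_bound; auto).
  unfold ecoef; simpl. unfold RtoC; cxe; rewrite Rinv_1; ring.
Qed.

Lemma Ec_inv : forall n A s, meq n (mmul n (Ec n A s) (Ec n A (Copp s))) mId.
Proof.
  intros n A s i j Hi Hj.
  set (g := fun z => mmul n (Ec n A z) (Ec n A (Copp z)) i j).
  change (g s = mId i j).
  rewrite (cderiv_zero_const g s).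
  - unfold g. replace (Copp C0) with C0 by ring.
    assert (Hm : meq n (mmul n (Ec n A C0) (Ec n A C0)) mId) by (rewrite !Ec_0; apply mmul_id_l).
    apply Hm; auto.
  - intros z. unfold g, mmul.
    eapply cderiv_ext; [intros; reflexivity|].
    replace C0 with (csum n (fun l => Cadd (Cmul (mmul n A (Ec n A z) i l) (Ec n A (Copp z) l j))
                                            (Cmul (Ec n A z i l) (Copp (mmul n A (Ec n A (Copp z)) l j))))).
    + apply cderiv_csum. intros l Hl. apply cderiv_mul.
      * apply Ec_deriv; auto.
      * apply (cderiv_neg_arg (fun s => Ec n A s l j)). apply Ec_deriv; auto.
    + rewrite csum_add.
      transitivity (Csub (mmul n (mmul n A (Ec n A z)) (Ec n A (Copp z)) i j)
                         (mmul n (mmul n (Ec n A z) A) (Ec n A (Copp z)) i j)).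
      * rewrite (mmul_assoc n (Ec n A z) A). unfold Csub. f_equal.
        change (mmul n (Ec n A z) (mmul n A (Ec n A (Copp z))) i j) with
          (csum n (fun l => Cmul (Ec n A z i l) (mmul n A (Ec n A (Copp z)) l j))).
        rewrite <- csum_opp. apply csum_ext; intros; ring.
      * assert (Hm : meq n (mmul n (mmul n A (Ec n A z)) (Ec n A (Copp z)))
                           (mmul n (mmul n (Ec n A z) A) (Ec n A (Copp z)))).
        { rewrite (Ec_comm n A A z) by reflexivity. reflexivity. }
        rewrite (Hm i j Hi Hj). ring.
Qed.

Lemma o_eq : forall a, o a a = C0.
Proof. intros; unfold o; rewrite Nat.eqb_refl; auto. Qed.
Lemma o_lt : forall a b, (a < b)%nat -> o a b = C1.
Proof. intros; unfold o. destruct (Nat.eqb_spec a b); [lia|]. destruct (Nat.ltb_spec a b); [auto|lia]. Qed.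
Lemma o_gt : forall a b, (b < a)%nat -> o a b = Copp C1.
Proof. intros; unfold o. destruct (Nat.eqb_spec a b); [lia|]. destruct (Nat.ltb_spec a b); [lia|auto]. Qed.

Lemma csum_shift_zero : forall m p f, (forall a, (m <= a)%nat -> f a = C0) -> (m <= p)%nat -> csum p f = csum m f.
Proof.
  intros. replace p with (m + (p - m))%nat by lia. rewrite csum_plus.
  rewrite (csum_zero' (p - m)); [ring|]. intros; apply H; lia.
Qed.

Lemma csum_o_telescope_le : forall d al b (e f : nat -> Cx),
  (forall a, (al < a)%nat -> e a = C0) -> (forall a, (a <= al)%nat -> e a = Csub (f a) (f (S a))) ->
  (al < d)%nat -> (b <= al)%nat ->
  csum d (fun a => Cmul (o b a) (e a)) = Csub (Csub (f (S b)) (f (S al))) (Csub (f O) (f b)).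
Proof.
  intros d al b e f He0 He Hd Hb.
  rewrite (csum_shift_zero (S al)) by (intros; try rewrite He0 by lia; try ring; lia).
  replace (S al) with (b + S (al - b))%nat by lia. rewrite csum_plus.
  rewrite (csum_ext b _ (fun a => Copp (Csub (f a) (f (S a))))).
  2:{ intros. rewrite o_gt by lia. rewrite He by lia. ring. }
  rewrite csum_opp, csum_telescope. rewrite csum_S_l.
  rewrite Nat.add_0_r, o_eq.
  rewrite (csum_ext (al - b) _ (fun a => Csub (f (S b + a)%nat) (f (S b + S a)%nat))).
  2:{ intros. rewrite o_lt by lia. rewrite He by lia.
      replace (b + S i)%nat with (S b + i)%nat by lia. replace (S (S b + i)) with (S b + S i)%nat by lia. ring. }
  rewrite (csum_telescope (al - b) (fun a => f (S b + a)%nat)).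
  rewrite Nat.add_0_r. replace (S b + (al - b))%nat with (S al) by lia.
  replace (b + S (al - b))%nat with (S al) by lia. ring.
Qed.

Lemma csum_o_telescope_gt : forall d al b (e f : nat -> Cx),
  (forall a, (al < a)%nat -> e a = C0) -> (forall a, (a <= al)%nat -> e a = Csub (f a) (f (S a))) ->
  (al < d)%nat -> (al < b)%nat ->
  csum d (fun a => Cmul (o b a) (e a)) = Copp (Csub (f O) (f (S al))).
Proof.
  intros d al b e f He0 He Hd Hb.
  rewrite (csum_shift_zero (S al)) by (intros; try rewrite He0 by lia; try ring; lia).
  rewrite (csum_ext (S al) _ (fun a => Copp (Csub (f a) (f (S a))))).
  2:{ intros. rewrite o_gt by lia. rewrite He by lia. ring. }
  rewrite csum_opp, csum_telescope. reflexivity.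
Qed.

Lemma csum_telescope_d : forall d al (e f : nat -> Cx),
  (forall a, (al < a)%nat -> e a = C0) -> (forall a, (a <= al)%nat -> e a = Csub (f a) (f (S a))) ->
  (al < d)%nat -> csum d e = Csub (f O) (f (S al)).
Proof.
  intros d al e f He0 He Hd.
  rewrite (csum_shift_zero (S al)) by (intros; try rewrite He0 by lia; try ring; lia).
  rewrite (csum_ext (S al) _ (fun a => Csub (f a) (f (S a)))) by (intros; apply He; lia).
  apply csum_telescope.
Qed.

Lemma mprod_down_ext : forall n f g q, (forall m, (m < q)%nat -> f m = g m) -> mprod_down n f q = mprod_down n g q.
Proof. induction q; intros; simpl; auto. rewrite IHq by (intros; apply H; lia). rewrite H by lia; auto. Qed.

Lemma mprod_down_ext_meq : forall n f g q, (forall m, (m < q)%nat -> meq n (f m) (g m)) ->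
  meq n (mprod_down n f q) (mprod_down n g q).
Proof. induction q; intros; simpl; [reflexivity|]. rewrite IHq by (intros; apply H; lia). rewrite H by lia; reflexivity. Qed.

Lemma mprod_down_split : forall n f p q,
  meq n (mprod_down n f (p + q)) (mmul n (mprod_down n (fun m => f (p + m)%nat) q) (mprod_down n f p)).
Proof.
  intros n f p q. induction q; simpl.
  - rewrite Nat.add_0_r. rewrite mmul_id_l. reflexivity.
  - rewrite Nat.add_succ_r. simpl. rewrite IHq. rewrite mmul_assoc. reflexivity.
Qed.

Lemma mprod_down_peel : forall n f q,
  meq n (mprod_down n f (S q)) (mmul n (mprod_down n (fun m => f (S m)) q) (f O)).
Proof.
  intros. pose proof (mprod_down_split n f 1 q). simpl in H. rewrite H.
  rewrite mmul_id_r. reflexivity.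
Qed.

Definition Plt (n : nat) (p : point) (a : nat) : mat := mprod_down n (IWV p) a.
Definition Qge (n al : nat) (p : point) (a : nat) : mat := mprod_down n (fun m => IWV p (a + m)%nat) (S al - a).
Definition Pm (n al : nat) (p : point) : mat := mprod_down n (IWV p) (S al).
Definition Tm (n al k : nat) (p : point) : mat := mpow n (S_mat n al p) (k - 1).
Definition Ym (n al k : nat) (p : point) : mat := mmul n (pZ p) (Tm n al k p).
Definition Dm (n al k : nat) (p : point) : mat := mmul n (Tm n al k p) (Pm n al p).
Definition Gm (n al k : nat) (p : point) (a : nat) : mat :=
  mmul n (mmul n (Plt n p a) (Ym n al k p)) (Qge n al p (S a)).
Definition um (n al k : nat) (p : point) (a : nat) : mat :=
  mmul n (mmul n (Plt n p a) (Ym n al k p)) (Qge n al p a).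
Definition gcol (n al k : nat) (p : point) (a : nat) : nat -> Cx :=
  fun i => if Nat.leb a al then mulcol n (Gm n al k p a) (pW p a) i else C0.
Definition hrow (n al k : nat) (p : point) (a : nat) : nat -> Cx :=
  fun j => if Nat.leb a al then rowmul n (pV p a) (Gm n al k p a) j else C0.
Definition outer (w v : nat -> Cx) : mat := fun i j => Cmul (w i) (v j).
Definition Em (n al k : nat) (p : point) (a : nat) : mat :=
  msub (outer (gcol n al k p a) (pV p a)) (outer (pW p a) (hrow n al k p a)).
Definition Skm (n al k : nat) (p : point) : mat := mpow n (S_mat n al p) k.

Lemma Qge_peel : forall n al p a, (a <= al)%nat ->
  meq n (Qge n al p a) (mmul n (Qge n al p (S a)) (IWV p a)).
Proof.
  intros. unfold Qge. replace (S al - a)%nat with (S (al - a)) by lia.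
  rewrite mprod_down_peel. replace (S al - S a)%nat with (al - a)%nat by lia.
  rewrite Nat.add_0_r.
  rewrite (mprod_down_ext n (fun m => IWV p (a + S m)%nat) (fun m => IWV p (S a + m)%nat)).
  - reflexivity.
  - intros; f_equal; lia.
Qed.

Lemma Qge_0 : forall n al p, Qge n al p O = Pm n al p.
Proof. intros. reflexivity. Qed.

Lemma Qge_top : forall n al p, Qge n al p (S al) = mId.
Proof. intros. unfold Qge. rewrite Nat.sub_diag. reflexivity. Qed.

Lemma Pm_split : forall n al p a, (a <= S al)%nat ->
  meq n (Pm n al p) (mmul n (Qge n al p a) (Plt n p a)).
Proof.
  intros. unfold Pm, Qge, Plt. replace (S al) with (a + (S al - a))%nat at 1 by lia.
  apply mprod_down_split.
Qed.

Lemma um_Gm_l : forall n al k p a, (a <= al)%nat ->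
  meq n (um n al k p a) (mmul n (Gm n al k p a) (IWV p a)).
Proof.
  intros. unfold um, Gm. rewrite Qge_peel by auto. rewrite !mmul_assoc. reflexivity.
Qed.

Lemma um_Gm_r : forall n al k p a,
  meq n (um n al k p (S a)) (mmul n (IWV p a) (Gm n al k p a)).
Proof.
  intros. unfold um, Gm, Plt. simpl. rewrite !mmul_assoc. reflexivity.
Qed.

Lemma um_0 : forall n al k p, meq n (um n al k p O) (mmul n (Ym n al k p) (Pm n al p)).
Proof. intros. unfold um. rewrite Qge_0. unfold Plt; simpl. rewrite mmul_id_l. reflexivity. Qed.

Lemma um_top : forall n al k p, meq n (um n al k p (S al)) (mmul n (Pm n al p) (Ym n al k p)).
Proof. intros. unfold um. rewrite Qge_top. rewrite mmul_id_r. reflexivity. Qed.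

Lemma IWV_outer : forall p a, IWV p a = madd mId (outer (pW p a) (pV p a)).
Proof. reflexivity. Qed.

Lemma outer_mmul_l : forall n w v M, meq n (mmul n (outer w v) M) (outer w (rowmul n v M)).
Proof.
  intros n w v M i j Hi Hj. unfold mmul, outer, rowmul. rewrite <- csum_scal_l.
  apply csum_ext; intros; ring.
Qed.

Lemma outer_mmul_r : forall n w v M, meq n (mmul n M (outer w v)) (outer (mulcol n M w) v).
Proof.
  intros n w v M i j Hi Hj. unfold mmul, outer, mulcol. rewrite <- csum_scal_r.
  apply csum_ext; intros; ring.
Qed.

Lemma Em_tel : forall n al k p a, (a <= al)%nat ->
  meq n (Em n al k p a) (msub (um n al k p a) (um n al k p (S a))).
Proof.
  intros. rewrite um_Gm_l by auto. rewrite um_Gm_r. rewrite !IWV_outer.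
  rewrite mmul_madd_l, mmul_madd_r. rewrite mmul_id_l, mmul_id_r.
  rewrite outer_mmul_l, outer_mmul_r.
  intros i j Hi Hj. unfold Em, msub, madd, outer, gcol, hrow.
  apply Nat.leb_le in H. rewrite H. ring.
Qed.

Lemma Em_zero : forall n al k p a, (al < a)%nat -> forall i j, Em n al k p a i j = C0.
Proof.
  intros. unfold Em, msub, outer, gcol, hrow.
  destruct (Nat.leb_spec a al); [lia|]. ring.
Qed.

Definition msum (m : nat) (F : nat -> mat) : mat := fun i j => csum m (fun a => F a i j).

Lemma Esum_tel : forall n al k p d, (al < d)%nat ->
  meq n (msum d (Em n al k p)) (msub (mmul n (Ym n al k p) (Pm n al p)) (mmul n (Pm n al p) (Ym n al k p))).
Proof.
  intros n al k p d Hd i j Hi Hj. unfold msum.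
  rewrite (csum_telescope_d d al (fun a => Em n al k p a i j) (fun a => um n al k p a i j)); auto.
  - unfold msub. rewrite um_0, um_top by auto. reflexivity.
  - intros; apply Em_zero; auto.
  - intros. rewrite Em_tel by auto. reflexivity.
Qed.

Lemma oEsum_le : forall n al k p d b, (al < d)%nat -> (b <= al)%nat ->
  meq n (msum d (fun a => mscale (o b a) (Em n al k p a)))
    (msub (msub (um n al k p (S b)) (mmul n (Pm n al p) (Ym n al k p)))
          (msub (mmul n (Ym n al k p) (Pm n al p)) (um n al k p b))).
Proof.
  intros n al k p d b Hd Hb i j Hi Hj. unfold msum, mscale.
  rewrite (csum_o_telescope_le d al b (fun a => Em n al k p a i j) (fun a => um n al k p a i j)); auto.
  - unfold msub. rewrite um_0, um_top by auto. reflexivity.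
  - intros; apply Em_zero; auto.
  - intros. rewrite Em_tel by auto. reflexivity.
Qed.

Lemma oEsum_gt : forall n al k p d b, (al < d)%nat -> (al < b)%nat ->
  meq n (msum d (fun a => mscale (o b a) (Em n al k p a)))
    (mneg (msub (mmul n (Ym n al k p) (Pm n al p)) (mmul n (Pm n al p) (Ym n al k p)))).
Proof.
  intros n al k p d b Hd Hb i j Hi Hj. unfold msum, mscale.
  rewrite (csum_o_telescope_gt d al b (fun a => Em n al k p a i j) (fun a => um n al k p a i j)); auto.
  - unfold msub, mneg. rewrite um_0, um_top by auto. reflexivity.
  - intros; apply Em_zero; auto.
  - intros. rewrite Em_tel by auto. reflexivity.
Qed.

Lemma clsum_app : forall {X} (l1 l2 : list X) f, clsum (l1 ++ l2) f = Cadd (clsum l1 f) (clsum l2 f).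
Proof. induction l1; intros; simpl; [ring| rewrite IHl1; ring]. Qed.

Lemma clsum_map : forall {X Y} (g : X -> Y) l f, clsum (map g l) f = clsum l (fun x => f (g x)).
Proof. induction l; intros; simpl; [auto| rewrite IHl; auto]. Qed.

Lemma clsum_prod : forall {X Y} (l1 : list X) (l2 : list Y) f,
  clsum (list_prod l1 l2) f = clsum l1 (fun x => clsum l2 (fun y => f (x, y))).
Proof.
  induction l1; intros; simpl; [auto|]. rewrite clsum_app, clsum_map, IHl1. reflexivity.
Qed.

Lemma clsum_seq : forall m f, clsum (seq 0 m) f = csum m f.
Proof.
  induction m; intros; [reflexivity|]. rewrite seq_S, clsum_app, IHm. simpl. ring.
Qed.

Lemma clsum_coords : forall n d f, clsum (coords n d) f =
  Cadd (Cadd (Cadd (csum n (fun i => csum n (fun j => f (cX i j))))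
                   (csum n (fun i => csum n (fun j => f (cZ i j)))))
             (csum d (fun a => csum n (fun j => f (cV a j)))))
       (csum d (fun a => csum n (fun j => f (cW a j)))).
Proof.
  intros. unfold coords. rewrite !clsum_app, !clsum_map, !clsum_prod, !clsum_seq.
  assert (Hs : forall m (g : nat -> nat -> Cx), csum m (fun x => clsum (seq 0 n) (g x)) = csum m (fun x => csum n (g x)))
    by (intros; apply csum_ext; intros; apply clsum_seq).
  simpl. rewrite !Hs. ring.
Qed.

Lemma in_coords : forall n d c, In c (coords n d) ->
  match c with
  | cX i j => (i < n)%nat /\ (j < n)%nat
  | cZ i j => (i < n)%nat /\ (j < n)%nat
  | cV a j => (a < d)%nat /\ (j < n)%nat
  | cW a j => (a < d)%nat /\ (j < n)%nat
  end.
Proof.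
  intros n d c H. unfold coords in H. rewrite !in_app_iff in H.
  destruct H as [H|[H|[H|H]]]; apply in_map_iff in H; destruct H as [[x y] [Hc Hin]];
    apply in_prod_iff in Hin; destruct Hin as [H1 H2]; apply in_seq in H1; apply in_seq in H2;
    subst; simpl; lia.
Qed.

Lemma P1 : forall n (D M : mat) k l, (k < n)%nat ->
  csum n (fun i => csum n (fun j => Cmul (D j i) (Cmul (dlt k j) (M i l)))) = mmul n D M k l.
Proof.
  intros. unfold mmul. apply csum_ext; intros i Hi.
  rewrite (csum_ext n _ (fun j => Cmul (dlt k j) (Cmul (D j i) (M i l)))) by (intros; ring).
  apply csum_delta; auto.
Qed.

Lemma P2 : forall n (D M : mat) k l, (l < n)%nat ->
  csum n (fun i => csum n (fun j => Cmul (D j i) (Cmul (dlt i l) (M k j)))) = mmul n M D k l.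
Proof.
  intros. unfold mmul at 1.
  rewrite (csum_ext n _ (fun i => Cmul (dlt l i) (csum n (fun j => Cmul (M k j) (D j i))))).
  - apply (csum_delta n l (fun i => csum n (fun j => Cmul (M k j) (D j i)))); auto.
  - intros. rewrite <- csum_scal_l. apply csum_ext; intros. rewrite dlt_sym. ring.
Qed.

Lemma P3 : forall n (D A B : mat) k l,
  csum n (fun i => csum n (fun j => Cmul (D j i) (Cmul (A i l) (B k j)))) = mmul n (mmul n B D) A k l.
Proof.
  intros. unfold mmul at 1. apply csum_ext; intros. unfold mmul. rewrite <- csum_scal_r.
  apply csum_ext; intros; ring.
Qed.

Lemma S1 : forall n (g : nat -> Cx) k c, (k < n)%nat ->
  csum n (fun j => Cmul (g j) (Cmul (dlt k j) c)) = Cmul (g k) c.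
Proof.
  intros. rewrite (csum_ext n _ (fun j => Cmul (dlt k j) (Cmul (g j) c))) by (intros; ring).
  apply (csum_delta n k (fun j => Cmul (g j) c)); auto.
Qed.

Lemma S2 : forall n (g : nat -> Cx) (M : mat) k,
  csum n (fun j => Cmul (g j) (M k j)) = mulcol n M g k.
Proof. intros; unfold mulcol; apply csum_ext; intros; ring. Qed.

Lemma S2' : forall n (g : nat -> Cx) (M : mat) l,
  csum n (fun j => Cmul (g j) (M j l)) = rowmul n g M l.
Proof. intros; unfold rowmul; apply csum_ext; intros; ring. Qed.

Lemma msum_outer_mmul_r : forall n d (w v : nat -> nat -> Cx) M i j,
  mmul n (msum d (fun a => outer (w a) (v a))) M i j = csum d (fun a => Cmul (w a i) (rowmul n (v a) M j)).
Proof.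
  intros. unfold mmul, msum, outer, rowmul.
  rewrite (csum_ext n _ (fun m => csum d (fun a => Cmul (w a i) (Cmul (v a m) (M m j))))).
  - rewrite csum_swap. apply csum_ext; intros. rewrite <- csum_scal_l. reflexivity.
  - intros. rewrite <- csum_scal_r. apply csum_ext; intros; ring.
Qed.

Lemma msum_outer_mmul_l : forall n d (w v : nat -> nat -> Cx) M i j,
  mmul n M (msum d (fun a => outer (w a) (v a))) i j = csum d (fun a => Cmul (mulcol n M (w a) i) (v a j)).
Proof.
  intros. unfold mmul, msum, outer, mulcol.
  rewrite (csum_ext n _ (fun m => csum d (fun a => Cmul (Cmul (M i m) (w a m)) (v a j)))).
  - rewrite csum_swap. apply csum_ext; intros. rewrite <- csum_scal_r. reflexivity.
  - intros. rewrite <- csum_scal_l. apply csum_ext; intros; ring.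
Qed.

Lemma Esum_split : forall n al k p d i j,
  msum d (Em n al k p) i j =
  Csub (msum d (fun a => outer (gcol n al k p a) (pV p a)) i j) (msum d (fun a => outer (pW p a) (hrow n al k p a)) i j).
Proof. intros. unfold msum, Em, msub. apply csum_sub. Qed.

Lemma Sk_eq : forall n al k p, (k >= 1)%nat ->
  Skm n al k p = mmul n (S_mat n al p) (Tm n al k p).
Proof. intros. unfold Skm, Tm. destruct k; [lia|]. simpl. rewrite Nat.sub_0_r. reflexivity. Qed.

Lemma Sk_eq' : forall n al k p, (k >= 1)%nat ->
  meq n (Skm n al k p) (mmul n (Tm n al k p) (S_mat n al p)).
Proof. intros. rewrite Sk_eq by auto. unfold Tm. apply mpow_comm. Qed.

Lemma DZ_Sk : forall n al k p, (k >= 1)%nat -> meq n (mmul n (Dm n al k p) (pZ p)) (Skm n al k p).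
Proof. intros. rewrite Sk_eq'; auto. unfold Dm, S_mat, Pm. rewrite mmul_assoc. reflexivity. Qed.

Lemma PY_Sk : forall n al k p, (k >= 1)%nat -> mmul n (Pm n al p) (Ym n al k p) = Skm n al k p.
Proof. intros. rewrite Sk_eq by auto. unfold Ym, S_mat, Pm. rewrite mmul_assoc. reflexivity. Qed.

Lemma ZD_YP : forall n al k p, mmul n (pZ p) (Dm n al k p) = mmul n (Ym n al k p) (Pm n al p).
Proof. intros. unfold Dm, Ym. rewrite mmul_assoc. reflexivity. Qed.

Definition dHv (n al k : nat) (p : point) (c : coord) : Cx :=
  match c with
  | cX _ _ => C0
  | cZ i j => Dm n al k p j i
  | cV a j => gcol n al k p a j
  | cW a i => hrow n al k p a i
  end.

Definition dsum (n : nat) (F : nat -> nat -> Cx) : Cx := csum n (fun i => csum n (fun j => F i j)).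

Lemma dsum_comb4 : forall n c (a b e f F : nat -> nat -> Cx),
  (forall i j, F i j = Cmul c (Csub (Cadd (Cadd (a i j) (b i j)) (e i j)) (f i j))) ->
  csum n (fun i => csum n (fun j => F i j)) = Cmul c (Csub (Cadd (Cadd (dsum n a) (dsum n b)) (dsum n e)) (dsum n f)).
Proof.
  intros. unfold dsum. rewrite <- !csum_add, <- csum_sub, <- csum_scal_l. apply csum_ext; intros.
  rewrite <- !csum_add, <- csum_sub, <- csum_scal_l. apply csum_ext; intros. auto.
Qed.

Lemma dsum_comb2 : forall n c (a b F : nat -> nat -> Cx),
  (forall i j, F i j = Cmul c (Csub (a i j) (b i j))) ->
  csum n (fun i => csum n (fun j => F i j)) = Cmul c (Csub (dsum n a) (dsum n b)).
Proof.
  intros. unfold dsum. rewrite <- csum_sub, <- csum_scal_l. apply csum_ext; intros.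
  rewrite <- csum_sub, <- csum_scal_l. apply csum_ext; intros. auto.
Qed.

Lemma ssum_comb2 : forall n c (a b F : nat -> Cx),
  (forall j, F j = Cmul c (Csub (a j) (b j))) ->
  csum n F = Cmul c (Csub (csum n a) (csum n b)).
Proof. intros. rewrite <- csum_sub, <- csum_scal_l. apply csum_ext; intros. auto. Qed.

Lemma mmul_sub_entry_l : forall n A B M i j,
  Csub (mmul n A M i j) (mmul n B M i j) = csum n (fun m => Cmul (Csub (A i m) (B i m)) (M m j)).
Proof. intros. unfold mmul. rewrite <- csum_sub. apply csum_ext; intros; ring. Qed.
Lemma mmul_sub_entry_r : forall n A B M i j,
  Csub (mmul n M A i j) (mmul n M B i j) = csum n (fun m => Cmul (M i m) (Csub (A m j) (B m j))).
Proof. intros. unfold mmul. rewrite <- csum_sub. apply csum_ext; intros; ring. Qed.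

Definition GV (n al k : nat) (p : point) (d : nat) : mat := msum d (fun a => outer (gcol n al k p a) (pV p a)).
Definition WH (n al k : nat) (p : point) (d : nat) : mat := msum d (fun a => outer (pW p a) (hrow n al k p a)).

Lemma dHX_zero : forall n al k p c,
  csum n (fun i => csum n (fun j => Cmul (dHv n al k p (cX i j)) (br n p (cX i j) c))) = C0.
Proof. intros. apply csum_zero'; intros; apply csum_zero'; intros; simpl; ring. Qed.

Lemma br_X : forall n d al k p kk ll, (al < d)%nat -> (k >= 1)%nat -> (kk < n)%nat -> (ll < n)%nat ->
  clsum (coords n d) (fun a => Cmul (dHv n al k p a) (br n p a (cX kk ll))) =
  Copp (mmul n (pX p) (Skm n al k p) kk ll).
Proof.
  intros n d al k p kk ll Hd Hk Hkk Hll.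
  rewrite clsum_coords. rewrite (dHX_zero n).
  set (X := pX p). set (Z := pZ p). set (D := Dm n al k p).
  assert (HZ : csum n (fun i => csum n (fun j => Cmul (dHv n al k p (cZ i j)) (br n p (cZ i j) (cX kk ll)))) =
     Cmul (Copp half) (Csub (Cadd (Cadd (mmul n D (mmul n Z X) kk ll) (mmul n (mmul n X Z) D kk ll))
                                  (mmul n (mmul n X D) Z kk ll)) (mmul n (mmul n Z D) X kk ll))).
  { rewrite (dsum_comb4 n (Copp half)
      (fun i j => Cmul (D j i) (Cmul (dlt kk j) (mmul n Z X i ll)))
      (fun i j => Cmul (D j i) (Cmul (dlt i ll) (mmul n X Z kk j)))
      (fun i j => Cmul (D j i) (Cmul (Z i ll) (X kk j)))
      (fun i j => Cmul (D j i) (Cmul (X i ll) (Z kk j)))).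
    - unfold dsum. rewrite P1, P2, P3, P3 by auto. reflexivity.
    - intros. simpl. unfold brXZ. fold X Z D. ring. }
  assert (HV : csum d (fun a => csum n (fun j => Cmul (dHv n al k p (cV a j)) (br n p (cV a j) (cX kk ll)))) =
     Cmul (Copp half) (Csub (mmul n (GV n al k p d) X kk ll) (mmul n X (GV n al k p d) kk ll))).
  { unfold GV. rewrite msum_outer_mmul_r, msum_outer_mmul_l.
    rewrite <- csum_sub, <- csum_scal_l. apply csum_ext; intros a Ha.
    rewrite (ssum_comb2 n (Copp half)
      (fun j => Cmul (gcol n al k p a j) (Cmul (dlt kk j) (rowmul n (pV p a) X ll)))
      (fun j => Cmul (gcol n al k p a j) (Cmul (pV p a ll) (X kk j)))).
    - rewrite S1 by auto.
      rewrite (csum_ext n _ (fun j => Cmul (pV p a ll) (Cmul (gcol n al k p a j) (X kk j)))) by (intros; ring).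
      rewrite csum_scal_l, S2. ring.
    - intros. simpl. unfold brUV. fold X. ring. }
  assert (HW : csum d (fun a => csum n (fun j => Cmul (dHv n al k p (cW a j)) (br n p (cW a j) (cX kk ll)))) =
     Cmul (Copp half) (Csub (mmul n X (WH n al k p d) kk ll) (mmul n (WH n al k p d) X kk ll))).
  { unfold WH. rewrite msum_outer_mmul_r, msum_outer_mmul_l.
    rewrite <- csum_sub, <- csum_scal_l. apply csum_ext; intros a Ha.
    rewrite (ssum_comb2 n (Copp half)
      (fun j => Cmul (hrow n al k p a j) (Cmul (dlt j ll) (mulcol n X (pW p a) kk)))
      (fun j => Cmul (hrow n al k p a j) (Cmul (pW p a kk) (X j ll)))).
    - rewrite (csum_ext n _ (fun j => Cmul (hrow n al k p a j) (Cmul (dlt ll j) (mulcol n X (pW p a) kk))))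
        by (intros; rewrite dlt_sym; ring).
      rewrite S1 by auto.
      rewrite (csum_ext n _ (fun j => Cmul (pW p a kk) (Cmul (hrow n al k p a j) (X j ll)))) by (intros; ring).
      rewrite csum_scal_l, S2'. ring.
    - intros. simpl. unfold brUW. fold X. ring. }
  rewrite HZ, HV, HW.
  assert (E1 : mmul n D (mmul n Z X) kk ll = mmul n (Skm n al k p) X kk ll).
  { rewrite <- mmul_assoc. unfold D, Z.
    assert (Hq : meq n (mmul n (mmul n (Dm n al k p) (pZ p)) X) (mmul n (Skm n al k p) X))
      by (rewrite (DZ_Sk n al k p Hk); reflexivity).
    apply Hq; auto. }
  assert (E2 : mmul n (mmul n X Z) D kk ll = mmul n X (mmul n (Ym n al k p) (Pm n al p)) kk ll).
  { rewrite mmul_assoc. unfold Z, D. rewrite ZD_YP. reflexivity. }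
  assert (E3 : mmul n (mmul n X D) Z kk ll = mmul n X (Skm n al k p) kk ll).
  { rewrite mmul_assoc. unfold D, Z.
    assert (Hq : meq n (mmul n X (mmul n (Dm n al k p) (pZ p))) (mmul n X (Skm n al k p)))
      by (rewrite (DZ_Sk n al k p Hk); reflexivity).
    apply Hq; auto. }
  assert (E4 : mmul n (mmul n Z D) X kk ll = mmul n (mmul n (Ym n al k p) (Pm n al p)) X kk ll).
  { unfold Z, D. rewrite ZD_YP. reflexivity. }
  assert (Hm : forall i j, (i < n)%nat -> (j < n)%nat ->
     Csub (GV n al k p d i j) (WH n al k p d i j) =
     Csub (mmul n (Ym n al k p) (Pm n al p) i j) (Skm n al k p i j)).
  { intros. unfold GV, WH. rewrite <- Esum_split. rewrite (Esum_tel n al k p d Hd i j) by auto.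
    unfold msub. rewrite PY_Sk by auto. reflexivity. }
  assert (E5 : Csub (mmul n (GV n al k p d) X kk ll) (mmul n (WH n al k p d) X kk ll) =
               Csub (mmul n (mmul n (Ym n al k p) (Pm n al p)) X kk ll) (mmul n (Skm n al k p) X kk ll)).
  { rewrite !mmul_sub_entry_l. apply csum_ext; intros. rewrite Hm by auto. reflexivity. }
  assert (E6 : Csub (mmul n X (GV n al k p d) kk ll) (mmul n X (WH n al k p d) kk ll) =
               Csub (mmul n X (mmul n (Ym n al k p) (Pm n al p)) kk ll) (mmul n X (Skm n al k p) kk ll)).
  { rewrite !mmul_sub_entry_r. apply csum_ext; intros. rewrite Hm by auto. reflexivity. }
  rewrite E1, E2, E3, E4.
  transitivity (Cmul (Copp half) (Cadd (Cadd (Cadd (mmul n (Skm n al k p) X kk ll) (mmul n X (mmul n (Ym n al k p) (Pm n al p)) kk ll))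
       (Csub (mmul n X (Skm n al k p) kk ll) (mmul n (mmul n (Ym n al k p) (Pm n al p)) X kk ll)))
     (Cadd (Csub (mmul n (GV n al k p d) X kk ll) (mmul n (WH n al k p d) X kk ll))
           (Csub (mmul n X (WH n al k p d) kk ll) (mmul n X (GV n al k p d) kk ll))))).
  { ring. }
  rewrite E5. replace (Csub (mmul n X (WH n al k p d) kk ll) (mmul n X (GV n al k p d) kk ll))
    with (Copp (Csub (mmul n X (GV n al k p d) kk ll) (mmul n X (WH n al k p d) kk ll))) by ring.
  rewrite E6. rewrite half_eq. field. exact two_neq0.
Qed.

Lemma sumV_U : forall n d al k p (U : mat) kk ll, (kk < n)%nat ->
  csum d (fun a => csum n (fun j => Cmul (gcol n al k p a j) (Copp (brUV n U (pV p a) kk ll j)))) =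
  Cmul (Copp half) (Csub (mmul n (GV n al k p d) U kk ll) (mmul n U (GV n al k p d) kk ll)).
Proof.
  intros. unfold GV. rewrite msum_outer_mmul_r, msum_outer_mmul_l.
  rewrite <- csum_sub, <- csum_scal_l. apply csum_ext; intros a Ha.
  rewrite (ssum_comb2 n (Copp half)
    (fun j => Cmul (gcol n al k p a j) (Cmul (dlt kk j) (rowmul n (pV p a) U ll)))
    (fun j => Cmul (gcol n al k p a j) (Cmul (pV p a ll) (U kk j)))).
  - rewrite S1 by auto.
    rewrite (csum_ext n _ (fun j => Cmul (pV p a ll) (Cmul (gcol n al k p a j) (U kk j)))) by (intros; ring).
    rewrite csum_scal_l, S2. ring.
  - intros. unfold brUV. ring.
Qed.

Lemma sumW_U : forall n d al k p (U : mat) kk ll, (ll < n)%nat ->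
  csum d (fun a => csum n (fun j => Cmul (hrow n al k p a j) (Copp (brUW n U (pW p a) kk ll j)))) =
  Cmul (Copp half) (Csub (mmul n U (WH n al k p d) kk ll) (mmul n (WH n al k p d) U kk ll)).
Proof.
  intros. unfold WH. rewrite msum_outer_mmul_r, msum_outer_mmul_l.
  rewrite <- csum_sub, <- csum_scal_l. apply csum_ext; intros a Ha.
  rewrite (ssum_comb2 n (Copp half)
    (fun j => Cmul (hrow n al k p a j) (Cmul (dlt j ll) (mulcol n U (pW p a) kk)))
    (fun j => Cmul (hrow n al k p a j) (Cmul (pW p a kk) (U j ll)))).
  - rewrite (csum_ext n _ (fun j => Cmul (hrow n al k p a j) (Cmul (dlt ll j) (mulcol n U (pW p a) kk))))
      by (intros; rewrite dlt_sym; ring).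
    rewrite S1 by auto.
    rewrite (csum_ext n _ (fun j => Cmul (pW p a kk) (Cmul (hrow n al k p a j) (U j ll)))) by (intros; ring).
    rewrite csum_scal_l, S2'. ring.
  - intros. unfold brUW. ring.
Qed.

Lemma GV_WH : forall n d al k p i j, (al < d)%nat -> (k >= 1)%nat -> (i < n)%nat -> (j < n)%nat ->
  Csub (GV n al k p d i j) (WH n al k p d i j) =
  Csub (mmul n (Ym n al k p) (Pm n al p) i j) (Skm n al k p i j).
Proof.
  intros. unfold GV, WH. rewrite <- Esum_split. rewrite (Esum_tel n al k p d H i j) by auto.
  unfold msub. rewrite PY_Sk by auto. reflexivity.
Qed.

Lemma meq_entry : forall n A B i j, meq n A B -> (i < n)%nat -> (j < n)%nat -> A i j = B i j.
Proof. intros; auto. Qed.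

Lemma br_Z : forall n d al k p kk ll, (al < d)%nat -> (k >= 1)%nat -> (kk < n)%nat -> (ll < n)%nat ->
  clsum (coords n d) (fun a => Cmul (dHv n al k p a) (br n p a (cZ kk ll))) =
  Csub (mmul n (Skm n al k p) (pZ p) kk ll) (mmul n (pZ p) (Skm n al k p) kk ll).
Proof.
  intros n d al k p kk ll Hd Hk Hkk Hll.
  rewrite clsum_coords. rewrite (dHX_zero n).
  set (Z := pZ p). set (D := Dm n al k p).
  assert (HZ : csum n (fun i => csum n (fun j => Cmul (dHv n al k p (cZ i j)) (br n p (cZ i j) (cZ kk ll)))) =
     Cmul half (Csub (mmul n D (mmul n Z Z) kk ll) (mmul n (mmul n Z Z) D kk ll))).
  { rewrite (dsum_comb2 n half
      (fun i j => Cmul (D j i) (Cmul (dlt kk j) (mmul n Z Z i ll)))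
      (fun i j => Cmul (D j i) (Cmul (dlt i ll) (mmul n Z Z kk j)))).
    - unfold dsum. rewrite P1, P2 by auto. reflexivity.
    - intros. simpl. fold Z D. ring. }
  assert (HV : csum d (fun a => csum n (fun j => Cmul (dHv n al k p (cV a j)) (br n p (cV a j) (cZ kk ll)))) =
     Cmul (Copp half) (Csub (mmul n (GV n al k p d) Z kk ll) (mmul n Z (GV n al k p d) kk ll))).
  { rewrite <- (sumV_U n d al k p Z kk ll Hkk). apply csum_ext; intros; apply csum_ext; intros; reflexivity. }
  assert (HW : csum d (fun a => csum n (fun j => Cmul (dHv n al k p (cW a j)) (br n p (cW a j) (cZ kk ll)))) =
     Cmul (Copp half) (Csub (mmul n Z (WH n al k p d) kk ll) (mmul n (WH n al k p d) Z kk ll))).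
  { rewrite <- (sumW_U n d al k p Z kk ll Hll). apply csum_ext; intros; apply csum_ext; intros; reflexivity. }
  rewrite HZ, HV, HW.
  set (YP := mmul n (Ym n al k p) (Pm n al p)). set (Sk := Skm n al k p).
  assert (E1 : mmul n D (mmul n Z Z) kk ll = mmul n Sk Z kk ll).
  { rewrite <- mmul_assoc. apply (meq_entry n); auto. unfold D, Z, Sk. rewrite (DZ_Sk n al k p Hk). reflexivity. }
  assert (E2 : mmul n (mmul n Z Z) D kk ll = mmul n Z YP kk ll).
  { rewrite mmul_assoc. unfold Z, D, YP. rewrite ZD_YP. reflexivity. }
  assert (E3 : mmul n YP Z kk ll = mmul n Z Sk kk ll).
  { unfold YP, Ym, Pm, Z. rewrite !mmul_assoc. apply (meq_entry n); auto.
    change (mmul n (mprod_down n (IWV p) (S al)) (pZ p)) with (S_mat n al p).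
    unfold Sk. rewrite (Sk_eq' n al k p Hk). reflexivity. }
  assert (E5 : Csub (mmul n (GV n al k p d) Z kk ll) (mmul n (WH n al k p d) Z kk ll) =
               Csub (mmul n YP Z kk ll) (mmul n Sk Z kk ll)).
  { rewrite !mmul_sub_entry_l. apply csum_ext; intros. rewrite GV_WH by auto. reflexivity. }
  assert (E6 : Csub (mmul n Z (GV n al k p d) kk ll) (mmul n Z (WH n al k p d) kk ll) =
               Csub (mmul n Z YP kk ll) (mmul n Z Sk kk ll)).
  { rewrite !mmul_sub_entry_r. apply csum_ext; intros. rewrite GV_WH by auto. reflexivity. }
  rewrite E1, E2.
  transitivity (Cadd (Cmul half (Csub (mmul n Sk Z kk ll) (mmul n Z YP kk ll)))
     (Cmul (Copp half) (Cadd (Csub (mmul n (GV n al k p d) Z kk ll) (mmul n (WH n al k p d) Z kk ll))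
           (Copp (Csub (mmul n Z (GV n al k p d) kk ll) (mmul n Z (WH n al k p d) kk ll)))))).
  { ring. }
  rewrite E5, E6, E3. rewrite half_eq. field. exact two_neq0.
Qed.

Lemma rowmul_mmul : forall n v A B l, rowmul n v (mmul n A B) l = rowmul n (rowmul n v A) B l.
Proof.
  intros. unfold rowmul, mmul.
  rewrite (csum_ext n _ (fun m => csum n (fun r => Cmul (Cmul (v m) (A m r)) (B r l)))).
  - rewrite csum_swap. apply csum_ext; intros. rewrite csum_scal_r. reflexivity.
  - intros. rewrite <- csum_scal_l. apply csum_ext; intros; ring.
Qed.
Lemma mulcol_mmul : forall n w A B k, mulcol n (mmul n A B) w k = mulcol n A (mulcol n B w) k.
Proof.
  intros. unfold mulcol, mmul.
  rewrite (csum_ext n _ (fun m => csum n (fun r => Cmul (A k r) (Cmul (B r m) (w m))))).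
  - rewrite csum_swap. apply csum_ext; intros. rewrite csum_scal_l. reflexivity.
  - intros. rewrite <- csum_scal_r. apply csum_ext; intros; ring.
Qed.
Lemma rowmul_meq : forall n v A B l, meq n A B -> (l < n)%nat -> rowmul n v A l = rowmul n v B l.
Proof. intros. unfold rowmul. apply csum_ext; intros. rewrite H; auto. Qed.
Lemma mulcol_meq : forall n w A B k, meq n A B -> (k < n)%nat -> mulcol n A w k = mulcol n B w k.
Proof. intros. unfold mulcol. apply csum_ext; intros. rewrite H; auto. Qed.
Lemma rowmul_msub : forall n v A B l, rowmul n v (msub A B) l = Csub (rowmul n v A l) (rowmul n v B l).
Proof. intros. unfold rowmul, msub. rewrite <- csum_sub. apply csum_ext; intros; ring. Qed.
Lemma mulcol_msub : forall n w A B k, mulcol n (msub A B) w k = Csub (mulcol n A w k) (mulcol n B w k).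
Proof. intros. unfold mulcol, msub. rewrite <- csum_sub. apply csum_ext; intros; ring. Qed.
Lemma rowmul_mneg : forall n v A l, rowmul n v (mneg A) l = Copp (rowmul n v A l).
Proof. intros. unfold rowmul, mneg. rewrite <- csum_opp. apply csum_ext; intros; ring. Qed.
Lemma mulcol_mneg : forall n w A k, mulcol n (mneg A) w k = Copp (mulcol n A w k).
Proof. intros. unfold mulcol, mneg. rewrite <- csum_opp. apply csum_ext; intros; ring. Qed.
Lemma rowmul_madd : forall n v A B l, rowmul n v (madd A B) l = Cadd (rowmul n v A l) (rowmul n v B l).
Proof. intros. unfold rowmul, madd. rewrite <- csum_add. apply csum_ext; intros; ring. Qed.
Lemma mulcol_madd : forall n w A B k, mulcol n (madd A B) w k = Cadd (mulcol n A w k) (mulcol n B w k).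
Proof. intros. unfold mulcol, madd. rewrite <- csum_add. apply csum_ext; intros; ring. Qed.
Lemma rowmul_id : forall n v l, (l < n)%nat -> rowmul n v mId l = v l.
Proof. intros. unfold rowmul, mId. apply (csum_delta_r n l v); auto. Qed.
Lemma mulcol_id : forall n w k, (k < n)%nat -> mulcol n mId w k = w k.
Proof. intros. unfold mulcol, mId. apply (csum_delta n k w); auto. Qed.
Lemma rowmul_outer : forall n v w u l, rowmul n v (outer w u) l = Cmul (dot n v w) (u l).
Proof. intros. unfold rowmul, outer, dot. rewrite <- csum_scal_r. apply csum_ext; intros; ring. Qed.
Lemma mulcol_outer : forall n w u x k, mulcol n (outer w u) x k = Cmul (w k) (dot n u x).
Proof. intros. unfold mulcol, outer, dot. rewrite <- csum_scal_l. apply csum_ext; intros; ring. Qed.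

Lemma rowmul_msum_o : forall n d v (F : nat -> mat) (c : nat -> Cx) l,
  rowmul n v (msum d (fun a => mscale (c a) (F a))) l = csum d (fun a => Cmul (c a) (rowmul n v (F a) l)).
Proof.
  intros. unfold rowmul, msum, mscale.
  rewrite (csum_ext n _ (fun m => csum d (fun a => Cmul (c a) (Cmul (v m) (F a m l))))).
  - rewrite csum_swap. apply csum_ext; intros. rewrite <- csum_scal_l. reflexivity.
  - intros. rewrite <- csum_scal_l. apply csum_ext; intros; ring.
Qed.
Lemma mulcol_msum_o : forall n d w (F : nat -> mat) (c : nat -> Cx) k,
  mulcol n (msum d (fun a => mscale (c a) (F a))) w k = csum d (fun a => Cmul (c a) (mulcol n (F a) w k)).
Proof.
  intros. unfold mulcol, msum, mscale.
  rewrite (csum_ext n _ (fun m => csum d (fun a => Cmul (c a) (Cmul (F a k m) (w m))))).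
  - rewrite csum_swap. apply csum_ext; intros. rewrite <- csum_scal_l. reflexivity.
  - intros. rewrite <- csum_scal_r. apply csum_ext; intros; ring.
Qed.

Lemma dot_comm : forall n v w, dot n v w = dot n w v.
Proof. intros; unfold dot; apply csum_ext; intros; ring. Qed.

Lemma tau_eq : forall n al k p a, dot n (pV p a) (gcol n al k p a) = dot n (hrow n al k p a) (pW p a).
Proof.
  intros. unfold dot, gcol, hrow. destruct (Nat.leb a al).
  - unfold mulcol, rowmul.
    rewrite (csum_ext n _ (fun j => csum n (fun m => Cmul (pV p a j) (Cmul (Gm n al k p a j m) (pW p a m)))))
      by (intros; rewrite csum_scal_l; reflexivity).
    rewrite csum_swap. apply csum_ext; intros. rewrite <- csum_scal_r. apply csum_ext; intros; ring.
  - transitivity C0; [apply csum_zero'|symmetry; apply csum_zero']; intros; ring.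
Qed.

Lemma o_anti : forall a b, o a b = Copp (o b a).
Proof.
  intros. destruct (lt_eq_lt_dec a b) as [[H|H]|H].
  - rewrite o_lt, o_gt by auto. ring.
  - subst. rewrite o_eq. ring.
  - rewrite o_gt, o_lt by auto. ring.
Qed.

Lemma rowmul_um_b : forall n al k p b l, (b <= al)%nat -> (l < n)%nat ->
  rowmul n (pV p b) (um n al k p b) l =
  Cadd (hrow n al k p b l) (Cmul (dot n (pV p b) (gcol n al k p b)) (pV p b l)).
Proof.
  intros. rewrite (rowmul_meq n _ _ _ l (um_Gm_l n al k p b H)) by auto.
  rewrite IWV_outer, mmul_madd_r. rewrite rowmul_madd.
  rewrite (rowmul_meq n _ _ (Gm n al k p b) l (mmul_id_r n _)) by auto.
  rewrite (rowmul_meq n _ _ _ l (outer_mmul_r n _ _ _)) by auto.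
  rewrite rowmul_outer. unfold hrow, gcol. apply Nat.leb_le in H. rewrite H.
  reflexivity.
Qed.

Lemma rowmul_um_Sb : forall n al k p b l, (b <= al)%nat -> (l < n)%nat ->
  rowmul n (pV p b) (um n al k p (S b)) l =
  Cadd (hrow n al k p b l) (Cmul (dot n (pV p b) (pW p b)) (hrow n al k p b l)).
Proof.
  intros. rewrite (rowmul_meq n _ _ _ l (um_Gm_r n al k p b)) by auto.
  rewrite IWV_outer, mmul_madd_l. rewrite rowmul_madd.
  rewrite (rowmul_meq n _ _ (Gm n al k p b) l (mmul_id_l n _)) by auto.
  rewrite (rowmul_meq n _ _ _ l (outer_mmul_l n _ _ _)) by auto.
  rewrite rowmul_outer. unfold hrow. apply Nat.leb_le in H. rewrite H. reflexivity.
Qed.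

Lemma mulcol_um_b : forall n al k p b kk, (b <= al)%nat -> (kk < n)%nat ->
  mulcol n (um n al k p b) (pW p b) kk =
  Cadd (gcol n al k p b kk) (Cmul (gcol n al k p b kk) (dot n (pV p b) (pW p b))).
Proof.
  intros. rewrite (mulcol_meq n _ _ _ kk (um_Gm_l n al k p b H)) by auto.
  rewrite IWV_outer, mmul_madd_r. rewrite mulcol_madd.
  rewrite (mulcol_meq n _ _ (Gm n al k p b) kk (mmul_id_r n _)) by auto.
  rewrite (mulcol_meq n _ _ _ kk (outer_mmul_r n _ _ _)) by auto.
  rewrite mulcol_outer. unfold gcol. apply Nat.leb_le in H. rewrite H. reflexivity.
Qed.

Lemma mulcol_um_Sb : forall n al k p b kk, (b <= al)%nat -> (kk < n)%nat ->
  mulcol n (um n al k p (S b)) (pW p b) kk =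
  Cadd (gcol n al k p b kk) (Cmul (pW p b kk) (dot n (hrow n al k p b) (pW p b))).
Proof.
  intros. rewrite (mulcol_meq n _ _ _ kk (um_Gm_r n al k p b)) by auto.
  rewrite IWV_outer, mmul_madd_l. rewrite mulcol_madd.
  rewrite (mulcol_meq n _ _ (Gm n al k p b) kk (mmul_id_l n _)) by auto.
  rewrite (mulcol_meq n _ _ _ kk (outer_mmul_l n _ _ _)) by auto.
  rewrite mulcol_outer. unfold gcol, hrow. apply Nat.leb_le in H. rewrite H.
  reflexivity.
Qed.

Lemma Q1 : forall n (D : mat) (w : nat -> Cx) l, (l < n)%nat ->
  csum n (fun i => csum n (fun j => Cmul (D j i) (Cmul (w j) (dlt i l)))) = rowmul n w D l.
Proof.
  intros. rewrite (csum_ext n _ (fun i => Cmul (dlt l i) (csum n (fun j => Cmul (w j) (D j i))))).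
  - apply (csum_delta n l (fun i => csum n (fun j => Cmul (w j) (D j i)))); auto.
  - intros. rewrite <- csum_scal_l. apply csum_ext; intros. rewrite dlt_sym. ring.
Qed.

Lemma Q2 : forall n (D A : mat) (v : nat -> Cx) l,
  csum n (fun i => csum n (fun j => Cmul (D j i) (Cmul (v j) (A i l)))) = rowmul n (rowmul n v D) A l.
Proof.
  intros. unfold rowmul at 1. apply csum_ext; intros. unfold rowmul. rewrite <- csum_scal_r.
  apply csum_ext; intros; ring.
Qed.

Lemma sum_dlt_r : forall n (h : nat -> Cx) ll, (ll < n)%nat -> csum n (fun j => Cmul (h j) (dlt j ll)) = h ll.
Proof. intros. apply (csum_delta_r n ll h); auto. Qed.

Definition oE (n al k : nat) (p : point) (d b : nat) : mat := msum d (fun a => mscale (o b a) (Em n al k p a)).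

Lemma rowmul_oE : forall n al k p d b v l,
  rowmul n v (oE n al k p d b) l =
  csum d (fun a => Cmul (o b a) (Csub (Cmul (dot n v (gcol n al k p a)) (pV p a l))
                                       (Cmul (dot n v (pW p a)) (hrow n al k p a l)))).
Proof.
  intros. unfold oE. rewrite rowmul_msum_o. apply csum_ext; intros. unfold Em.
  rewrite rowmul_msub, !rowmul_outer. reflexivity.
Qed.

Lemma br_V : forall n d al k p b ll, (al < d)%nat -> (k >= 1)%nat -> (b < d)%nat -> (ll < n)%nat ->
  clsum (coords n d) (fun a => Cmul (dHv n al k p a) (br n p a (cV b ll))) =
  if Nat.leb b al then Copp (rowmul n (pV p b) (Skm n al k p) ll) else C0.
Proof.
  intros n d al k p b ll Hd Hk Hb Hll.
  rewrite clsum_coords. rewrite (dHX_zero n).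
  set (Z := pZ p). set (D := Dm n al k p). set (v := pV p b).
  assert (HZ : csum n (fun i => csum n (fun j => Cmul (dHv n al k p (cZ i j)) (br n p (cZ i j) (cV b ll)))) =
     Cmul half (Csub (rowmul n (rowmul n v Z) D ll) (rowmul n (rowmul n v D) Z ll))).
  { rewrite (dsum_comb2 n half
      (fun i j => Cmul (D j i) (Cmul (rowmul n v Z j) (dlt i ll)))
      (fun i j => Cmul (D j i) (Cmul (v j) (Z i ll)))).
    - unfold dsum. rewrite Q1, Q2 by auto. reflexivity.
    - intros. simpl. unfold brUV. fold Z D v. ring. }
  set (g := gcol n al k p). set (h := hrow n al k p).
  assert (HV : csum d (fun a => csum n (fun j => Cmul (dHv n al k p (cV a j)) (br n p (cV a j) (cV b ll)))) =
     csum d (fun a => Cadd (Cmul (Cmul half (Cmul (o b a) (pV p a ll))) (dot n v (g a)))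
                           (Cmul (Cmul half (Cmul (o b a) (v ll))) (dot n (pV p a) (g a))))).
  { apply csum_ext; intros a Ha.
    rewrite (csum_ext n _ (fun j => Cadd (Cmul (Cmul half (Cmul (o b a) (pV p a ll))) (Cmul (v j) (g a j)))
                                       (Cmul (Cmul half (Cmul (o b a) (v ll))) (Cmul (pV p a j) (g a j))))).
    - rewrite csum_add, !csum_scal_l. reflexivity.
    - intros. simpl. fold v g. ring. }
  assert (HW : csum d (fun a => csum n (fun j => Cmul (dHv n al k p (cW a j)) (br n p (cW a j) (cV b ll)))) =
     csum d (fun a => Cadd (Cadd
        (Cmul (Csub (Copp (Cmul (dlt b a) (Cadd C1 (Cmul half (dot n v (pW p b))))))
                    (Cmul half (Cmul (o b a) (dot n v (pW p a))))) (h a ll))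
        (Cmul (Copp (Cmul (dlt b a) (Cmul half (v ll)))) (dot n (h a) (pW p b))))
        (Cmul (Copp (Cmul half (Cmul (o b a) (v ll)))) (dot n (h a) (pW p a))))).
  { apply csum_ext; intros a Ha.
    rewrite (csum_ext n _ (fun j => Cadd (Cadd
        (Cmul (Csub (Copp (Cmul (dlt b a) (Cadd C1 (Cmul half (dot n v (pW p b))))))
                    (Cmul half (Cmul (o b a) (dot n v (pW p a))))) (Cmul (h a j) (dlt j ll)))
        (Cmul (Copp (Cmul (dlt b a) (Cmul half (v ll)))) (Cmul (h a j) (pW p b j))))
        (Cmul (Copp (Cmul half (Cmul (o b a) (v ll)))) (Cmul (h a j) (pW p a j))))).
    - rewrite !csum_add, !csum_scal_l. rewrite sum_dlt_r by auto. reflexivity.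
    - intros. simpl. unfold brVW. fold v h. ring. }
  rewrite HZ, HV, HW.
  assert (HVW : Cadd (csum d (fun a => Cadd (Cmul (Cmul half (Cmul (o b a) (pV p a ll))) (dot n v (g a)))
                           (Cmul (Cmul half (Cmul (o b a) (v ll))) (dot n (pV p a) (g a)))))
     (csum d (fun a => Cadd (Cadd
        (Cmul (Csub (Copp (Cmul (dlt b a) (Cadd C1 (Cmul half (dot n v (pW p b))))))
                    (Cmul half (Cmul (o b a) (dot n v (pW p a))))) (h a ll))
        (Cmul (Copp (Cmul (dlt b a) (Cmul half (v ll)))) (dot n (h a) (pW p b))))
        (Cmul (Copp (Cmul half (Cmul (o b a) (v ll)))) (dot n (h a) (pW p a))))) =
     Csub (Cmul half (rowmul n v (oE n al k p d b) ll))
          (Cadd (Cadd (h b ll) (Cmul half (Cmul (dot n (h b) (pW p b)) (v ll))))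
                (Cmul half (Cmul (h b ll) (dot n v (pW p b)))))).
  { rewrite rowmul_oE. rewrite <- csum_add.
    rewrite (csum_ext d _ (fun a => Csub (Cmul half (Cmul (o b a) (Csub (Cmul (dot n v (g a)) (pV p a ll))
                                       (Cmul (dot n v (pW p a)) (h a ll)))))
              (Cmul (dlt b a) (Cadd (Cadd (h a ll) (Cmul half (Cmul (dot n (h a) (pW p b)) (v ll))))
                (Cmul half (Cmul (h a ll) (dot n v (pW p b)))))))).
    - rewrite csum_sub, csum_scal_l.
      rewrite (csum_delta d b (fun a => Cadd (Cadd (h a ll) (Cmul half (Cmul (dot n (h a) (pW p b)) (v ll))))
                (Cmul half (Cmul (h a ll) (dot n v (pW p b)))))) by auto.
      reflexivity.
    - intros a Ha. unfold g, h. rewrite tau_eq. ring. }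
  match goal with |- Cadd (Cadd (Cadd ?a0 ?x) ?y) ?z = _ =>
    replace (Cadd (Cadd (Cadd a0 x) y) z) with (Cadd a0 (Cadd x (Cadd y z))) by ring end.
  rewrite HVW. clear HVW HV HW HZ.
  assert (E1 : rowmul n (rowmul n v Z) D ll = rowmul n v (mmul n (Ym n al k p) (Pm n al p)) ll).
  { rewrite <- rowmul_mmul. unfold Z, D. rewrite ZD_YP. reflexivity. }
  assert (E2 : rowmul n (rowmul n v D) Z ll = rowmul n v (Skm n al k p) ll).
  { rewrite <- rowmul_mmul. apply rowmul_meq; auto. apply DZ_Sk; auto. }
  rewrite E1, E2.
  unfold oE. destruct (Nat.leb_spec b al) as [Hba|Hba].
  - rewrite (rowmul_meq n v _ _ ll (oEsum_le n al k p d b Hd Hba)) by auto.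
    rewrite !rowmul_msub. rewrite PY_Sk by auto.
    unfold v. rewrite rowmul_um_b, rowmul_um_Sb by auto. fold v. fold h g.
    unfold v, g, h. rewrite tau_eq.
    rewrite half_eq. field. exact two_neq0.
  - rewrite (rowmul_meq n v _ _ ll (oEsum_gt n al k p d b Hd Hba)) by auto.
    rewrite rowmul_mneg, rowmul_msub. rewrite PY_Sk by auto.
    assert (Hh : forall j, h b j = C0).
    { intros. unfold h, hrow. destruct (Nat.leb_spec b al); [lia|reflexivity]. }
    rewrite Hh. unfold dot. rewrite csum_zero' by (intros; rewrite Hh; ring).
    rewrite half_eq. field. exact two_neq0.
Qed.

Lemma R1 : forall n (D : mat) (w : nat -> Cx) k, (k < n)%nat ->
  csum n (fun i => csum n (fun j => Cmul (D j i) (Cmul (dlt k j) (w i)))) = mulcol n D w k.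
Proof.
  intros. unfold mulcol. apply csum_ext; intros i Hi.
  rewrite (csum_ext n _ (fun j => Cmul (dlt k j) (Cmul (D j i) (w i)))) by (intros; ring).
  apply (csum_delta n k (fun j => Cmul (D j i) (w i))); auto.
Qed.

Lemma R2 : forall n (D A : mat) (w : nat -> Cx) k,
  csum n (fun i => csum n (fun j => Cmul (D j i) (Cmul (A k j) (w i)))) = mulcol n A (mulcol n D w) k.
Proof.
  intros. rewrite csum_swap. unfold mulcol at 1. apply csum_ext; intros. unfold mulcol.
  rewrite <- csum_scal_l. apply csum_ext; intros; ring.
Qed.

Lemma mulcol_oE : forall n al k p d b w kk,
  mulcol n (oE n al k p d b) w kk =
  csum d (fun a => Cmul (o b a) (Csub (Cmul (gcol n al k p a kk) (dot n (pV p a) w))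
                                       (Cmul (pW p a kk) (dot n (hrow n al k p a) w)))).
Proof.
  intros. unfold oE. rewrite mulcol_msum_o. apply csum_ext; intros. unfold Em.
  rewrite mulcol_msub, !mulcol_outer. reflexivity.
Qed.

Lemma br_W : forall n d al k p b kk, (al < d)%nat -> (k >= 1)%nat -> (b < d)%nat -> (kk < n)%nat ->
  clsum (coords n d) (fun a => Cmul (dHv n al k p a) (br n p a (cW b kk))) =
  if Nat.leb b al then mulcol n (Skm n al k p) (pW p b) kk else C0.
Proof.
  intros n d al k p b kk Hd Hk Hb Hkk.
  rewrite clsum_coords. rewrite (dHX_zero n).
  set (Z := pZ p). set (D := Dm n al k p). set (w := pW p b).
  assert (HZ : csum n (fun i => csum n (fun j => Cmul (dHv n al k p (cZ i j)) (br n p (cZ i j) (cW b kk)))) =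
     Cmul half (Csub (mulcol n D (mulcol n Z w) kk) (mulcol n Z (mulcol n D w) kk))).
  { rewrite (dsum_comb2 n half
      (fun i j => Cmul (D j i) (Cmul (dlt kk j) (mulcol n Z w i)))
      (fun i j => Cmul (D j i) (Cmul (Z kk j) (w i)))).
    - unfold dsum. rewrite R1, R2 by auto. reflexivity.
    - intros. simpl. unfold brUW. fold Z D w. ring. }
  set (g := gcol n al k p). set (h := hrow n al k p).
  assert (HV : csum d (fun a => csum n (fun j => Cmul (dHv n al k p (cV a j)) (br n p (cV a j) (cW b kk)))) =
     csum d (fun a => Cadd (Cmul (Cadd (Cmul (dlt b a) (Cadd C1 (Cmul half (dot n (pV p a) (pW p a)))))
                                       (Cmul half (Cmul (o a b) (dot n (pV p a) w)))) (g a kk))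
                           (Cmul (Cadd (Cmul (dlt b a) (Cmul half (pW p a kk))) (Cmul half (Cmul (o a b) (w kk))))
                                 (dot n (pV p a) (g a))))).
  { apply csum_ext; intros a Ha.
    rewrite (csum_ext n _ (fun j => Cadd (Cmul (Cadd (Cmul (dlt b a) (Cadd C1 (Cmul half (dot n (pV p a) (pW p a)))))
                                       (Cmul half (Cmul (o a b) (dot n (pV p a) w)))) (Cmul (g a j) (dlt kk j)))
                           (Cmul (Cadd (Cmul (dlt b a) (Cmul half (pW p a kk))) (Cmul half (Cmul (o a b) (w kk))))
                                 (Cmul (pV p a j) (g a j))))).
    - rewrite csum_add, !csum_scal_l.
      rewrite (csum_ext n (fun j => Cmul (g a j) (dlt kk j)) (fun j => Cmul (g a j) (Cmul (dlt kk j) C1)))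
        by (intros; ring).
      rewrite S1 by auto. change (csum n (fun i => Cmul (pV p a i) (g a i))) with (dot n (pV p a) (g a)). ring.
    - intros. simpl. unfold brVW. fold w g. rewrite (dlt_sym a b). ring. }
  assert (HW : csum d (fun a => csum n (fun j => Cmul (dHv n al k p (cW a j)) (br n p (cW a j) (cW b kk)))) =
     csum d (fun a => Cadd (Cmul (Cmul half (Cmul (o b a) (w kk))) (dot n (h a) (pW p a)))
                           (Cmul (Cmul half (Cmul (o b a) (pW p a kk))) (dot n (h a) w)))).
  { apply csum_ext; intros a Ha.
    rewrite (csum_ext n _ (fun j => Cadd (Cmul (Cmul half (Cmul (o b a) (w kk))) (Cmul (h a j) (pW p a j)))
                           (Cmul (Cmul half (Cmul (o b a) (pW p a kk))) (Cmul (h a j) (w j))))).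
    - rewrite csum_add, !csum_scal_l. reflexivity.
    - intros. simpl. fold w h. ring. }
  rewrite HZ, HV, HW.
  assert (HVW : Cadd (csum d (fun a => Cadd (Cmul (Cadd (Cmul (dlt b a) (Cadd C1 (Cmul half (dot n (pV p a) (pW p a)))))
                                       (Cmul half (Cmul (o a b) (dot n (pV p a) w)))) (g a kk))
                           (Cmul (Cadd (Cmul (dlt b a) (Cmul half (pW p a kk))) (Cmul half (Cmul (o a b) (w kk))))
                                 (dot n (pV p a) (g a)))))
     (csum d (fun a => Cadd (Cmul (Cmul half (Cmul (o b a) (w kk))) (dot n (h a) (pW p a)))
                           (Cmul (Cmul half (Cmul (o b a) (pW p a kk))) (dot n (h a) w)))) =
     Csub (Cadd (Cmul (Cadd C1 (Cmul half (dot n (pV p b) w))) (g b kk))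
                (Cmul (Cmul half (w kk)) (dot n (pV p b) (g b))))
          (Cmul half (mulcol n (oE n al k p d b) w kk))).
  { rewrite mulcol_oE. rewrite <- csum_add.
    rewrite (csum_ext d _ (fun a => Csub (Cmul (dlt b a) (Cadd (Cmul (Cadd C1 (Cmul half (dot n (pV p a) (pW p a)))) (g a kk))
                (Cmul (Cmul half (pW p a kk)) (dot n (pV p a) (g a)))))
              (Cmul half (Cmul (o b a) (Csub (Cmul (g a kk) (dot n (pV p a) w)) (Cmul (pW p a kk) (dot n (h a) w))))))).
    - rewrite csum_sub, csum_scal_l.
      rewrite (csum_delta d b (fun a => Cadd (Cmul (Cadd C1 (Cmul half (dot n (pV p a) (pW p a)))) (g a kk))
                (Cmul (Cmul half (pW p a kk)) (dot n (pV p a) (g a))))) by auto.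
      reflexivity.
    - intros a Ha. unfold g, h. rewrite tau_eq. rewrite (o_anti a b). ring. }
  match goal with |- Cadd (Cadd (Cadd ?a0 ?x) ?y) ?z = _ =>
    replace (Cadd (Cadd (Cadd a0 x) y) z) with (Cadd a0 (Cadd x (Cadd y z))) by ring end.
  rewrite HVW. clear HVW HV HW HZ.
  assert (E1 : mulcol n D (mulcol n Z w) kk = mulcol n (Skm n al k p) w kk).
  { rewrite <- mulcol_mmul. apply mulcol_meq; auto. apply DZ_Sk; auto. }
  assert (E2 : mulcol n Z (mulcol n D w) kk = mulcol n (mmul n (Ym n al k p) (Pm n al p)) w kk).
  { rewrite <- mulcol_mmul. unfold Z, D. rewrite ZD_YP. reflexivity. }
  rewrite E1, E2.
  unfold oE. destruct (Nat.leb_spec b al) as [Hba|Hba].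
  - rewrite (mulcol_meq n w _ _ kk (oEsum_le n al k p d b Hd Hba)) by auto.
    rewrite !mulcol_msub. rewrite PY_Sk by auto.
    unfold w. rewrite mulcol_um_b, mulcol_um_Sb by auto.
    unfold g, h. rewrite tau_eq.
    rewrite half_eq. field. exact two_neq0.
  - rewrite (mulcol_meq n w _ _ kk (oEsum_gt n al k p d b Hd Hba)) by auto.
    rewrite mulcol_mneg, mulcol_msub. rewrite PY_Sk by auto.
    assert (Hg : forall j, g b j = C0).
    { intros. unfold g, gcol. destruct (Nat.leb_spec b al); [lia|reflexivity]. }
    rewrite Hg. unfold dot. rewrite (csum_zero' n (fun m => Cmul (pV p b m) (g b m))) by (intros; rewrite Hg; ring).
    rewrite half_eq. field. exact two_neq0.
Qed.

Add Parametric Morphism n : (mpow n) with signature meq n ==> eq ==> meq n as mpow_mor.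
Proof. intros A B H m. induction m; simpl; [reflexivity|]. intros i j Hi Hj. unfold mmul. apply csum_ext; intros. rewrite H, IHm; auto. Qed.

Add Parametric Morphism n : (mtr n) with signature meq n ==> eq as mtr_mor.
Proof. intros A B H. unfold mtr. apply csum_ext; intros. apply H; auto. Qed.

Lemma mtr_comm : forall n A B, mtr n (mmul n A B) = mtr n (mmul n B A).
Proof. intros. unfold mtr, mmul. rewrite csum_swap. apply csum_ext; intros. apply csum_ext; intros. ring. Qed.

Lemma mtr_add : forall n A B, mtr n (madd A B) = Cadd (mtr n A) (mtr n B).
Proof. intros. unfold mtr, madd. apply csum_add. Qed.

Lemma mtr_zero : forall n, mtr n mzero = C0.
Proof. intros. unfold mtr, mzero. apply csum_zero. Qed.

Definition mderiv (n : nat) (F : Cx -> mat) (z0 : Cx) (F' : mat) : Prop :=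
  forall i j, (i < n)%nat -> (j < n)%nat -> has_cderiv (fun z => F z i j) z0 (F' i j).

Lemma mderiv_affine : forall n S E z0, mderiv n (fun z => madd S (mscale z E)) z0 E.
Proof.
  intros n S E z0 i j Hi Hj. unfold madd, mscale.
  replace (E i j) with (Cadd C0 (Cmul (E i j) C1)) by ring.
  apply cderiv_add; [apply cderiv_const|].
  eapply cderiv_ext; [|apply cderiv_scal, cderiv_id]. intros; simpl; ring.
Qed.

Lemma mderiv_const : forall n M z0, mderiv n (fun _ => M) z0 mzero.
Proof. intros n M z0 i j Hi Hj. apply cderiv_const. Qed.

Lemma mderiv_mmul : forall n F G z0 F' G', mderiv n F z0 F' -> mderiv n G z0 G' ->
  mderiv n (fun z => mmul n (F z) (G z)) z0 (madd (mmul n F' (G z0)) (mmul n (F z0) G')).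
Proof.
  intros n F G z0 F' G' HF HG i j Hi Hj. unfold mmul at 1, madd. unfold mmul.
  rewrite <- csum_add. apply cderiv_csum. intros l Hl. apply cderiv_mul; auto.
Qed.

Fixpoint dmpow (n : nat) (Q E : mat) (m : nat) : mat :=
  match m with O => mzero | S m' => madd (mmul n E (mpow n Q m')) (mmul n Q (dmpow n Q E m')) end.

Lemma mderiv_mpow : forall n F z0 F' m, mderiv n F z0 F' ->
  mderiv n (fun z => mpow n (F z) m) z0 (dmpow n (F z0) F' m).
Proof.
  intros n F z0 F' m HF. induction m; simpl.
  - apply mderiv_const.
  - apply mderiv_mmul; auto.
Qed.

Lemma mderiv_mtr : forall n F z0 F', mderiv n F z0 F' -> has_cderiv (fun z => mtr n (F z)) z0 (mtr n F').
Proof. intros. unfold mtr. apply cderiv_csum. intros; apply H; auto. Qed.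

Lemma mpow_S_r : forall n Q m, meq n (mpow n Q (S m)) (mmul n (mpow n Q m) Q).
Proof. intros. simpl. apply mpow_comm. Qed.

Lemma dmpow_trace : forall n Q E m B, meq n (mmul n B Q) (mmul n Q B) ->
  mtr n (mmul n B (dmpow n Q E m)) = Cmul (RtoC (INR m)) (mtr n (mmul n (mmul n (mpow n Q (m - 1)) B) E)).
Proof.
  intros n Q E m. induction m; intros B HB.
  - simpl. rewrite mmul_zero_r, mtr_zero. unfold RtoC; cxe; ring.
  - simpl dmpow. rewrite mmul_madd_r, mtr_add.
    rewrite <- (mmul_assoc n B Q). rewrite (IHm (mmul n B Q)).
    2:{ rewrite HB at 1. rewrite mmul_assoc. reflexivity. }
    rewrite <- (mmul_assoc n B E). rewrite (mtr_comm n (mmul n B E)). rewrite <- (mmul_assoc n (mpow n Q m) B E).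
    replace (S m - 1)%nat with m by lia.
    destruct m.
    + simpl. unfold RtoC; cxe; ring.
    + replace (S m - 1)%nat with m by lia.
      assert (Hm : meq n (mmul n (mpow n Q m) (mmul n B Q)) (mmul n (mpow n Q (S m)) B)).
      { rewrite HB. rewrite <- mmul_assoc. rewrite <- mpow_S_r. reflexivity. }
      assert (Ht : mtr n (mmul n (mmul n (mpow n Q m) (mmul n B Q)) E) = mtr n (mmul n (mmul n (mpow n Q (S m)) B) E))
        by (rewrite Hm; reflexivity).
      rewrite Ht. rewrite !S_INR.
      set (x := mtr n (mmul n (mmul n (mpow n Q (S m)) B) E)).
      fold x. unfold RtoC; cxe; ring.
Qed.

Lemma mpow_deriv_trace : forall n Q E k, (k >= 1)%nat ->
  has_cderiv (fun z => Cmul (RtoC (/ INR k)) (mtr n (mpow n (madd Q (mscale z E)) k))) C0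
    (mtr n (mmul n (mpow n Q (k - 1)) E)).
Proof.
  intros n Q E k Hk.
  replace (mtr n (mmul n (mpow n Q (k - 1)) E)) with
    (Cmul (RtoC (/ INR k)) (mtr n (dmpow n (madd Q (mscale C0 E)) E k))).
  - apply cderiv_scal. apply mderiv_mtr. apply mderiv_mpow. apply mderiv_affine.
  - assert (HS : meq n (madd Q (mscale C0 E)) Q).
    { intros i j _ _. unfold madd, mscale. ring. }
    assert (Hd : forall m, meq n (dmpow n (madd Q (mscale C0 E)) E m) (dmpow n Q E m)).
    { induction m; cbn [dmpow]; [reflexivity|]. rewrite IHm. rewrite HS. reflexivity. }
    rewrite (mtr_mor n _ _ (Hd k)).
    assert (Hid : mtr n (dmpow n Q E k) = mtr n (mmul n mId (dmpow n Q E k)))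
      by (apply mtr_mor; rewrite mmul_id_l; reflexivity).
    rewrite Hid. rewrite dmpow_trace.
    2:{ rewrite mmul_id_l, mmul_id_r. reflexivity. }
    assert (Hid2 : mtr n (mmul n (mmul n (mpow n Q (k - 1)) mId) E) = mtr n (mmul n (mpow n Q (k - 1)) E))
      by (apply mtr_mor; rewrite mmul_id_r; reflexivity).
    rewrite Hid2.
    assert (INR k <> 0) by (apply not_0_INR; lia).
    set (x := mtr n (mmul n (mpow n Q (k - 1)) E)). unfold RtoC.
    set (r := INR k) in *. cxe; field; auto.
Qed.

Definition ev (j : nat) : nat -> Cx := fun r => dlt r j.

Lemma addat_eq : forall F a b z, addat F a b z = fun x y => Cadd (F x y) (Cmul z (Cmul (dlt x a) (dlt y b))).
Proof.
  intros. extensionality x; extensionality y. unfold addat, dlt.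
  destruct (Nat.eqb x a); destruct (Nat.eqb y b); simpl; ring.
Qed.

Lemma mtr_outer : forall n w u M, mtr n (mmul n (outer w u) M) = csum n (fun r => Cmul (w r) (rowmul n u M r)).
Proof. intros. unfold mtr, mmul, outer, rowmul. apply csum_ext; intros. rewrite <- csum_scal_l. apply csum_ext; intros; ring. Qed.

Lemma rowmul_ev : forall n j M r, (j < n)%nat -> rowmul n (ev j) M r = M j r.
Proof. intros. unfold rowmul, ev. rewrite (csum_ext n _ (fun m => Cmul (dlt j m) (M m r))) by (intros; rewrite dlt_sym; ring).
  apply (csum_delta n j (fun m => M m r)); auto. Qed.

Lemma S_mat_update : forall n al p p' a z O, (a <= al)%nat ->
  pZ p' = pZ p ->
  (forall b, b <> a -> meq n (IWV p' b) (IWV p b)) ->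
  meq n (IWV p' a) (madd (IWV p a) (mscale z O)) ->
  meq n (S_mat n al p') (madd (S_mat n al p)
     (mscale z (mmul n (mmul n (mmul n (Qge n al p (S a)) O) (Plt n p a)) (pZ p)))).
Proof.
  intros n al p p' a z O Ha HZ Hb HA.
  assert (HQ : meq n (Qge n al p' (S a)) (Qge n al p (S a))).
  { unfold Qge. apply mprod_down_ext_meq. intros. apply Hb. lia. }
  assert (HP : meq n (Plt n p' a) (Plt n p a)).
  { unfold Plt. apply mprod_down_ext_meq. intros. apply Hb. lia. }
  unfold S_mat. rewrite HZ.
  change (mprod_down n (IWV p') (S al)) with (Pm n al p').
  change (mprod_down n (IWV p) (S al)) with (Pm n al p).
  rewrite (Pm_split n al p' a) by lia. rewrite (Pm_split n al p a) by lia.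
  rewrite (Qge_peel n al p' a Ha). rewrite (Qge_peel n al p a Ha).
  rewrite HQ, HP, HA.
  rewrite mmul_madd_r, mmul_madd_l, mmul_madd_l.
  rewrite !mmul_mscale_r, !mmul_mscale_l. rewrite !mmul_assoc. reflexivity.
Qed.

Lemma IWV_upd_V_other : forall p a j z b, b <> a -> IWV (upd p (cV a j) z) b = IWV p b.
Proof.
  intros. unfold IWV. simpl. rewrite addat_eq. extensionality x; extensionality y.
  unfold madd. rewrite (dlt_neq b a H). f_equal. ring.
Qed.
Lemma IWV_upd_W_other : forall p a j z b, b <> a -> IWV (upd p (cW a j) z) b = IWV p b.
Proof.
  intros. unfold IWV. simpl. rewrite addat_eq. extensionality x; extensionality y.
  unfold madd. rewrite (dlt_neq b a H). f_equal. ring.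
Qed.

Lemma IWV_upd_V_same : forall n p a j z,
  meq n (IWV (upd p (cV a j) z) a) (madd (IWV p a) (mscale z (outer (pW p a) (ev j)))).
Proof.
  intros n p a j z x y _ _. unfold IWV. simpl. rewrite addat_eq. unfold madd, mscale, outer, ev.
  rewrite dlt_eq. ring.
Qed.
Lemma IWV_upd_W_same : forall n p a j z,
  meq n (IWV (upd p (cW a j) z) a) (madd (IWV p a) (mscale z (outer (ev j) (pV p a)))).
Proof.
  intros n p a j z x y _ _. unfold IWV. simpl. rewrite addat_eq. unfold madd, mscale, outer, ev.
  rewrite dlt_eq. ring.
Qed.

Lemma mtr_cyc3 : forall n T Q O P Z,
  mtr n (mmul n T (mmul n (mmul n (mmul n Q O) P) Z)) = mtr n (mmul n O (mmul n (mmul n (mmul n P Z) T) Q)).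
Proof.
  intros. rewrite mtr_comm. rewrite !mmul_assoc. rewrite mtr_comm. rewrite !mmul_assoc. reflexivity.
Qed.

Lemma Gm_eq : forall n al k p a,
  mmul n (mmul n (mmul n (Plt n p a) (pZ p)) (Tm n al k p)) (Qge n al p (S a)) = Gm n al k p a.
Proof. intros. unfold Gm, Ym. rewrite !mmul_assoc. reflexivity. Qed.

Lemma Ham_deriv_gen : forall n al k p p_ E, (k >= 1)%nat ->
  (forall z, meq n (S_mat n al (p_ z)) (madd (S_mat n al p) (mscale z E))) ->
  has_cderiv (fun z => Ham n al k (p_ z)) C0 (mtr n (mmul n (Tm n al k p) E)).
Proof.
  intros n al k p p_ E Hk HE.
  eapply cderiv_ext; [| apply (mpow_deriv_trace n (S_mat n al p) E k Hk)].
  intros z. unfold Ham. f_equal. apply mtr_mor. rewrite (HE z). reflexivity.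
Qed.

Lemma IWV_updZ : forall p i j z, IWV (upd p (cZ i j) z) = IWV p.
Proof. reflexivity. Qed.

Lemma Ham_deriv_gen' : forall n al k p p_ E L, (k >= 1)%nat ->
  (forall z, meq n (S_mat n al (p_ z)) (madd (S_mat n al p) (mscale z E))) ->
  L = mtr n (mmul n (Tm n al k p) E) ->
  has_cderiv (fun z => Ham n al k (p_ z)) C0 L.
Proof. intros. subst L. apply Ham_deriv_gen; auto. Qed.

Lemma S_mat_same : forall n al p p', pZ p' = pZ p -> (forall b, (b <= al)%nat -> meq n (IWV p' b) (IWV p b)) ->
  meq n (S_mat n al p') (S_mat n al p).
Proof.
  intros. unfold S_mat. rewrite H. rewrite (mprod_down_ext_meq n (IWV p') (IWV p)); [reflexivity|].
  intros; apply H0; lia.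
Qed.

Lemma meq_plus_zero : forall n A z, meq n A (madd A (mscale z mzero)).
Proof. intros n A z i j _ _. unfold madd, mscale, mzero. ring. Qed.

Lemma mtr_T_zero : forall n T, mtr n (mmul n T mzero) = C0.
Proof. intros. rewrite mmul_zero_r. apply mtr_zero. Qed.

Lemma Ham_deriv : forall n d al k p c, (al < d)%nat -> (k >= 1)%nat -> In c (coords n d) ->
  has_cderiv (fun z => Ham n al k (upd p c z)) C0 (dHv n al k p c).
Proof.
  intros n d al k p c Hd Hk Hc. apply in_coords in Hc.
  destruct c as [i j|i j|a j|a j]; simpl dHv; destruct Hc as [H1 H2].
  - apply (Ham_deriv_gen' n al k p _ mzero C0 Hk).
    + intros z. apply meq_plus_zero.
    + symmetry; apply mtr_T_zero.
  - replace (Dm n al k p j i) with (mtr n (mmul n (Tm n al k p) (mmul n (Pm n al p) (outer (ev i) (ev j))))).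
    + apply Ham_deriv_gen; [exact Hk|]. intros z. unfold S_mat. rewrite (IWV_updZ p i j z). cbn [upd pZ]. rewrite addat_eq. unfold Pm.
      intros x y Hx Hy. unfold madd, mscale, mmul, outer, ev.
      rewrite <- csum_scal_l, <- csum_add. apply csum_ext; intros; ring.
    + rewrite <- mmul_assoc, mtr_comm. rewrite mtr_outer.
      rewrite (csum_ext n _ (fun r => Cmul (dlt i r) (mmul n (Tm n al k p) (Pm n al p) j r))).
      * rewrite csum_delta by auto. reflexivity.
      * intros. rewrite rowmul_ev by auto. unfold ev. rewrite dlt_sym. reflexivity.
  - destruct (Nat.leb_spec a al) as [Ha|Ha]; unfold gcol; [apply Nat.leb_le in Ha as Ha'; rewrite Ha'|].
    + replace (mulcol n (Gm n al k p a) (pW p a) j) with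
        (mtr n (mmul n (Tm n al k p) (mmul n (mmul n (mmul n (Qge n al p (S a)) (outer (pW p a) (ev j))) (Plt n p a)) (pZ p)))).
      * apply Ham_deriv_gen; [exact Hk|]. intros z. apply S_mat_update; [exact Ha|reflexivity| |].
        -- intros b0 Hb0; rewrite IWV_upd_V_other by exact Hb0; reflexivity.
        -- apply IWV_upd_V_same.
      * rewrite mtr_cyc3. rewrite Gm_eq. rewrite mtr_outer. unfold mulcol. apply csum_ext; intros.
        rewrite rowmul_ev by auto. ring.
    + apply Nat.leb_gt in Ha as Ha'. rewrite Ha'.
      apply (Ham_deriv_gen' n al k p _ mzero C0 Hk).
      * intros z. rewrite <- meq_plus_zero. apply S_mat_same; [reflexivity|].
        intros. rewrite IWV_upd_V_other by lia. reflexivity.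
      * symmetry; apply mtr_T_zero.
  - destruct (Nat.leb_spec a al) as [Ha|Ha]; unfold hrow; [apply Nat.leb_le in Ha as Ha'; rewrite Ha'|].
    + replace (rowmul n (pV p a) (Gm n al k p a) j) with
        (mtr n (mmul n (Tm n al k p) (mmul n (mmul n (mmul n (Qge n al p (S a)) (outer (ev j) (pV p a))) (Plt n p a)) (pZ p)))).
      * apply Ham_deriv_gen; [exact Hk|]. intros z. apply S_mat_update; [exact Ha|reflexivity| |].
        -- intros b0 Hb0; rewrite IWV_upd_W_other by exact Hb0; reflexivity.
        -- apply IWV_upd_W_same.
      * rewrite mtr_cyc3. rewrite Gm_eq. rewrite mtr_outer. unfold ev.
        rewrite (csum_ext n _ (fun r => Cmul (dlt j r) (rowmul n (pV p a) (Gm n al k p a) r))) by (intros; rewrite dlt_sym; ring).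
        apply csum_delta; auto.
    + apply Nat.leb_gt in Ha as Ha'. rewrite Ha'.
      apply (Ham_deriv_gen' n al k p _ mzero C0 Hk).
      * intros z. rewrite <- meq_plus_zero. apply S_mat_same; [reflexivity|].
        intros. rewrite IWV_upd_W_other by lia. reflexivity.
      * symmetry; apply mtr_T_zero.
Qed.

Lemma is_inverse_meq : forall n A A' B B', meq n A A' -> meq n B B' -> is_inverse n A B -> is_inverse n A' B'.
Proof. intros n A A' B B' HA HB [H1 H2]. split; [rewrite <- HA, <- HB; auto| rewrite <- HA, <- HB; auto]. Qed.

Lemma inverse_unique : forall n A B B', is_inverse n A B -> is_inverse n A B' -> meq n B B'.
Proof.
  intros n A B B' [H1 H2] [H3 H4].
  rewrite <- (mmul_id_r n B). rewrite <- H3. rewrite <- mmul_assoc. rewrite H2. apply mmul_id_l.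
Qed.

Lemma minv_spec : forall n A, invertible n A -> is_inverse n A (minv n A).
Proof. intros. unfold minv. apply epsilon_spec. exact H. Qed.

Lemma minv_meq : forall n A B, invertible n A -> is_inverse n A B -> meq n (minv n A) B.
Proof. intros. apply (inverse_unique n A); auto. apply minv_spec; auto. Qed.

Lemma inverse_mul : forall n A Ai B Bi, is_inverse n A Ai -> is_inverse n B Bi ->
  is_inverse n (mmul n A B) (mmul n Bi Ai).
Proof.
  intros n A Ai B Bi [H1 H2] [H3 H4]. split.
  - rewrite mmul_assoc. rewrite <- (mmul_assoc n B Bi). rewrite H3. rewrite mmul_id_l. auto.
  - rewrite mmul_assoc. rewrite <- (mmul_assoc n Ai A). rewrite H2. rewrite mmul_id_l. auto.
Qed.

Lemma inverse_id : forall n, is_inverse n mId mId.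
Proof. intros; split; apply mmul_id_l. Qed.

Lemma mprod_up_split : forall n f p q,
  meq n (mprod_up n f (p + q)) (mmul n (mprod_up n f p) (mprod_up n (fun m => f (p + m)%nat) q)).
Proof.
  intros n f p q. induction q; simpl.
  - rewrite Nat.add_0_r. rewrite mmul_id_r. reflexivity.
  - rewrite Nat.add_succ_r. simpl. rewrite IHq. rewrite mmul_assoc. reflexivity.
Qed.

Lemma mprod_up_ext_meq : forall n f g q, (forall m, (m < q)%nat -> meq n (f m) (g m)) ->
  meq n (mprod_up n f q) (mprod_up n g q).
Proof. induction q; intros; simpl; [reflexivity|]. rewrite IHq by (intros; apply H; lia). rewrite H by lia; reflexivity. Qed.

Lemma mprod_inverse : forall n (f g : nat -> mat) q, (forall m, (m < q)%nat -> is_inverse n (f m) (g m)) ->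
  is_inverse n (mprod_down n f q) (mprod_up n g q).
Proof.
  induction q; intros; simpl.
  - apply inverse_id.
  - apply inverse_mul; auto.
Qed.

Lemma mprod_down_conj : forall n (f f' : nat -> mat) E F q,
  meq n (mmul n E F) mId -> meq n (mmul n F E) mId ->
  (forall m, (m < q)%nat -> meq n (f' m) (mmul n (mmul n E (f m)) F)) ->
  meq n (mprod_down n f' q) (mmul n (mmul n E (mprod_down n f q)) F).
Proof.
  intros n f f' E F q HEF HFE Hf. induction q; simpl.
  - rewrite mmul_id_r. symmetry; auto.
  - rewrite IHq by (intros; apply Hf; lia). rewrite Hf by lia.
    rewrite !mmul_assoc. rewrite <- (mmul_assoc n F E). rewrite HFE. rewrite mmul_id_l. reflexivity.
Qed.

Lemma mprod_up_conj : forall n (f f' : nat -> mat) E F q,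
  meq n (mmul n E F) mId -> meq n (mmul n F E) mId ->
  (forall m, (m < q)%nat -> meq n (f' m) (mmul n (mmul n E (f m)) F)) ->
  meq n (mprod_up n f' q) (mmul n (mmul n E (mprod_up n f q)) F).
Proof.
  intros n f f' E F q HEF HFE Hf. induction q; simpl.
  - rewrite mmul_id_r. symmetry; auto.
  - rewrite IHq by (intros; apply Hf; lia). rewrite Hf by lia.
    rewrite !mmul_assoc. rewrite <- (mmul_assoc n F E). rewrite HFE. rewrite mmul_id_l. reflexivity.
Qed.

Lemma mpow_conj : forall n A E F m,
  meq n (mmul n E F) mId -> meq n (mmul n F E) mId ->
  meq n (mpow n (mmul n (mmul n E A) F) m) (mmul n (mmul n E (mpow n A m)) F).
Proof.
  intros n A E F m HEF HFE. induction m; simpl.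
  - rewrite mmul_id_r. symmetry; auto.
  - rewrite IHm. rewrite !mmul_assoc. rewrite <- (mmul_assoc n F E). rewrite HFE. rewrite mmul_id_l. reflexivity.
Qed.

Lemma comm_inverse : forall n E S Si, is_inverse n S Si -> meq n (mmul n E S) (mmul n S E) ->
  meq n (mmul n E Si) (mmul n Si E).
Proof.
  intros n E S Si [H1 H2] HC.
  transitivity (mmul n (mmul n Si S) (mmul n E Si)).
  { rewrite H2. rewrite mmul_id_l. reflexivity. }
  rewrite mmul_assoc. rewrite <- (mmul_assoc n S E Si). rewrite <- HC.
  rewrite (mmul_assoc n E S Si). rewrite H1. rewrite mmul_id_r. reflexivity.
Qed.

Lemma Copp_Copp : forall t, Copp (Copp t) = t.
Proof. intros; ring. Qed.

Lemma Ec_EF : forall n A t, meq n (mmul n (Ec n A t) (Ec n A (Copp t))) mId.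
Proof. intros; apply Ec_inv. Qed.
Lemma Ec_FE : forall n A t, meq n (mmul n (Ec n A (Copp t)) (Ec n A t)) mId.
Proof. intros. pose proof (Ec_inv n A (Copp t)). rewrite Copp_Copp in H. exact H. Qed.

Lemma Ec_commA : forall n A t, meq n (mmul n A (Ec n A t)) (mmul n (Ec n A t) A).
Proof. intros. apply Ec_comm. reflexivity. Qed.

Lemma flow_Ep : forall n al k p t, meq n (mexp n (mscale t (mpow n (S_mat n al p) k))) (Ec n (Skm n al k p) t).
Proof. intros. apply mexp_Ec. Qed.

Lemma flow_pX : forall n al k p t, pX (flow n al k p t) =
  mmul n (pX p) (mexp n (mscale (Copp t) (mpow n (S_mat n al p) k))).
Proof. reflexivity. Qed.
Lemma flow_pZ : forall n al k p t, pZ (flow n al k p t) =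
  mmul n (mmul n (mexp n (mscale t (mpow n (S_mat n al p) k))) (pZ p)) (mexp n (mscale (Copp t) (mpow n (S_mat n al p) k))).
Proof. reflexivity. Qed.
Lemma flow_pV : forall n al k p t b, pV (flow n al k p t) b =
  if Nat.leb b al then rowmul n (pV p b) (mexp n (mscale (Copp t) (mpow n (S_mat n al p) k))) else pV p b.
Proof. reflexivity. Qed.
Lemma flow_pW : forall n al k p t b, pW (flow n al k p t) b =
  if Nat.leb b al then mulcol n (mexp n (mscale t (mpow n (S_mat n al p) k))) (pW p b) else pW p b.
Proof. reflexivity. Qed.

Lemma flow_X_meq : forall n al k p t, meq n (pX (flow n al k p t)) (mmul n (pX p) (Ec n (Skm n al k p) (Copp t))).
Proof. intros. rewrite flow_pX. rewrite flow_Ep. reflexivity. Qed.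
Lemma flow_Z_meq : forall n al k p t, meq n (pZ (flow n al k p t))
  (mmul n (mmul n (Ec n (Skm n al k p) t) (pZ p)) (Ec n (Skm n al k p) (Copp t))).
Proof. intros. rewrite flow_pZ. rewrite !flow_Ep. reflexivity. Qed.

Lemma flow_IWV_le : forall n al k p t b, (b <= al)%nat ->
  meq n (IWV (flow n al k p t) b)
    (mmul n (mmul n (Ec n (Skm n al k p) t) (IWV p b)) (Ec n (Skm n al k p) (Copp t))).
Proof.
  intros n al k p t b Hb.
  set (Ep := Ec n (Skm n al k p) t). set (Em := Ec n (Skm n al k p) (Copp t)).
  assert (H1 : IWV (flow n al k p t) b = madd mId (outer
      (mulcol n (mexp n (mscale t (mpow n (S_mat n al p) k))) (pW p b))
      (rowmul n (pV p b) (mexp n (mscale (Copp t) (mpow n (S_mat n al p) k)))))).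
  { unfold IWV. rewrite flow_pV, flow_pW. apply Nat.leb_le in Hb. rewrite Hb. reflexivity. }
  rewrite H1. rewrite <- outer_mmul_l, <- outer_mmul_r. rewrite !flow_Ep. fold Ep Em.
  rewrite IWV_outer. rewrite mmul_madd_r, mmul_madd_l. rewrite mmul_id_r.
  unfold Ep, Em. rewrite Ec_EF. rewrite mmul_assoc. reflexivity.
Qed.

Lemma flow_IWV_gt : forall n al k p t b, (al < b)%nat -> IWV (flow n al k p t) b = IWV p b.
Proof.
  intros. unfold IWV. rewrite flow_pV, flow_pW. destruct (Nat.leb_spec b al); [lia|]. reflexivity.
Qed.

Lemma flow_S : forall n al k p t,
  meq n (S_mat n al (flow n al k p t))
    (mmul n (mmul n (Ec n (Skm n al k p) t) (S_mat n al p)) (Ec n (Skm n al k p) (Copp t))).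
Proof.
  intros. unfold S_mat at 1. rewrite flow_Z_meq.
  rewrite (mprod_down_conj n (IWV p) (IWV (flow n al k p t)) (Ec n (Skm n al k p) t) (Ec n (Skm n al k p) (Copp t)) (S al)).
  - unfold S_mat. rewrite !mmul_assoc. rewrite <- (mmul_assoc n (Ec n (Skm n al k p) (Copp t)) (Ec n (Skm n al k p) t)).
    rewrite Ec_FE. rewrite mmul_id_l. reflexivity.
  - apply Ec_EF.
  - apply Ec_FE.
  - intros. apply flow_IWV_le. lia.
Qed.

Lemma flow_Sk : forall n al k p t, meq n (Skm n al k (flow n al k p t)) (Skm n al k p).
Proof.
  intros. unfold Skm at 1. rewrite flow_S. rewrite mpow_conj by (try apply Ec_EF; apply Ec_FE).
  fold (Skm n al k p). rewrite <- Ec_commA. rewrite mmul_assoc. rewrite Ec_EF. apply mmul_id_r.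
Qed.

Lemma mderiv_Ec : forall n A t, mderiv n (fun s => Ec n A s) t (mmul n A (Ec n A t)).
Proof. intros n A t i j Hi Hj. apply Ec_deriv; auto. Qed.

Lemma mderiv_Ecneg : forall n A t, mderiv n (fun s => Ec n A (Copp s)) t (mneg (mmul n A (Ec n A (Copp t)))).
Proof. intros n A t i j Hi Hj. unfold mneg. apply (cderiv_neg_arg (fun s => Ec n A s i j)). apply Ec_deriv; auto. Qed.

Lemma mderiv_entry : forall n F t M M' i j, mderiv n F t M -> meq n M M' -> (i < n)%nat -> (j < n)%nat ->
  has_cderiv (fun s => F s i j) t (M' i j).
Proof. intros. rewrite <- H0 by auto. apply H; auto. Qed.

Lemma mneg_mmul_r : forall n A B, mneg (mmul n A B) = mmul n A (mneg B).
Proof. intros. rewrite mmul_mneg_r. reflexivity. Qed.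

Lemma rowmul_as_mmul : forall n v M l, rowmul n v M l = csum n (fun m => Cmul (v m) (M m l)).
Proof. reflexivity. Qed.

Lemma madd_zero_r : forall A, madd A mzero = A.
Proof. intros; extensionality i; extensionality j; unfold madd, mzero; ring. Qed.

Lemma cd_val : forall f t L L', has_cderiv f t L -> L = L' -> has_cderiv f t L'.
Proof. intros; subst; auto. Qed.

Lemma flow_deriv : forall n d al k p t c, (al < d)%nat -> (k >= 1)%nat -> In c (coords n d) ->
  has_cderiv (fun s => coord_val (flow n al k p s) c) t
    (clsum (coords n d) (fun a => Cmul (dHv n al k (flow n al k p t) a) (br n (flow n al k p t) a c))).
Proof.
  intros n d al k p t c Hd Hk Hc. pose proof (in_coords n d c Hc) as Hr.
  set (A := Skm n al k p). set (Ep := Ec n A t). set (Em := Ec n A (Copp t)).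
  assert (HSk := flow_Sk n al k p t). fold A in HSk.
  assert (HAF : meq n (mmul n A Em) (mmul n Em A)) by apply Ec_commA.
  assert (HAE : meq n (mmul n A Ep) (mmul n Ep A)) by apply Ec_commA.
  destruct c as [kk ll|kk ll|b ll|b kk]; destruct Hr as [H1 H2].
  - rewrite br_X by auto. simpl coord_val.
    eapply cderiv_ext. { intros s. symmetry. apply (flow_X_meq n al k p s); auto. }
    apply (cd_val _ _ (madd (mmul n mzero Em) (mmul n (pX p) (mneg (mmul n A Em))) kk ll)).
    + apply (mderiv_mmul n (fun _ => pX p) (fun s => Ec n A (Copp s))); auto.
      apply mderiv_const. apply mderiv_Ecneg.
    + assert (Hm : meq n (madd (mmul n mzero Em) (mmul n (pX p) (mneg (mmul n A Em))))
                        (mneg (mmul n (pX (flow n al k p t)) (Skm n al k (flow n al k p t))))).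
      { rewrite mmul_zero_l. rewrite (flow_X_meq n al k p t). fold A Em. rewrite HSk.
        rewrite mmul_mneg_r. rewrite HAF. rewrite mmul_assoc.
        intros i j Hi Hj. unfold madd, mzero, mneg. ring. }
      rewrite (Hm kk ll) by auto. reflexivity.
  - rewrite br_Z by auto. simpl coord_val.
    eapply cderiv_ext. { intros s. symmetry. apply (flow_Z_meq n al k p s); auto. }
    apply (cd_val _ _ (madd (mmul n (madd (mmul n (mmul n A Ep) (pZ p)) (mmul n Ep mzero)) Em)
                            (mmul n (mmul n Ep (pZ p)) (mneg (mmul n A Em))) kk ll)).
    + apply (mderiv_mmul n (fun s => mmul n (Ec n A s) (pZ p)) (fun s => Ec n A (Copp s))); auto.
      * apply (mderiv_mmul n (fun s => Ec n A s) (fun _ => pZ p)). apply mderiv_Ec. apply mderiv_const.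
      * apply mderiv_Ecneg.
    + assert (Hm : meq n (madd (mmul n (madd (mmul n (mmul n A Ep) (pZ p)) (mmul n Ep mzero)) Em)
                            (mmul n (mmul n Ep (pZ p)) (mneg (mmul n A Em))))
                   (msub (mmul n (Skm n al k (flow n al k p t)) (pZ (flow n al k p t)))
                         (mmul n (pZ (flow n al k p t)) (Skm n al k (flow n al k p t))))).
      { rewrite (flow_Z_meq n al k p t). fold A Ep Em. rewrite HSk.
        rewrite mmul_zero_r, madd_zero_r. rewrite mmul_mneg_r. rewrite HAF. rewrite !mmul_assoc.
        intros i j Hi Hj. unfold madd, mneg, msub. ring. }
      rewrite (Hm kk ll) by auto. reflexivity.
  - rewrite br_V by auto. simpl coord_val. rewrite flow_pV.
    destruct (Nat.leb_spec b al) as [Hb|Hb].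
    + apply (cderiv_ext (fun s => csum n (fun m => Cmul (pV p b m) (Ec n A (Copp s) m ll)))).
      { intros s. unfold rowmul. apply csum_ext. intros m Hm. unfold A. rewrite (flow_Ep n al k p (Copp s)) by auto. reflexivity. }
      apply (cd_val _ _ (csum n (fun m => Cmul (pV p b m) (mneg (mmul n A Em) m ll)))).
      * apply cderiv_csum. intros m Hm. apply cderiv_scal. apply mderiv_Ecneg; auto.
      *         rewrite <- rowmul_mmul. rewrite (rowmul_meq n _ _ _ ll (mmul_mor n _ _ (flow_Ep n al k p (Copp t)) _ _ HSk)) by auto.
        fold A Em. rewrite <- (rowmul_meq n _ _ _ ll HAF) by auto.
        unfold rowmul, mneg. rewrite <- csum_opp. apply csum_ext; intros; ring.
    + apply (cd_val _ _ C0); [apply cderiv_const| reflexivity].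
  - rewrite br_W by auto. simpl coord_val. rewrite flow_pW.
    destruct (Nat.leb_spec b al) as [Hb|Hb].
    + apply (cderiv_ext (fun s => csum n (fun m => Cmul (pW p b m) (Ec n A s kk m)))).
      { intros s. unfold mulcol. apply csum_ext. intros m Hm. unfold A. rewrite (flow_Ep n al k p s) by auto. ring. }
      apply (cd_val _ _ (csum n (fun m => Cmul (pW p b m) (mmul n A Ep kk m)))).
      * apply cderiv_csum. intros m Hm.
        eapply cderiv_ext; [| apply cderiv_scal; apply (mderiv_Ec n A t kk m); auto].
        intros; simpl; ring.
      *         rewrite <- mulcol_mmul. rewrite (mulcol_meq n _ _ _ kk (mmul_mor n _ _ HSk _ _ (flow_Ep n al k p t))) by auto.
        unfold mulcol, Ep, A. apply csum_ext; intros; ring.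
    + apply (cd_val _ _ C0); [apply cderiv_const| reflexivity].
Qed.

Lemma conj_inverse : forall n E F M Mi, meq n (mmul n E F) mId -> meq n (mmul n F E) mId ->
  is_inverse n M Mi -> is_inverse n (mmul n (mmul n E M) F) (mmul n E (mmul n Mi F)).
Proof.
  intros n E F M Mi HEF HFE HM.
  assert (H1 : is_inverse n (mmul n E M) (mmul n Mi F)).
  { apply inverse_mul; auto. split; auto. }
  apply inverse_mul; auto. split; auto.
Qed.

Lemma cancel_l : forall n E F M, meq n (mmul n F E) mId -> meq n (mmul n F (mmul n E M)) M.
Proof. intros. rewrite <- mmul_assoc. rewrite H. apply mmul_id_l. Qed.

Lemma flow_in_M : forall n d q al k p t, (al < d)%nat -> in_M n d q p -> in_M n d q (flow n al k p t).
Proof.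
  intros n d q al k p t Hd [[Xi HX] [[Zi HZ] [HL Hm]]].
  set (A := Skm n al k p). set (E := Ec n A t). set (F := Ec n A (Copp t)).
  assert (HEF : meq n (mmul n E F) mId) by apply Ec_EF.
  assert (HFE : meq n (mmul n F E) mId) by apply Ec_FE.
  assert (HXt : meq n (pX (flow n al k p t)) (mmul n (pX p) F)) by apply flow_X_meq.
  assert (HZt : meq n (pZ (flow n al k p t)) (mmul n (mmul n E (pZ p)) F)) by apply flow_Z_meq.
  assert (IXt : is_inverse n (pX (flow n al k p t)) (mmul n E (minv n (pX p)))).
  { eapply is_inverse_meq; [symmetry; exact HXt| reflexivity|].
    apply inverse_mul; [apply minv_spec; exists Xi; auto| split; auto]. }
  assert (IZt : is_inverse n (pZ (flow n al k p t)) (mmul n E (mmul n (minv n (pZ p)) F))).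
  { eapply is_inverse_meq; [symmetry; exact HZt| reflexivity|].
    apply conj_inverse; auto. apply minv_spec; exists Zi; auto. }
  assert (IL : forall a, (a < d)%nat -> is_inverse n (IWV (flow n al k p t) a)
       (if Nat.leb a al then mmul n E (mmul n (minv n (IWV p a)) F) else minv n (IWV p a))).
  { intros a Ha. destruct (Nat.leb_spec a al).
    - eapply is_inverse_meq; [symmetry; apply flow_IWV_le; auto| reflexivity|].
      apply conj_inverse; auto. apply minv_spec; auto.
    - rewrite flow_IWV_gt by auto. apply minv_spec; auto. }
  split; [exists (mmul n E (minv n (pX p))); auto|].
  split; [exists (mmul n E (mmul n (minv n (pZ p)) F)); auto|].
  split; [intros a Ha; eexists; apply IL; auto|].
  rewrite (minv_meq n _ _ (ex_intro _ _ IXt) IXt).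
  rewrite (minv_meq n _ _ (ex_intro _ _ IZt) IZt).
  rewrite (mprod_up_ext_meq n _ (fun a => if Nat.leb a al then mmul n E (mmul n (minv n (IWV p a)) F) else minv n (IWV p a)) d).
  2:{ intros a Ha. apply minv_meq; [eexists; apply IL; auto| apply IL; auto]. }
  rewrite HXt, HZt.
  replace d with (S al + (d - S al))%nat by lia.
  replace d with (S al + (d - S al))%nat in Hm by lia.
  rewrite mprod_up_split.
  rewrite (mprod_up_conj n (fun a => minv n (IWV p a)) _ E F (S al) HEF HFE).
  2:{ intros m Hm'. destruct (Nat.leb_spec m al); [|lia]. rewrite mmul_assoc. reflexivity. }
  rewrite (mprod_up_ext_meq n (fun m => if Nat.leb (S al + m) al then mmul n E (mmul n (minv n (IWV p (S al + m))) F) else minv n (IWV p (S al + m)))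
            (fun m => minv n (IWV p (S al + m))) (d - S al)).
  2:{ intros m Hm'. destruct (Nat.leb_spec (S al + m) al); [lia|reflexivity]. }
  rewrite (mprod_up_split n (fun a => minv n (IWV p a)) (S al) (d - S al)) in Hm.
  set (K := mprod_up n (fun a => minv n (IWV p a)) (S al)) in *.
  set (R := mprod_up n (fun m => minv n (IWV p (S al + m))) (d - S al)) in *.
  set (Xi' := minv n (pX p)) in *. set (Zi' := minv n (pZ p)) in *.
  assert (HS : is_inverse n (S_mat n al p) (mmul n Zi' K)).
  { unfold S_mat. apply inverse_mul.
    - apply mprod_inverse. intros; apply minv_spec; apply HL; lia.
    - apply minv_spec; exists Zi; auto. }
  assert (HES : meq n (mmul n E (S_mat n al p)) (mmul n (S_mat n al p) E)).
  { symmetry. apply Ec_comm. unfold A, Skm. apply mpow_comm. }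
  assert (HEZK : meq n (mmul n E (mmul n Zi' K)) (mmul n (mmul n Zi' K) E)).
  { apply (comm_inverse n E (S_mat n al p)); auto. }
  rewrite !mmul_assoc. rewrite !(cancel_l n E F) by auto.
  assert (HC : meq n (mmul n E (mmul n Zi' (mmul n K (mmul n F R)))) (mmul n Zi' (mmul n K R))).
  { rewrite <- (mmul_assoc n Zi' K). rewrite <- (mmul_assoc n E). rewrite HEZK.
    rewrite !mmul_assoc. rewrite (cancel_l n F E) by auto. reflexivity. }
  rewrite HC. rewrite <- Hm. rewrite !mmul_assoc. reflexivity.
Qed.

Lemma flow_at0 : forall n d al k p c, In c (coords n d) -> coord_val (flow n al k p C0) c = coord_val p c.
Proof.
  intros n d al k p c Hc. apply in_coords in Hc.
  set (A := Skm n al k p).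
  assert (H0 : meq n (mexp n (mscale C0 (mpow n (S_mat n al p) k))) mId).
  { rewrite flow_Ep. apply Ec_0. }
  assert (H0' : meq n (mexp n (mscale (Copp C0) (mpow n (S_mat n al p) k))) mId).
  { replace (Copp C0) with C0 by ring. exact H0. }
  destruct c as [i j|i j|a j|a j]; destruct Hc as [H1 H2]; simpl coord_val.
  - try rewrite flow_pX. assert (Hq : meq n (mmul n (pX p) (mexp n (mscale (Copp C0) (mpow n (S_mat n al p) k)))) (pX p))
      by (rewrite H0'; apply mmul_id_r). apply Hq; auto.
  - try rewrite flow_pZ. assert (Hq : meq n (mmul n (mmul n (mexp n (mscale C0 (mpow n (S_mat n al p) k))) (pZ p)) (mexp n (mscale (Copp C0) (mpow n (S_mat n al p) k)))) (pZ p))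
      by (rewrite H0, H0', mmul_id_l; apply mmul_id_r). apply Hq; auto.
  - try rewrite flow_pV. destruct (Nat.leb a al); [|reflexivity].
    rewrite (rowmul_meq n _ _ _ j H0') by auto. apply rowmul_id; auto.
  - try rewrite flow_pW. destruct (Nat.leb a al); [|reflexivity].
    rewrite (mulcol_meq n _ _ _ j H0) by auto. apply mulcol_id; auto.
Qed.

Theorem mainTheorem16 :
  forall (n d : nat) (q : Cx), (n >= 1)%nat -> (d >= 1)%nat ->
  q <> C0 -> ~ root_of_unity q ->
  forall (alpha k : nat), (alpha < d)%nat -> (k >= 1)%nat ->
  forall p : point, in_M n d q p ->
    (forall c : coord, In c (coords n d) ->
       coord_val (flow n alpha k p C0) c = coord_val p c) /\
    (forall t : Cx,
       in_M n d q (flow n alpha k p t) /\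
       forall c : coord, In c (coords n d) ->
         exists dH : coord -> Cx,
           (forall a : coord, In a (coords n d) ->
              has_cderiv (fun z => Ham n alpha k (upd (flow n alpha k p t) a z)) C0 (dH a)) /\
           has_cderiv (fun s => coord_val (flow n alpha k p s) c) t
             (clsum (coords n d) (fun a => Cmul (dH a) (br n (flow n alpha k p t) a c)))).
Proof.
  intros n d q Hn Hd Hq Hroot al k Hal Hk p HM. split.
  - intros c Hc. apply (flow_at0 n d al k p c Hc).
  - intros t. split.
    + apply flow_in_M; auto.
    + intros c Hc. exists (dHv n al k (flow n al k p t)). split.
      * intros a Ha. apply (Ham_deriv n d al k (flow n al k p t) a); auto.
      * apply flow_deriv; auto.
Qed.
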